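(* For every integer $n$ with $1\le n \leq 5$, the quotient $\mathbb{Z}[\operatorname{SL}_2(\mathbb{Z})]/((u-1)^n)$ of the group ring by the two-sided ideal generated by $(u-1)^n$ is a finitely generated $\mathbb{Z}$-module.
   Context: $u = \begin{pmatrix}1 & 1 \\ 0 & 1\end{pmatrix}\in\operatorname{SL}_2(\mathbb{Z})$, and $\mathbb{Z}[\operatorname{SL}_2(\mathbb{Z})]$ is the integral group ring of the abstract group $\operatorname{SL}_2(\mathbb{Z})$. *)

(* Defs.v *)
From HB Require Import structures.
From mathcomp Require Import all_boot all_order all_algebra.
Set Implicit Arguments. Unset Strict Implicit. Unset Printing Implicit Defensive.
Import Order.TTheory GRing.Theory Num.Theory.
Local Open Scope ring_scope.

Notation M2 := 'M[int]_2.
Definition inSL2 (A : M2) : bool := \det A == 1.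

(* Elements of the integral group ring Z[SL_2(Z)] are represented as finite
   formal sums  sum_i c_i [g_i]  (a list of pairs (c_i, g_i)), with all g_i
   in SL_2(Z). *)
Definition GR := seq (int * M2).

Definition inGR (r : GR) : bool := all (fun p => inSL2 p.2) r.

Definition coef (r : GR) (g : M2) : int := \sum_(p <- r | p.2 == g) p.1.

Definition gr_eq (r s : GR) : Prop := forall g : M2, coef r g = coef s g.

Definition gr_add (r s : GR) : GR := r ++ s.
Definition gr_scale (c : int) (r : GR) : GR := [seq (c * p.1, p.2) | p <- r].
Definition gr_sub (r s : GR) : GR := gr_add r (gr_scale (-1) s).
Definition gr_mul (r s : GR) : GR := [seq (p.1 * q.1, p.2 *m q.2) | p <- r, q <- s].
Definition gr_one : GR := [:: (1, 1%:M)].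
Definition gr_of (g : M2) : GR := [:: (1, g)].
Definition gr_pow (n : nat) (x : GR) : GR := iter n (gr_mul x) gr_one.

Definition gr_lincomb (cs : seq int) (gens : seq GR) : GR :=
  flatten [seq gr_scale c.1 c.2 | c <- zip cs gens].

(* r lies in the two-sided ideal generated by x: r = sum_k c_k g_k x h_k
   with c_k in Z and g_k, h_k in SL_2(Z) (these span the two-sided ideal
   as an abelian group). *)
Definition in_ideal2 (x r : GR) : Prop :=
  exists l : seq (int * M2 * M2),
    all (fun t => inSL2 t.1.2 && inSL2 t.2) l /\
    gr_eq r (flatten [seq gr_scale t.1.1 (gr_mul (gr_of t.1.2) (gr_mul x (gr_of t.2)))
                     | t <- l]).

Definition quotient_fg (x : GR) : Prop :=
  exists gens : seq GR,
    all inGR gens /\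
    forall r : GR, inGR r ->
      exists cs : seq int, size cs = size gens /\
        in_ideal2 x (gr_sub r (gr_lincomb cs gens)).

Definition u : M2 := \matrix_(i < 2, j < 2) (if (i <= j)%N then 1 else 0).

Definition u_minus_1 : GR := [:: (1, u); (-1, 1%:M)].

(* Main.v *)
Require Import Defs.
From mathcomp Require Import all_boot all_order all_algebra.
From mathcomp Require Import ssrZ.
From Stdlib Require Import ZArith FMapPositive.
From mathcomp Require Import ring zify.
Set Implicit Arguments. Unset Strict Implicit. Unset Printing Implicit Defensive.
Import Order.TTheory GRing.Theory Num.Theory.
Local Open Scope ring_scope.

Definition mx22 (a b c d : int) : M2 :=
  \matrix_(i < 2, j < 2) (if i == 0 then (if j == 0 then a else b)
                          else (if j == 0 then c else d)).

Lemma mx22E (g : M2) : g = mx22 (g 0 0) (g 0 1) (g 1 0) (g 1 1).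
Proof.
apply/matrixP=> i j; rewrite mxE.
by case: i => [[|[|//]] Hi]; case: j => [[|[|//]] Hj] /=;
  congr (g _ _); apply: val_inj.
Qed.

Lemma mx22_mul a b c d a' b' c' d' :
  mx22 a b c d *m mx22 a' b' c' d' =
  mx22 (a * a' + b * c') (a * b' + b * d') (c * a' + d * c') (c * b' + d * d').
Proof.
apply/matrixP=> i j; rewrite !mxE !big_ord_recl big_ord0 !mxE addr0 /=.
by case: i => [[|[|//]] Hi]; case: j => [[|[|//]] Hj].
Qed.

Lemma mx22_det a b c d : \det (mx22 a b c d) = a * d - b * c.
Proof.
rewrite (expand_det_row _ 0) !big_ord_recl big_ord0 /cofactor !det_mx11 !mxE /=.
rewrite !expr0 !expr1 !mul1r.
by rewrite addr0 mulN1r mulrN.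
Qed.

Lemma mx22_eq a b c d a' b' c' d' :
  (mx22 a b c d == mx22 a' b' c' d') = [&& a == a', b == b', c == c' & d == d'].
Proof.
apply/eqP/idP.
- move/matrixP=> H.
  have := H 0 0; have := H 0 1; have := H 1 0; have := H 1 1.
  by rewrite !mxE /= => -> -> -> ->; rewrite !eqxx.
- by case/and4P=> /eqP-> /eqP-> /eqP-> /eqP->.
Qed.
Section GRlemmas.
Variable X : GR.
Local Notation J := (in_ideal2 X).

Lemma coef_nil g : coef [::] g = 0.
Proof. by rewrite /coef big_nil. Qed.
Lemma coef_cons p r g : coef (p :: r) g = (if p.2 == g then p.1 else 0) + coef r g.
Proof. by rewrite /coef big_cons; case: ifP; rewrite ?add0r. Qed.
Lemma coef_cat r s g : coef (r ++ s) g = coef r g + coef s g.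
Proof. by rewrite /coef big_cat. Qed.
Lemma coef_scale c r g : coef (gr_scale c r) g = c * coef r g.
Proof.
elim: r => [|p r IH]; first by rewrite /gr_scale /= coef_nil mulr0.
change (gr_scale c (p :: r)) with ((c * p.1, p.2) :: gr_scale c r).
rewrite !coef_cons IH /= mulrDr.
by case: ifP; rewrite ?mulr0.
Qed.
Lemma coef_sub r s g : coef (gr_sub r s) g = coef r g - coef s g.
Proof. by rewrite /gr_sub /gr_add coef_cat coef_scale mulN1r. Qed.
Lemma coef_flatten rs g : coef (flatten rs) g = \sum_(r <- rs) coef r g.
Proof.
elim: rs => [|r rs IH]; first by rewrite big_nil coef_nil.
by rewrite /= coef_cat IH big_cons.
Qed.

Definition lmul (s : M2) (r : GR) : GR := [seq (p.1, s *m p.2) | p <- r].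

Lemma gr_mul_ofl s r : gr_mul (gr_of s) r = lmul s r.
Proof. by rewrite /gr_mul /= cats0; apply: eq_map => p; rewrite mul1r. Qed.

Lemma coef_lmul s r g : s \in unitmx -> coef (lmul s r) g = coef r (invmx s *m g).
Proof.
move=> Hs; rewrite /coef /lmul big_map; apply: eq_bigl => p /=.
apply/eqP/eqP => [<-|->]; first by rewrite mulKmx.
by rewrite mulKVmx.
Qed.

Lemma gr_eq_refl r : gr_eq r r. Proof. by []. Qed.
Lemma gr_eq_trans r s t : gr_eq r s -> gr_eq s t -> gr_eq r t.
Proof. by move=> H1 H2 g; rewrite H1. Qed.

Lemma J_eq r s : gr_eq r s -> J r -> J s.
Proof. by move=> H [l [Hl H2]]; exists l; split=> // g; rewrite -H. Qed.

Lemma J_nil : J [::].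
Proof. by exists [::]; split=> // g. Qed.

Lemma J_cat r s : J r -> J s -> J (r ++ s).
Proof.
move=> [l1 [H1 E1]] [l2 [H2 E2]]; exists (l1 ++ l2); split.
  by rewrite all_cat H1 H2.
by move=> g; rewrite coef_cat E1 E2 map_cat flatten_cat coef_cat.
Qed.

Lemma J_scale c r : J r -> J (gr_scale c r).
Proof.
move=> [l [H E]]; exists [seq (c * t.1.1, t.1.2, t.2) | t <- l]; split.
  by rewrite all_map.
move=> g; rewrite coef_scale E !coef_flatten big_distrr /= big_map.
rewrite -map_comp big_map; apply: eq_bigr => t _; by rewrite /= !coef_scale mulrA.
Qed.

Lemma unit_of_SL2 s : inSL2 s -> s \in unitmx.
Proof. by rewrite /inSL2 unitmxE => /eqP ->; rewrite unitr1. Qed.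

Lemma J_lmul s r : inSL2 s -> J r -> J (lmul s r).
Proof.
move=> Hs [l [H E]]; exists [seq (t.1.1, s *m t.1.2, t.2) | t <- l]; split.
  rewrite all_map; apply/allP => t /(allP H) /andP [H1 H2] /=.
  by rewrite H2 andbT /inSL2 det_mulmx (eqP Hs) (eqP H1) mulr1.
move=> g; rewrite coef_lmul ?unit_of_SL2 // E -coef_lmul ?unit_of_SL2 //.
congr coef; rewrite /lmul map_flatten -!map_comp; congr flatten; apply: eq_map => t /=.
rewrite !gr_mul_ofl /lmul /gr_scale -!map_comp; apply: eq_map => p /=.
by rewrite mulmxA.
Qed.
End GRlemmas.
Definition inV (X : GR) (W : seq GR) (r : GR) : Prop :=
  exists cs : seq int, size cs = size W /\ in_ideal2 X (gr_sub r (gr_lincomb cs W)).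

Lemma lincomb_cons c cs w W : gr_lincomb (c :: cs) (w :: W) = gr_scale c w ++ gr_lincomb cs W.
Proof. by []. Qed.
Lemma lincomb_nilr cs : gr_lincomb cs [::] = [::].
Proof. by case: cs. Qed.

Definition addv (cs1 cs2 : seq int) := [seq p.1 + p.2 | p <- zip cs1 cs2].

Lemma coef_lincomb_add W : forall cs1 cs2 g, size cs1 = size W -> size cs2 = size W ->
  coef (gr_lincomb (addv cs1 cs2) W) g = coef (gr_lincomb cs1 W) g + coef (gr_lincomb cs2 W) g.
Proof.
elim: W => [|w W IH] [|c1 cs1] [|c2 cs2] g //=.
- by move=> _ _; rewrite /addv /= !coef_nil addr0.
- move=> [H1] [H2].
  change (addv (c1 :: cs1) (c2 :: cs2)) with ((c1 + c2) :: addv cs1 cs2).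
  rewrite !lincomb_cons !coef_cat !coef_scale IH // mulrDl.
  by rewrite addrACA.
Qed.

Lemma size_addv cs1 cs2 n : size cs1 = n -> size cs2 = n -> size (addv cs1 cs2) = n.
Proof. by move=> H1 H2; rewrite size_map size_zip H1 H2 minnn. Qed.

Lemma coef_lincomb_scale W c : forall cs g,
  coef (gr_lincomb [seq c * x | x <- cs] W) g = c * coef (gr_lincomb cs W) g.
Proof.
elim: W => [|w W IH] [|c1 cs1] g //=; rewrite ?lincomb_nilr ?coef_nil ?mulr0 //.
change (gr_lincomb (c * c1 :: [seq c * x | x <- cs1]) (w :: W)) with
  (gr_scale (c * c1) w ++ gr_lincomb [seq c * x | x <- cs1] W).
by rewrite lincomb_cons !coef_cat !coef_scale IH mulrDr mulrA.
Qed.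

Lemma coef_lincomb0 W : forall k g, coef (gr_lincomb (nseq k 0) W) g = 0.
Proof.
elim: W => [|w W IH] [|k] g //=; rewrite ?lincomb_nilr ?coef_nil //.
change (gr_lincomb (0 :: nseq k 0) (w :: W)) with (gr_scale 0 w ++ gr_lincomb (nseq k 0) W).
by rewrite coef_cat coef_scale IH mul0r addr0.
Qed.

Lemma lincomb_mem W w : w \in W ->
  exists cs, size cs = size W /\ forall g, coef (gr_lincomb cs W) g = coef w g.
Proof.
elim: W => [|a W IH] //; rewrite in_cons; case/orP => [/eqP ->|/IH [cs [Hs Hc]]].
- exists (1 :: nseq (size W) 0); split; first by rewrite /= size_nseq.
  by move=> g; rewrite lincomb_cons coef_cat coef_scale coef_lincomb0 mul1r addr0.
- exists (0 :: cs); split; first by rewrite /= Hs.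
  by move=> g; rewrite lincomb_cons coef_cat coef_scale Hc mul0r add0r.
Qed.

Section InV.
Variables (X : GR) (W : seq GR).
Local Notation J := (in_ideal2 X).
Local Notation V := (inV X W).

Lemma inV_eq r s : gr_eq r s -> V r -> V s.
Proof.
move=> H [cs [Hs HJ]]; exists cs; split=> //; apply: J_eq HJ => g.
by rewrite !coef_sub H.
Qed.

Lemma inV_J r : J r -> V r.
Proof.
move=> HJ; exists (nseq (size W) 0); split; first by rewrite size_nseq.
by apply: J_eq HJ => g; rewrite coef_sub coef_lincomb0 subr0.
Qed.

Lemma inV_nil : V [::].
Proof. exact: inV_J (J_nil X). Qed.

Lemma inV_cat r s : V r -> V s -> V (r ++ s).
Proof.
move=> [c1 [H1 J1]] [c2 [H2 J2]]; exists (addv c1 c2); split.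
  exact: size_addv.
apply: J_eq (J_cat J1 J2) => g.
by rewrite !(coef_cat, coef_sub, coef_scale) coef_lincomb_add //; ring.
Qed.

Lemma inV_scale c r : V r -> V (gr_scale c r).
Proof.
move=> [cs [H1 J1]]; exists [seq c * x | x <- cs]; split; first by rewrite size_map.
apply: J_eq (J_scale c J1) => g.
by rewrite coef_scale !coef_sub coef_scale coef_lincomb_scale mulrBr.
Qed.

Lemma inV_mem w : w \in W -> V w.
Proof.
move=> /lincomb_mem [cs [Hs Hc]]; exists cs; split=> //.
by apply: J_eq (J_nil X) => g; rewrite coef_sub Hc subrr coef_nil.
Qed.

Lemma inV_list r : (forall p, p \in r -> V (gr_of p.2)) -> V r.
Proof.
elim: r => [|p r IH] H; first exact: inV_nil.
have Hp : V (gr_scale p.1 (gr_of p.2)) by apply: inV_scale; apply: H; rewrite mem_head.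
have Hr : V r by apply: IH => q Hq; apply: H; rewrite in_cons Hq orbT.
apply: inV_eq (inV_cat Hp Hr) => g.
by rewrite coef_cat coef_scale !coef_cons coef_nil /=; case: ifP => _; ring.
Qed.

Lemma inV_step R h c : J R -> coef R h = c -> c * c = 1 ->
  (forall p, p \in R -> p.2 != h -> V (gr_of p.2)) -> V (gr_of h).
Proof.
move=> HJ Hc Hcc HR.
set R' := [seq p <- R | p.2 != h].
have VR' : V R' by apply: inV_list => p; rewrite mem_filter => /andP [H1 H2]; exact: HR.
have VR : V R by exact: inV_J.
have V1 := inV_scale c (inV_cat VR (inV_scale (-1) VR')).
apply: inV_eq V1 => g.
have cR' : coef R' g = if g == h then 0 else coef R g.
  rewrite /coef /R' big_filter_cond; case: eqP => [->|Hg].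
    by rewrite big_pred0 // => p; rewrite andNb.
  apply: eq_bigl => p; case: (eqVneq p.2 g) => [->|]; last by rewrite andbF.
  by rewrite andbT; apply/eqP.
rewrite coef_scale coef_cat coef_scale cR' /gr_of coef_cons coef_nil /=.
case: (eqVneq g h) => [E|Hgh]; last by ring.
by rewrite E Hc mulr0 !addr0 Hcc.
Qed.

Lemma inV_lmul s r : inSL2 s -> (forall w, w \in W -> V (lmul s w)) -> V r -> V (lmul s r).
Proof.
move=> Hs HW [cs [Hcs HJ]].
have H1 : V (lmul s (gr_sub r (gr_lincomb cs W))) by apply: inV_J; exact: J_lmul.
have H2 : forall W' cs', all (mem W) W' -> V (lmul s (gr_lincomb cs' W')).
  elim=> [|w W' IH] [|c cs'] //= Hall; rewrite ?lincomb_nilr; try exact: inV_nil.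
  case/andP: Hall => Hw Hall.
  rewrite lincomb_cons /lmul map_cat; apply: inV_cat; last exact: IH.
  have -> : [seq (p.1, s *m p.2) | p <- gr_scale c w] = gr_scale c (lmul s w).
    by rewrite /gr_scale /lmul -!map_comp.
  by apply: inV_scale; apply: HW.
have H3 := H2 W cs (introT allP (fun x Hx => Hx)).
apply: inV_eq (inV_cat H1 H3) => g.
rewrite coef_cat !coef_lmul ?unit_of_SL2 // coef_sub.
by rewrite subrK.
Qed.
End InV.
Definition m4 := (Z * Z * Z * Z)%type.
Definition mul4 (x y : m4) : m4 :=
  let '(a, b, c, d) := x in let '(a', b', c', d') := y in
  ((a * a' + b * c')%Z, (a * b' + b * d')%Z, (c * a' + d * c')%Z, (c * b' + d * d')%Z).
Definition det4 (x : m4) : Z := let '(a, b, c, d) := x in (a * d - b * c)%Z.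
Definition eq4 (x y : m4) : bool :=
  let '(a, b, c, d) := x in let '(a', b', c', d') := y in
  (Z.eqb a a' && Z.eqb b b' && Z.eqb c c' && Z.eqb d d')%bool.
Definition I4 : m4 := (1%Z, 0%Z, 0%Z, 1%Z).
Definition U4 : m4 := (1%Z, 1%Z, 0%Z, 1%Z).
Definition Ui4 : m4 := (1%Z, (-1)%Z, 0%Z, 1%Z).
Definition S4 : m4 := (0%Z, (-1)%Z, 1%Z, 0%Z).

Definition to_M2 (x : m4) : M2 :=
  let '(a, b, c, d) := x in mx22 (int_of_Z a) (int_of_Z b) (int_of_Z c) (int_of_Z d).

Lemma int_of_Z_add a b : int_of_Z (a + b)%Z = int_of_Z a + int_of_Z b.
Proof. exact: (rmorphD int_of_Z). Qed.
Lemma int_of_Z_mul a b : int_of_Z (a * b)%Z = int_of_Z a * int_of_Z b.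
Proof. exact: (rmorphM int_of_Z). Qed.
Lemma int_of_Z_sub a b : int_of_Z (a - b)%Z = int_of_Z a - int_of_Z b.
Proof. exact: (rmorphB int_of_Z). Qed.

Lemma to_M2_mul x y : to_M2 (mul4 x y) = to_M2 x *m to_M2 y.
Proof.
case: x => [[[a b] c] d]; case: y => [[[a' b'] c'] d'].
by rewrite /= mx22_mul !int_of_Z_add !int_of_Z_mul.
Qed.

Lemma to_M2_det x : \det (to_M2 x) = int_of_Z (det4 x).
Proof.
case: x => [[[a b] c] d]; by rewrite /= mx22_det int_of_Z_sub !int_of_Z_mul.
Qed.

Lemma int_of_Z_eq a b : (int_of_Z a == int_of_Z b) = Z.eqb a b.
Proof.
rewrite (eqtype.inj_eq (can_inj int_of_ZK)).
by apply/eqP/idP => [->|/Z.eqb_eq //]; apply/Z.eqb_eq.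
Qed.

Lemma to_M2_eq x y : (to_M2 x == to_M2 y) = eq4 x y.
Proof.
case: x => [[[a b] c] d]; case: y => [[[a' b'] c'] d'].
by rewrite /= mx22_eq !int_of_Z_eq !andbA.
Qed.

Lemma eq4_eq x y : eq4 x y -> x = y.
Proof.
case: x => [[[a b] c] d]; case: y => [[[a' b'] c'] d'] /=.
by case/andP => /andP [/andP [/Z.eqb_eq -> /Z.eqb_eq ->] /Z.eqb_eq ->] /Z.eqb_eq ->.
Qed.

Definition GR4 := list (Z * m4).
Definition toGR (r : GR4) : GR := [seq (int_of_Z p.1, to_M2 p.2) | p <- r].
Definition gr_mul4 (r s : GR4) : GR4 :=
  flatten [seq [seq ((p.1 * q.1)%Z, mul4 p.2 q.2) | q <- s] | p <- r].
Definition gr_pow4 (n : nat) (x : GR4) : GR4 := ssrnat.iter n (gr_mul4 x) [:: (1%Z, I4)].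
Definition um1_4 : GR4 := [:: (1%Z, U4); ((-1)%Z, I4)].

Lemma toGR_mul r s : toGR (gr_mul4 r s) = gr_mul (toGR r) (toGR s).
Proof.
rewrite /toGR /gr_mul4 /gr_mul map_flatten -!map_comp; congr flatten.
apply: eq_map => p /=; rewrite -!map_comp; apply: eq_map => q /=.
by rewrite int_of_Z_mul to_M2_mul.
Qed.

Lemma to_M2_I4 : to_M2 I4 = 1%:M.
Proof.
apply/matrixP=> i j; rewrite !mxE.
by case: i => [[|[|//]] Hi]; case: j => [[|[|//]] Hj].
Qed.

Lemma to_M2_U4 : to_M2 U4 = u.
Proof.
apply/matrixP=> i j; rewrite !mxE.
by case: i => [[|[|//]] Hi]; case: j => [[|[|//]] Hj].
Qed.

Lemma toGR_um1 : toGR um1_4 = u_minus_1.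
Proof. by rewrite /toGR /um1_4 /u_minus_1 /= -to_M2_U4 -to_M2_I4. Qed.

Lemma toGR_pow n x : toGR (gr_pow4 n x) = gr_pow n (toGR x).
Proof.
elim: n => [|n IH]; first by rewrite /toGR /gr_pow /gr_one /= -to_M2_I4.
change (gr_pow4 n.+1 x) with (gr_mul4 x (gr_pow4 n x)).
by rewrite toGR_mul IH.
Qed.

Definition coef4 (r : GR4) (h : m4) : Z :=
  foldr (fun p acc => if eq4 p.2 h then (p.1 + acc)%Z else acc) 0%Z r.

Lemma coef4_ok r h : int_of_Z (coef4 r h) = coef (toGR r) (to_M2 h).
Proof.
elim: r => [|p r IH]; first by rewrite /toGR coef_nil.
rewrite /toGR map_cons coef_cons -/(toGR r) -IH /= to_M2_eq.
by case: ifP => _; rewrite ?int_of_Z_add ?add0r.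
Qed.
Definition key (x : m4) : positive :=
  let '(a, b, c, d) := x in
  Z.to_pos (1 + (a + 4096) + 8192 * ((b + 4096) + 8192 * ((c + 4096) + 8192 * (d + 4096))))%Z.
Definition Map := PositiveMap.t m4.
Definition mem4 (mp : Map) (x : m4) : bool :=
  match PositiveMap.find (key x) mp with Some y => eq4 y x | None => false end.
Definition step4 := (m4 * m4 * m4)%type.
Definition check_step (X4 : GR4) (mp : Map) (st : step4) : bool :=
  let '(h, g, y) := st in
  let R := gr_mul4 [:: (1%Z, g)] (gr_mul4 X4 [:: (1%Z, y)]) in
  let c := coef4 R h in
  [&& Z.eqb (det4 g) 1, Z.eqb (det4 y) 1, Z.eqb c 1 || Z.eqb c (-1)
    & all (fun p => eq4 p.2 h || mem4 mp p.2) R].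
Fixpoint run (X4 : GR4) (mp : Map) (sts : list step4) : option Map :=
  match sts with
  | [::] => Some mp
  | st :: sts' => if check_step X4 mp st
                  then run X4 (PositiveMap.add (key st.1.1) st.1.1 mp) sts' else None
  end.
Definition init (W4 : list m4) : Map :=
  foldr (fun w mp => PositiveMap.add (key w) w mp) (PositiveMap.empty m4) W4.
Definition check_all (n : nat) (W4 : list m4) (sts : list step4) : bool :=
  let X4 := gr_pow4 n um1_4 in
  match run X4 (init W4) sts with
  | Some mp => all (fun w => [&& Z.eqb (det4 w) 1, mem4 mp (mul4 S4 w),
                                 mem4 mp (mul4 U4 w) & mem4 mp (mul4 Ui4 w)]) W4
  | None => false
  end.

Section Soundness.
Variables (n : nat) (W4 : list m4).
Local Notation X := (gr_pow n u_minus_1).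
Definition Wg := [seq gr_of (to_M2 w) | w <- W4].
Local Notation V := (inV X Wg).

Definition Inv (mp : Map) := forall k v, PositiveMap.find k mp = Some v -> V (gr_of (to_M2 v)).

Lemma mem_ok mp x : Inv mp -> mem4 mp x -> V (gr_of (to_M2 x)).
Proof.
rewrite /mem4; case E: (PositiveMap.find (key x) mp) => [y|] // H /eq4_eq Hy.
by rewrite -Hy; apply: (H _ _ E).
Qed.

Lemma Inv_add mp k v : Inv mp -> V (gr_of (to_M2 v)) -> Inv (PositiveMap.add k v mp).
Proof.
move=> H Hv k' v'; case: (Pos.eq_dec k' k) => [->|Hne].
  by rewrite PositiveMap.gss => -[<-].
by rewrite PositiveMap.gso //; apply: H.
Qed.

Lemma Inv_init : Inv (init W4).
Proof.
suff : forall W', all (fun w => w \in W4) W' -> Inv (init W') by apply; apply/allP.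
elim=> [|w W' IH] /=.
  by move=> _ k v; rewrite PositiveMap.gempty.
case/andP=> Hw Hall; apply: Inv_add; first exact: IH.
by apply: inV_mem; apply: map_f.
Qed.

Lemma int_of_Z_1 : int_of_Z 1%Z = 1. Proof. by []. Qed.
Lemma int_of_Z_m1 : int_of_Z (-1)%Z = -1. Proof. by []. Qed.

Lemma inSL2_of x : Z.eqb (det4 x) 1 -> inSL2 (to_M2 x).
Proof. by move/Z.eqb_eq=> H; rewrite /inSL2 to_M2_det H. Qed.

Lemma step_ok mp st : Inv mp -> check_step (gr_pow4 n um1_4) mp st -> V (gr_of (to_M2 st.1.1)).
Proof.
case: st => [[h g] y] /= HI /and4P [Hg Hy Hc Hall].
set R4 := gr_mul4 _ _ in Hc Hall.
have ER : toGR R4 = gr_mul (gr_of (to_M2 g)) (gr_mul X (gr_of (to_M2 y))).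
  by rewrite /R4 !toGR_mul toGR_pow toGR_um1.
apply: (@inV_step X Wg (toGR R4) (to_M2 h) (int_of_Z (coef4 R4 h))).
- exists [:: (1, to_M2 g, to_M2 y)]; split.
    by rewrite /= !inSL2_of.
  move=> z; rewrite /= cats0 coef_scale mul1r ER //.
- by rewrite coef4_ok.
- by case/orP: Hc => /Z.eqb_eq ->.
- move=> p /mapP [q Hq ->] /= Hne.
  case/orP: (allP Hall q Hq) => [He|Hm]; last exact: mem_ok Hm.
  by move: Hne; rewrite to_M2_eq He.
Qed.

Lemma run_ok sts : forall mp mp', Inv mp -> run (gr_pow4 n um1_4) mp sts = Some mp' -> Inv mp'.
Proof.
elim: sts => [|st sts IH] mp mp' HI /=; first by move=> [<-].
case E: (check_step _ _ _) => //; apply: IH; apply: Inv_add => //.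
exact: step_ok E.
Qed.

Lemma check_ok sts : check_all n W4 sts ->
  forall w, w \in W4 -> [/\ inSL2 (to_M2 w), V (gr_of (to_M2 (mul4 S4 w))),
     V (gr_of (to_M2 (mul4 U4 w))) & V (gr_of (to_M2 (mul4 Ui4 w)))].
Proof.
rewrite /check_all; case E: (run _ _ _) => [mp|] // Hall w Hw.
have HI := run_ok Inv_init E.
case/and4P: (allP Hall w Hw) => H1 H2 H3 H4.
by split; [exact: inSL2_of | exact: mem_ok H2 | exact: mem_ok H3 | exact: mem_ok H4].
Qed.
End Soundness.
Lemma euclid (P : M2 -> Prop) :
  P (mx22 1 0 0 1) ->
  (forall g, P g -> P (mx22 0 (-1) 1 0 *m g)) ->
  (forall g, P g -> P (mx22 1 1 0 1 *m g)) ->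
  (forall g, P g -> P (mx22 1 (-1) 0 1 *m g)) ->
  forall a b c d, a * d - b * c = 1 -> P (mx22 a b c d).
Proof.
move=> P1 PS PU PUi.
have Pnat : forall (m : nat) a b c d, P (mx22 a b c d) ->
    P (mx22 (a + m%:Z * c) (b + m%:Z * d) c d) /\ P (mx22 (a - m%:Z * c) (b - m%:Z * d) c d).
  elim=> [|m IH] a b c d H.
    by rewrite !mul0r ?oppr0 !addr0; split.
  have [H1 H2] := IH a b c d H.
  have Em : (m.+1%:Z) = m%:Z + 1 by rewrite -addn1 PoszD.
  split.
    have E : mx22 (a + m.+1%:Z * c) (b + m.+1%:Z * d) c d =
             mx22 1 1 0 1 *m mx22 (a + m%:Z * c) (b + m%:Z * d) c d.
      by rewrite mx22_mul Em; congr mx22; ring.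
    by rewrite E; apply: PU.
  have E : mx22 (a - m.+1%:Z * c) (b - m.+1%:Z * d) c d =
           mx22 1 (-1) 0 1 *m mx22 (a - m%:Z * c) (b - m%:Z * d) c d.
    by rewrite mx22_mul Em; congr mx22; ring.
  by rewrite E; apply: PUi.
have Put : forall (k : int) a b c d, P (mx22 a b c d) ->
    P (mx22 (a + k * c) (b + k * d) c d).
  move=> [m|m] a b c d H; first exact: (Pnat m a b c d H).1.
  have := (Pnat m.+1 a b c d H).2; rewrite NegzE.
  by congr P; congr mx22; ring.
have Hc0 : forall a b d, a * d = 1 -> P (mx22 a b 0 d).
  move=> a b d Had.
  have Ha : absz a = 1%N.
    by have /eqP := congr1 absz Had; rewrite abszM muln_eq1 => /andP [/eqP -> _].
  have : a = 1 \/ a = -1 by lia.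
  have Hd : forall a', a = a' -> a' * a' = 1 -> d = a'.
    move=> a' Ea' H2; rewrite Ea' in Had.
    by rewrite -[d]mul1r -H2 -mulrA Had mulr1.
  case=> Ea; rewrite (Hd _ Ea) ?Ea; try ring.
    have := Put b _ _ _ _ P1; by congr P; congr mx22; ring.
  have H2 := PS _ (PS _ P1); rewrite !mx22_mul in H2.
  have := Put (- b) _ _ _ _ H2.
  by congr P; congr mx22; ring.
suff H : forall N a b c d, leq (absz c) N -> a * d - b * c = 1 -> P (mx22 a b c d).
  by move=> a b c d; apply: (H (absz c)).
elim=> [|N IH] a b c d Hc Hdet.
  have c0 : c = 0 by lia.
  by move: Hdet; rewrite c0 mulr0 subr0; apply: Hc0.
case: (eqVneq c 0) => [c0|cn0].
  by move: Hdet; rewrite c0 mulr0 subr0; apply: Hc0.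
set q := divz a c; set r := modz a c.
have Ea : a = q * c + r by apply: divz_eq.
have r0 : 0 <= r by apply: modz_ge0.
have rc : r < `|c| by apply: ltz_mod.
have Hr : leq (absz r) N by lia.
have H'' := IH (- c) (- d) r (b - q * d) Hr.
have : P (mx22 (- c) (- d) r (b - q * d)).
  apply: H''; rewrite Ea in Hdet; rewrite -Hdet; ring.
move=> /PS /PS /PS; rewrite !mx22_mul => /(Put q).
rewrite Ea; congr P; congr mx22; ring.
Qed.
Section Final.
Variables (n : nat) (W4 : list m4) (sts : list step4).
Hypothesis Hck : check_all n W4 sts.
Hypothesis HI4 : I4 \in W4.
Local Notation X := (gr_pow n u_minus_1).
Local Notation V := (inV X (Wg W4)).

Lemma closure_gen s g : Z.eqb (det4 s) 1 ->
  (forall w4, w4 \in W4 -> V (gr_of (to_M2 (mul4 s w4)))) ->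
  V (gr_of g) -> V (gr_of (to_M2 s *m g)).
Proof.
move=> Hs HW Hg.
have -> : gr_of (to_M2 s *m g) = lmul (to_M2 s) (gr_of g) by [].
apply: inV_lmul => //; first exact: inSL2_of.
move=> w /mapP [w4 Hw4 ->].
have -> : lmul (to_M2 s) (gr_of (to_M2 w4)) = gr_of (to_M2 (mul4 s w4)).
  by rewrite to_M2_mul.
exact: HW.
Qed.

Lemma all_SL2 g : inSL2 g -> V (gr_of g).
Proof.
move=> Hg; rewrite (mx22E g).
apply: (@euclid (fun g => V (gr_of g))).
- change (V (gr_of (to_M2 I4))); apply: inV_mem; exact: map_f.
- move=> h; change (mx22 0 (-1) 1 0) with (to_M2 S4); apply: closure_gen => //.
  by move=> w4 Hw; case: (check_ok Hck Hw).
- move=> h; change (mx22 1 1 0 1) with (to_M2 U4); apply: closure_gen => //.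
  by move=> w4 Hw; case: (check_ok Hck Hw).
- move=> h; change (mx22 1 (-1) 0 1) with (to_M2 Ui4); apply: closure_gen => //.
  by move=> w4 Hw; case: (check_ok Hck Hw).
- by move: Hg; rewrite /inSL2 {1}(mx22E g) mx22_det => /eqP.
Qed.

Lemma qfg : quotient_fg X.
Proof.
exists (Wg W4); split.
  apply/allP => w /mapP [w4 Hw4 ->]; rewrite /inGR /= andbT.
  by case: (check_ok Hck Hw4).
move=> r Hr; apply: inV_list => p Hp; apply: all_SL2; exact: (allP Hr p Hp).
Qed.
End Final.

Definition mk4 (a b c d : Z) : m4 := (a, b, c, d).
Arguments mk4 (_ _ _ _)%_Z.
Definition W_1 : list m4 := [:: (mk4 (-1) (-1) 0 (-1));
  (mk4 (-1) (-1) 1 0);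
  (mk4 (-1) 0 (-1) (-1));
  (mk4 (-1) 0 0 (-1));
  (mk4 (-1) 0 1 (-1));
  (mk4 (-1) 1 (-1) 0);
  (mk4 (-1) 1 0 (-1));
  (mk4 0 (-1) 1 (-1));
  (mk4 0 (-1) 1 0);
  (mk4 0 (-1) 1 1);
  (mk4 0 1 (-1) (-1));
  (mk4 0 1 (-1) 0);
  (mk4 0 1 (-1) 1);
  (mk4 1 (-1) 0 1);
  (mk4 1 (-1) 1 0);
  (mk4 1 0 (-1) 1);
  (mk4 1 0 0 1);
  (mk4 1 0 1 1);
  (mk4 1 1 (-1) 0);
  (mk4 1 1 0 1)].
Definition St_1 : list step4 := [:: ((mk4 (-4) (-3) 3 2), (mk4 2 1 (-1) 0), (mk4 (-3) (-2) 2 1));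
  ((mk4 (-4) (-1) 1 0), (mk4 2 1 (-1) 0), (mk4 1 1 (-2) (-1)));
  ((mk4 (-4) 1 3 (-1)), (mk4 4 (-1) (-3) 1), (mk4 (-1) 0 0 (-1)));
  ((mk4 (-3) (-2) (-4) (-3)), (mk4 1 0 2 1), (mk4 (-3) (-2) 2 1));
  ((mk4 (-3) 1 (-4) 1), (mk4 1 0 2 1), (mk4 (-3) 1 2 (-1)));
  ((mk4 (-2) (-3) 1 1), (mk4 1 1 (-1) 0), (mk4 0 1 (-1) (-2)));
  ((mk4 (-2) (-1) (-3) (-2)), (mk4 1 (-1) 1 0), (mk4 (-3) (-2) (-1) (-1)));
  ((mk4 (-2) (-1) (-1) (-1)), (mk4 0 (-1) 1 0), (mk4 (-3) (-2) 2 1));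
  ((mk4 (-2) (-1) 1 0), (mk4 2 1 (-1) 0), (mk4 (-1) 0 0 (-1)));
  ((mk4 (-2) 1 (-3) 1), (mk4 1 (-1) 1 0), (mk4 (-3) 1 (-1) 0));
  ((mk4 (-2) 1 (-1) 0), (mk4 0 (-1) 1 0), (mk4 (-3) 1 2 (-1)));
  ((mk4 (-2) 1 1 (-1)), (mk4 2 1 (-1) 0), (mk4 (-1) 1 0 (-1)));
  ((mk4 (-2) 3 (-3) 4), (mk4 1 0 2 1), (mk4 (-2) 3 1 (-2)));
  ((mk4 (-1) (-4) 1 3), (mk4 2 1 (-1) 0), (mk4 (-1) (-3) 1 2));
  ((mk4 (-1) (-3) (-1) (-4)), (mk4 1 0 2 1), (mk4 (-1) (-3) 1 2));
  ((mk4 (-1) (-2) (-1) (-3)), (mk4 1 (-1) 1 0), (mk4 (-1) (-3) 0 (-1)));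
  ((mk4 (-1) (-2) 0 (-1)), (mk4 0 (-1) 1 0), (mk4 (-1) (-3) 1 2));
  ((mk4 (-1) (-2) 1 1), (mk4 3 2 (-2) (-1)), (mk4 (-2) 1 1 (-1)));
  ((mk4 (-1) (-1) 4 3), (mk4 1 1 (-2) (-1)), (mk4 (-3) (-2) 2 1));
  ((mk4 (-1) 0 4 (-1)), (mk4 1 1 (-2) (-1)), (mk4 (-3) 1 2 (-1)));
  ((mk4 (-1) 1 3 (-4)), (mk4 1 1 (-2) (-1)), (mk4 (-2) 3 1 (-2)));
  ((mk4 (-1) 2 (-2) 3), (mk4 1 (-1) 1 0), (mk4 (-2) 3 (-1) 1));
  ((mk4 (-1) 2 (-1) 1), (mk4 0 (-1) 1 0), (mk4 (-2) 3 1 (-2)));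
  ((mk4 (-1) 2 0 (-1)), (mk4 3 1 (-1) 0), (mk4 0 1 (-1) (-1)));
  ((mk4 (-1) 4 0 (-1)), (mk4 2 1 (-1) 0), (mk4 1 (-1) (-1) 2));
  ((mk4 0 (-1) 1 4), (mk4 1 1 (-2) (-1)), (mk4 (-1) (-3) 1 2));
  ((mk4 1 (-2) 0 1), (mk4 2 1 (-1) 0), (mk4 (-1) (-1) 1 0));
  ((mk4 1 (-2) 1 (-1)), (mk4 1 1 (-1) 0), (mk4 (-3) 4 2 (-3)));
  ((mk4 1 2 (-1) (-1)), (mk4 2 1 (-1) 0), (mk4 1 1 (-1) 0));
  ((mk4 1 2 0 1), (mk4 1 1 (-1) 0), (mk4 (-1) (-4) 1 3));
  ((mk4 2 (-1) (-1) 1), (mk4 3 2 (-2) (-1)), (mk4 (-1) (-2) 1 1));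
  ((mk4 2 (-1) 1 0), (mk4 1 1 (-1) 0), (mk4 (-4) 1 3 (-1)));
  ((mk4 2 1 (-1) 0), (mk4 3 1 (-1) 0), (mk4 1 0 (-1) 1));
  ((mk4 2 1 1 1), (mk4 1 1 (-1) 0), (mk4 (-4) (-3) 3 2))].
Definition W_2 : list m4 := [:: (mk4 (-1) (-1) 0 (-1));
  (mk4 (-1) (-1) 1 0);
  (mk4 (-1) 0 (-1) (-1));
  (mk4 (-1) 0 0 (-1));
  (mk4 (-1) 0 1 (-1));
  (mk4 (-1) 1 (-1) 0);
  (mk4 (-1) 1 0 (-1));
  (mk4 0 (-1) 1 (-1));
  (mk4 0 (-1) 1 0);
  (mk4 0 (-1) 1 1);
  (mk4 0 1 (-1) (-1));
  (mk4 0 1 (-1) 0);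
  (mk4 0 1 (-1) 1);
  (mk4 1 (-1) 0 1);
  (mk4 1 (-1) 1 0);
  (mk4 1 0 (-1) 1);
  (mk4 1 0 0 1);
  (mk4 1 0 1 1);
  (mk4 1 1 (-1) 0);
  (mk4 1 1 0 1)].
Definition St_2 : list step4 := [:: ((mk4 (-2) (-1) (-1) (-1)), (mk4 1 0 0 1), (mk4 0 1 (-1) (-1)));
  ((mk4 (-2) (-1) 1 0), (mk4 1 0 0 1), (mk4 (-2) (-1) 1 0));
  ((mk4 (-2) 1 (-1) 0), (mk4 1 0 0 1), (mk4 0 1 (-1) 0));
  ((mk4 (-2) 1 1 (-1)), (mk4 1 1 (-1) 0), (mk4 1 1 (-1) 0));
  ((mk4 (-1) (-2) 0 (-1)), (mk4 1 0 0 1), (mk4 (-1) 0 0 (-1)));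
  ((mk4 (-1) (-2) 1 1), (mk4 1 1 (-1) 0), (mk4 (-1) 1 0 (-1)));
  ((mk4 (-1) (-2) 2 3), (mk4 0 (-1) 1 0), (mk4 0 (-1) 1 2));
  ((mk4 (-1) (-1) 2 1), (mk4 1 1 (-1) 0), (mk4 (-2) (-1) 1 0));
  ((mk4 (-1) 0 (-2) (-1)), (mk4 0 (-1) 1 0), (mk4 (-2) (-1) 1 0));
  ((mk4 (-1) 0 2 (-1)), (mk4 1 1 (-2) (-1)), (mk4 (-1) 1 0 (-1)));
  ((mk4 (-1) 0 3 (-1)), (mk4 0 (-1) 1 0), (mk4 1 (-1) 1 0));
  ((mk4 (-1) 1 (-2) 1), (mk4 0 (-1) 1 0), (mk4 (-2) 1 1 (-1)));
  ((mk4 (-1) 2 (-2) 3), (mk4 1 0 2 1), (mk4 (-1) 2 0 (-1)));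
  ((mk4 (-1) 2 (-1) 1), (mk4 1 0 0 1), (mk4 1 0 (-1) 1));
  ((mk4 (-1) 2 0 (-1)), (mk4 0 (-1) 1 0), (mk4 (-2) 3 1 (-2)));
  ((mk4 0 1 (-1) (-2)), (mk4 1 1 (-1) 0), (mk4 1 2 (-1) (-1)));
  ((mk4 1 (-2) (-1) 3), (mk4 1 1 (-2) (-1)), (mk4 (-2) 1 1 (-1)));
  ((mk4 1 (-2) 0 1), (mk4 1 1 (-1) 0), (mk4 (-2) 1 1 (-1)));
  ((mk4 1 (-2) 1 (-1)), (mk4 0 (-1) 1 0), (mk4 1 (-1) (-1) 2));
  ((mk4 1 0 (-2) 1), (mk4 1 1 (-1) 0), (mk4 2 (-1) (-1) 1));
  ((mk4 1 1 (-2) (-1)), (mk4 1 1 (-1) 0), (mk4 2 1 (-1) 0));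
  ((mk4 1 2 (-2) (-3)), (mk4 1 1 (-1) 0), (mk4 2 3 (-1) (-1)));
  ((mk4 1 2 (-1) (-1)), (mk4 1 1 (-1) 0), (mk4 1 (-1) 0 1));
  ((mk4 1 2 0 1), (mk4 0 (-1) 1 0), (mk4 0 1 (-1) (-2)));
  ((mk4 2 (-3) (-1) 2), (mk4 1 1 (-1) 0), (mk4 (-1) 0 1 (-1)));
  ((mk4 2 (-1) (-3) 2), (mk4 1 1 (-1) 0), (mk4 3 (-2) (-1) 1));
  ((mk4 2 (-1) (-1) 1), (mk4 1 1 (-1) 0), (mk4 (-1) (-1) 1 0));
  ((mk4 2 (-1) 1 0), (mk4 0 (-1) 1 0), (mk4 1 0 (-2) 1));
  ((mk4 2 1 (-3) (-1)), (mk4 1 1 (-1) 0), (mk4 3 1 (-1) 0));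
  ((mk4 2 1 (-1) 0), (mk4 2 1 (-1) 0), (mk4 1 (-2) 0 1));
  ((mk4 2 1 1 1), (mk4 0 (-1) 1 0), (mk4 1 1 (-2) (-1)))].
Definition W_3 : list m4 := [:: (mk4 (-2) (-1) (-1) (-1));
  (mk4 (-2) (-1) 1 0);
  (mk4 (-2) 1 (-1) 0);
  (mk4 (-2) 1 1 (-1));
  (mk4 (-1) (-2) 0 (-1));
  (mk4 (-1) (-2) 1 1);
  (mk4 (-1) (-1) (-1) (-2));
  (mk4 (-1) (-1) 0 (-1));
  (mk4 (-1) (-1) 1 0);
  (mk4 (-1) (-1) 2 1);
  (mk4 (-1) 0 (-2) (-1));
  (mk4 (-1) 0 (-1) (-1));
  (mk4 (-1) 0 0 (-1));
  (mk4 (-1) 0 1 (-1));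
  (mk4 (-1) 0 2 (-1));
  (mk4 (-1) 1 (-2) 1);
  (mk4 (-1) 1 (-1) 0);
  (mk4 (-1) 1 0 (-1));
  (mk4 (-1) 1 1 (-2));
  (mk4 (-1) 2 (-1) 1);
  (mk4 (-1) 2 0 (-1));
  (mk4 0 (-1) 1 (-2));
  (mk4 0 (-1) 1 (-1));
  (mk4 0 (-1) 1 0);
  (mk4 0 (-1) 1 1);
  (mk4 0 (-1) 1 2);
  (mk4 0 1 (-1) (-2));
  (mk4 0 1 (-1) (-1));
  (mk4 0 1 (-1) 0);
  (mk4 0 1 (-1) 1);
  (mk4 0 1 (-1) 2);
  (mk4 1 (-2) 0 1);
  (mk4 1 (-2) 1 (-1));
  (mk4 1 (-1) (-1) 2);
  (mk4 1 (-1) 0 1);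
  (mk4 1 (-1) 1 0);
  (mk4 1 (-1) 2 (-1));
  (mk4 1 0 (-2) 1);
  (mk4 1 0 (-1) 1);
  (mk4 1 0 0 1);
  (mk4 1 0 1 1);
  (mk4 1 0 2 1);
  (mk4 1 1 (-2) (-1));
  (mk4 1 1 (-1) 0);
  (mk4 1 1 0 1);
  (mk4 1 1 1 2);
  (mk4 1 2 (-1) (-1));
  (mk4 1 2 0 1);
  (mk4 2 (-1) (-1) 1);
  (mk4 2 (-1) 1 0);
  (mk4 2 1 (-1) 0);
  (mk4 2 1 1 1)].
Definition St_3 : list step4 := [:: ((mk4 (-3) (-2) (-1) (-1)), (mk4 1 0 0 1), (mk4 0 1 (-1) (-1)));
  ((mk4 (-3) (-2) 2 1), (mk4 1 1 (-1) 0), (mk4 1 2 (-1) (-1)));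
  ((mk4 (-3) (-1) (-2) (-1)), (mk4 1 (-1) 1 0), (mk4 (-2) (-1) 1 0));
  ((mk4 (-3) (-1) 1 0), (mk4 1 0 0 1), (mk4 (-3) (-1) 1 0));
  ((mk4 (-3) 1 (-1) 0), (mk4 1 0 0 1), (mk4 0 1 (-1) 0));
  ((mk4 (-3) 1 2 (-1)), (mk4 1 1 (-1) 0), (mk4 1 1 (-1) 0));
  ((mk4 (-3) 2 (-2) 1), (mk4 1 (-1) 1 0), (mk4 (-2) 1 1 (-1)));
  ((mk4 (-3) 2 1 (-1)), (mk4 1 0 0 1), (mk4 (-3) 2 1 (-1)));
  ((mk4 (-2) (-3) (-1) (-2)), (mk4 1 (-1) 1 0), (mk4 (-1) (-2) 1 1));
  ((mk4 (-2) (-3) 1 1), (mk4 1 0 0 1), (mk4 (-2) (-3) 1 1));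
  ((mk4 (-2) 3 (-1) 1), (mk4 1 0 0 1), (mk4 1 0 (-1) 1));
  ((mk4 (-2) 3 1 (-2)), (mk4 2 1 (-1) 0), (mk4 (-1) 2 0 (-1)));
  ((mk4 (-1) (-3) 0 (-1)), (mk4 1 0 0 1), (mk4 (-1) 0 0 (-1)));
  ((mk4 (-1) (-3) 1 2), (mk4 1 1 (-1) 0), (mk4 (-1) 1 0 (-1)));
  ((mk4 (-1) 3 (-1) 2), (mk4 1 (-1) 1 0), (mk4 (-1) 2 0 (-1)));
  ((mk4 (-1) 3 0 (-1)), (mk4 1 0 0 1), (mk4 (-1) 3 0 (-1)));
  ((mk4 1 (-3) 0 1), (mk4 1 0 0 1), (mk4 1 (-3) 0 1));
  ((mk4 1 (-3) 1 (-2)), (mk4 1 0 0 1), (mk4 (-2) 3 1 (-2)));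
  ((mk4 1 3 (-1) (-2)), (mk4 1 1 (-1) 0), (mk4 1 (-1) 0 1));
  ((mk4 1 3 0 1), (mk4 1 0 0 1), (mk4 1 0 0 1));
  ((mk4 2 (-3) (-1) 2), (mk4 1 1 (-1) 0), (mk4 (-2) 1 1 (-1)));
  ((mk4 2 (-3) 1 (-1)), (mk4 1 0 0 1), (mk4 (-1) 0 1 (-1)));
  ((mk4 2 3 (-1) (-1)), (mk4 2 1 (-1) 0), (mk4 1 (-2) 0 1));
  ((mk4 2 3 1 2), (mk4 1 0 0 1), (mk4 (-1) (-3) 1 2));
  ((mk4 3 (-2) (-1) 1), (mk4 2 1 (-1) 0), (mk4 (-2) (-1) 1 0));
  ((mk4 3 (-2) 2 (-1)), (mk4 1 0 0 1), (mk4 (-3) 1 2 (-1)));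
  ((mk4 3 (-1) (-2) 1), (mk4 1 1 (-1) 0), (mk4 (-1) (-1) 1 0));
  ((mk4 3 (-1) 1 0), (mk4 1 0 0 1), (mk4 0 (-1) 1 0));
  ((mk4 3 1 (-1) 0), (mk4 1 0 0 1), (mk4 3 1 (-1) 0));
  ((mk4 3 1 2 1), (mk4 1 0 0 1), (mk4 (-3) (-2) 2 1));
  ((mk4 3 2 (-2) (-1)), (mk4 2 1 (-1) 0), (mk4 2 1 (-1) 0));
  ((mk4 3 2 1 1), (mk4 1 0 0 1), (mk4 0 (-1) 1 1))].
Definition W_4 : list m4 := [:: (mk4 (-3) (-2) (-1) (-1));
  (mk4 (-3) (-2) 2 1);
  (mk4 (-3) (-1) (-2) (-1));
  (mk4 (-3) (-1) 1 0);
  (mk4 (-3) 1 (-1) 0);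
  (mk4 (-3) 1 2 (-1));
  (mk4 (-3) 2 (-2) 1);
  (mk4 (-3) 2 1 (-1));
  (mk4 (-2) (-3) (-1) (-2));
  (mk4 (-2) (-3) 1 1);
  (mk4 (-2) (-1) (-3) (-2));
  (mk4 (-2) (-1) (-1) (-1));
  (mk4 (-2) (-1) 1 0);
  (mk4 (-2) (-1) 3 1);
  (mk4 (-2) 1 (-3) 1);
  (mk4 (-2) 1 (-1) 0);
  (mk4 (-2) 1 1 (-1));
  (mk4 (-2) 1 3 (-2));
  (mk4 (-2) 3 (-1) 1);
  (mk4 (-2) 3 1 (-2));
  (mk4 (-1) (-3) 0 (-1));
  (mk4 (-1) (-3) 1 2);
  (mk4 (-1) (-2) (-1) (-3));
  (mk4 (-1) (-2) 0 (-1));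
  (mk4 (-1) (-2) 1 1);
  (mk4 (-1) (-2) 2 3);
  (mk4 (-1) (-1) (-2) (-3));
  (mk4 (-1) (-1) (-1) (-2));
  (mk4 (-1) (-1) 0 (-1));
  (mk4 (-1) (-1) 1 0);
  (mk4 (-1) (-1) 2 1);
  (mk4 (-1) (-1) 3 2);
  (mk4 (-1) 0 (-3) (-1));
  (mk4 (-1) 0 (-2) (-1));
  (mk4 (-1) 0 (-1) (-1));
  (mk4 (-1) 0 0 (-1));
  (mk4 (-1) 0 1 (-1));
  (mk4 (-1) 0 2 (-1));
  (mk4 (-1) 0 3 (-1));
  (mk4 (-1) 1 (-3) 2);
  (mk4 (-1) 1 (-2) 1);
  (mk4 (-1) 1 (-1) 0);
  (mk4 (-1) 1 0 (-1));
  (mk4 (-1) 1 1 (-2));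
  (mk4 (-1) 1 2 (-3));
  (mk4 (-1) 2 (-2) 3);
  (mk4 (-1) 2 (-1) 1);
  (mk4 (-1) 2 0 (-1));
  (mk4 (-1) 2 1 (-3));
  (mk4 (-1) 3 (-1) 2);
  (mk4 (-1) 3 0 (-1));
  (mk4 0 (-1) 1 (-3));
  (mk4 0 (-1) 1 (-2));
  (mk4 0 (-1) 1 (-1));
  (mk4 0 (-1) 1 0);
  (mk4 0 (-1) 1 1);
  (mk4 0 (-1) 1 2);
  (mk4 0 (-1) 1 3);
  (mk4 0 1 (-1) (-3));
  (mk4 0 1 (-1) (-2));
  (mk4 0 1 (-1) (-1));
  (mk4 0 1 (-1) 0);
  (mk4 0 1 (-1) 1);
  (mk4 0 1 (-1) 2);
  (mk4 0 1 (-1) 3);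
  (mk4 1 (-3) 0 1);
  (mk4 1 (-3) 1 (-2));
  (mk4 1 (-2) (-1) 3);
  (mk4 1 (-2) 0 1);
  (mk4 1 (-2) 1 (-1));
  (mk4 1 (-2) 2 (-3));
  (mk4 1 (-1) (-2) 3);
  (mk4 1 (-1) (-1) 2);
  (mk4 1 (-1) 0 1);
  (mk4 1 (-1) 1 0);
  (mk4 1 (-1) 2 (-1));
  (mk4 1 (-1) 3 (-2));
  (mk4 1 0 (-3) 1);
  (mk4 1 0 (-2) 1);
  (mk4 1 0 (-1) 1);
  (mk4 1 0 0 1);
  (mk4 1 0 1 1);
  (mk4 1 0 2 1);
  (mk4 1 0 3 1);
  (mk4 1 1 (-3) (-2));
  (mk4 1 1 (-2) (-1));
  (mk4 1 1 (-1) 0);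
  (mk4 1 1 0 1);
  (mk4 1 1 1 2);
  (mk4 1 1 2 3);
  (mk4 1 2 (-2) (-3));
  (mk4 1 2 (-1) (-1));
  (mk4 1 2 0 1);
  (mk4 1 2 1 3);
  (mk4 1 3 (-1) (-2));
  (mk4 1 3 0 1);
  (mk4 2 (-3) (-1) 2);
  (mk4 2 (-3) 1 (-1));
  (mk4 2 (-1) (-3) 2);
  (mk4 2 (-1) (-1) 1);
  (mk4 2 (-1) 1 0);
  (mk4 2 (-1) 3 (-1));
  (mk4 2 1 (-3) (-1));
  (mk4 2 1 (-1) 0);
  (mk4 2 1 1 1);
  (mk4 2 1 3 2);
  (mk4 2 3 (-1) (-1));
  (mk4 2 3 1 2);
  (mk4 3 (-2) (-1) 1);
  (mk4 3 (-2) 2 (-1));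
  (mk4 3 (-1) (-2) 1);
  (mk4 3 (-1) 1 0);
  (mk4 3 1 (-1) 0);
  (mk4 3 1 2 1);
  (mk4 3 2 (-2) (-1));
  (mk4 3 2 1 1)].
Definition St_4 : list step4 := [:: ((mk4 (-5) (-3) 2 1), (mk4 1 0 0 1), (mk4 (-5) (-3) 2 1));
  ((mk4 (-5) (-2) (-2) (-1)), (mk4 1 0 0 1), (mk4 3 2 (-2) (-1)));
  ((mk4 (-5) (-2) 3 1), (mk4 2 1 (-1) 0), (mk4 (-3) (-1) 1 0));
  ((mk4 (-5) 2 (-3) 1), (mk4 2 (-1) 1 0), (mk4 1 1 (-1) 0));
  ((mk4 (-5) 2 2 (-1)), (mk4 2 1 (-1) 0), (mk4 2 1 (-1) 0));
  ((mk4 (-5) 3 (-2) 1), (mk4 1 0 0 1), (mk4 3 (-1) (-2) 1));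
  ((mk4 (-4) (-3) (-1) (-1)), (mk4 1 0 0 1), (mk4 0 1 (-1) (-1)));
  ((mk4 (-4) (-3) 3 2), (mk4 1 1 (-1) 0), (mk4 1 2 (-1) (-1)));
  ((mk4 (-4) (-1) (-3) (-1)), (mk4 1 (-1) 1 0), (mk4 (-3) (-1) 1 0));
  ((mk4 (-4) (-1) 1 0), (mk4 1 0 0 1), (mk4 (-4) (-1) 1 0));
  ((mk4 (-4) 1 (-1) 0), (mk4 1 0 0 1), (mk4 0 1 (-1) 0));
  ((mk4 (-4) 1 3 (-1)), (mk4 1 1 (-1) 0), (mk4 1 1 (-1) 0));
  ((mk4 (-4) 3 (-3) 2), (mk4 1 (-1) 1 0), (mk4 (-3) 2 1 (-1)));
  ((mk4 (-4) 3 1 (-1)), (mk4 1 0 0 1), (mk4 (-4) 3 1 (-1)));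
  ((mk4 (-3) (-5) (-1) (-2)), (mk4 1 0 0 1), (mk4 1 3 (-1) (-2)));
  ((mk4 (-3) (-4) (-2) (-3)), (mk4 1 (-1) 1 0), (mk4 (-2) (-3) 1 1));
  ((mk4 (-3) (-4) 1 1), (mk4 1 0 0 1), (mk4 (-3) (-4) 1 1));
  ((mk4 (-3) (-1) (-5) (-2)), (mk4 1 0 2 1), (mk4 (-3) (-1) 1 0));
  ((mk4 (-3) 4 (-1) 1), (mk4 1 0 0 1), (mk4 1 0 (-1) 1));
  ((mk4 (-3) 4 2 (-3)), (mk4 1 1 (-1) 0), (mk4 2 (-1) (-1) 1));
  ((mk4 (-3) 5 1 (-2)), (mk4 1 0 0 1), (mk4 (-3) 5 1 (-2)));
  ((mk4 (-3) 8 1 (-3)), (mk4 3 1 (-1) 0), (mk4 (-1) 3 0 (-1)));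
  ((mk4 (-2) (-5) (-1) (-3)), (mk4 2 (-1) 1 0), (mk4 (-1) 1 0 (-1)));
  ((mk4 (-2) (-5) 1 2), (mk4 2 1 (-1) 0), (mk4 (-1) 2 0 (-1)));
  ((mk4 (-2) 5 (-1) 2), (mk4 1 0 0 1), (mk4 2 (-3) (-1) 2));
  ((mk4 (-2) 5 1 (-3)), (mk4 2 1 (-1) 0), (mk4 (-1) 3 0 (-1)));
  ((mk4 (-1) (-4) 0 (-1)), (mk4 1 0 0 1), (mk4 (-1) 0 0 (-1)));
  ((mk4 (-1) (-4) 1 3), (mk4 1 1 (-1) 0), (mk4 (-1) 1 0 (-1)));
  ((mk4 (-1) 3 (-2) 5), (mk4 1 0 2 1), (mk4 (-1) 3 0 (-1)));
  ((mk4 (-1) 4 (-1) 3), (mk4 1 (-1) 1 0), (mk4 (-1) 3 0 (-1)));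
  ((mk4 (-1) 4 0 (-1)), (mk4 1 0 0 1), (mk4 (-1) 4 0 (-1)));
  ((mk4 1 (-4) 0 1), (mk4 1 0 0 1), (mk4 1 (-4) 0 1));
  ((mk4 1 (-4) 1 (-3)), (mk4 1 0 0 1), (mk4 (-3) 8 1 (-3)));
  ((mk4 1 4 (-1) (-3)), (mk4 1 1 (-1) 0), (mk4 1 (-1) 0 1));
  ((mk4 1 4 0 1), (mk4 1 0 0 1), (mk4 1 0 0 1));
  ((mk4 2 (-5) (-1) 3), (mk4 2 1 (-1) 0), (mk4 1 (-3) 0 1));
  ((mk4 2 (-5) 1 (-2)), (mk4 1 0 0 1), (mk4 (-2) 3 1 (-2)));
  ((mk4 2 5 (-1) (-2)), (mk4 2 1 (-1) 0), (mk4 1 (-2) 0 1));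
  ((mk4 2 5 1 3), (mk4 2 (-1) 1 0), (mk4 1 (-1) 0 1));
  ((mk4 3 (-8) (-1) 3), (mk4 1 0 0 1), (mk4 3 (-8) (-1) 3));
  ((mk4 3 (-7) (-2) 5), (mk4 1 1 (-1) 0), (mk4 (-2) 3 1 (-2)));
  ((mk4 3 (-5) (-1) 2), (mk4 1 0 0 1), (mk4 3 (-5) (-1) 2));
  ((mk4 3 (-5) 2 (-3)), (mk4 1 (-1) 1 0), (mk4 2 (-3) (-1) 2));
  ((mk4 3 (-4) (-2) 3), (mk4 1 1 (-1) 0), (mk4 (-2) 1 1 (-1)));
  ((mk4 3 (-4) 1 (-1)), (mk4 1 0 0 1), (mk4 (-1) 0 1 (-1)));
  ((mk4 3 4 (-1) (-1)), (mk4 3 1 (-1) 0), (mk4 1 (-3) 0 1));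
  ((mk4 3 4 2 3), (mk4 1 (-1) 1 0), (mk4 2 3 (-1) (-1)));
  ((mk4 3 5 (-2) (-3)), (mk4 3 2 (-2) (-1)), (mk4 1 (-3) 0 1));
  ((mk4 3 5 1 2), (mk4 1 0 0 1), (mk4 (-1) (-3) 1 2));
  ((mk4 4 (-3) (-1) 1), (mk4 1 0 0 1), (mk4 4 (-3) (-1) 1));
  ((mk4 4 (-3) 3 (-2)), (mk4 1 (-1) 1 0), (mk4 3 (-2) (-1) 1));
  ((mk4 4 (-1) (-3) 1), (mk4 1 1 (-1) 0), (mk4 (-1) (-1) 1 0));
  ((mk4 4 (-1) 1 0), (mk4 1 0 0 1), (mk4 0 (-1) 1 0));
  ((mk4 4 1 (-1) 0), (mk4 1 0 0 1), (mk4 4 1 (-1) 0));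
  ((mk4 4 1 3 1), (mk4 1 (-1) 1 0), (mk4 3 1 (-1) 0));
  ((mk4 4 3 (-3) (-2)), (mk4 1 1 (-1) 0), (mk4 (-1) (-2) 1 1));
  ((mk4 4 3 1 1), (mk4 1 0 0 1), (mk4 0 (-1) 1 1));
  ((mk4 5 (-7) (-2) 3), (mk4 2 1 (-1) 0), (mk4 (-2) 1 1 (-1)));
  ((mk4 5 (-3) (-3) 2), (mk4 2 1 (-1) 0), (mk4 3 (-2) (-1) 1));
  ((mk4 5 (-3) 2 (-1)), (mk4 1 0 0 1), (mk4 (-3) 1 2 (-1)));
  ((mk4 5 (-2) (-2) 1), (mk4 2 1 (-1) 0), (mk4 (-2) (-1) 1 0));
  ((mk4 5 (-2) 3 (-1)), (mk4 2 (-1) 1 0), (mk4 (-1) (-1) 1 0));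
  ((mk4 5 2 (-3) (-1)), (mk4 2 1 (-1) 0), (mk4 3 1 (-1) 0));
  ((mk4 5 2 2 1), (mk4 1 0 0 1), (mk4 (-3) (-2) 2 1));
  ((mk4 5 3 (-2) (-1)), (mk4 1 0 0 1), (mk4 5 3 (-2) (-1)));
  ((mk4 5 3 3 2), (mk4 1 (-1) 1 0), (mk4 3 2 (-2) (-1)));
  ((mk4 7 3 (-5) (-2)), (mk4 1 1 (-1) 0), (mk4 (-3) (-2) 2 1));
  ((mk4 7 5 (-3) (-2)), (mk4 2 1 (-1) 0), (mk4 (-1) (-2) 1 1));
  ((mk4 (-5) (-3) (-3) (-2)), (mk4 1 0 0 1), (mk4 7 5 (-3) (-2)));
  ((mk4 (-5) 3 3 (-2)), (mk4 3 2 (-2) (-1)), (mk4 3 1 (-1) 0));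
  ((mk4 (-3) (-5) 2 3), (mk4 2 1 (-1) 0), (mk4 (-2) (-3) 1 1));
  ((mk4 (-3) 5 (-2) 3), (mk4 1 0 0 1), (mk4 5 (-7) (-2) 3))].
Definition W_5 : list m4 := [:: (mk4 (-8) (-7) (-1) (-1));
  (mk4 (-8) (-7) 7 6);
  (mk4 (-8) (-5) (-3) (-2));
  (mk4 (-8) (-5) 5 3);
  (mk4 (-8) (-3) (-5) (-2));
  (mk4 (-8) (-3) 3 1);
  (mk4 (-8) (-1) (-7) (-1));
  (mk4 (-8) (-1) 1 0);
  (mk4 (-8) 1 (-1) 0);
  (mk4 (-8) 1 7 (-1));
  (mk4 (-8) 3 (-3) 1);
  (mk4 (-8) 3 5 (-2));
  (mk4 (-8) 5 (-5) 3);
  (mk4 (-8) 5 3 (-2));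
  (mk4 (-8) 7 (-7) 6);
  (mk4 (-8) 7 1 (-1));
  (mk4 (-7) (-8) (-6) (-7));
  (mk4 (-7) (-8) 1 1);
  (mk4 (-7) (-6) (-8) (-7));
  (mk4 (-7) (-6) (-1) (-1));
  (mk4 (-7) (-6) 6 5);
  (mk4 (-7) (-5) (-4) (-3));
  (mk4 (-7) (-5) 3 2);
  (mk4 (-7) (-4) (-5) (-3));
  (mk4 (-7) (-4) 2 1);
  (mk4 (-7) (-3) (-2) (-1));
  (mk4 (-7) (-3) 5 2);
  (mk4 (-7) (-2) (-3) (-1));
  (mk4 (-7) (-2) 4 1);
  (mk4 (-7) (-1) (-6) (-1));
  (mk4 (-7) (-1) 1 0);
  (mk4 (-7) (-1) 8 1);
  (mk4 (-7) 1 (-8) 1);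
  (mk4 (-7) 1 (-1) 0);
  (mk4 (-7) 1 6 (-1));
  (mk4 (-7) 2 (-4) 1);
  (mk4 (-7) 2 3 (-1));
  (mk4 (-7) 3 (-5) 2);
  (mk4 (-7) 3 2 (-1));
  (mk4 (-7) 4 (-2) 1);
  (mk4 (-7) 4 5 (-3));
  (mk4 (-7) 5 (-3) 2);
  (mk4 (-7) 5 4 (-3));
  (mk4 (-7) 6 (-6) 5);
  (mk4 (-7) 6 1 (-1));
  (mk4 (-7) 6 8 (-7));
  (mk4 (-7) 8 (-1) 1);
  (mk4 (-7) 8 6 (-7));
  (mk4 (-6) (-7) (-5) (-6));
  (mk4 (-6) (-7) 1 1);
  (mk4 (-6) (-7) 7 8);
  (mk4 (-6) (-5) (-7) (-6));
  (mk4 (-6) (-5) (-1) (-1));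
  (mk4 (-6) (-5) 5 4);
  (mk4 (-6) (-1) (-5) (-1));
  (mk4 (-6) (-1) 1 0);
  (mk4 (-6) (-1) 7 1);
  (mk4 (-6) 1 (-7) 1);
  (mk4 (-6) 1 (-1) 0);
  (mk4 (-6) 1 5 (-1));
  (mk4 (-6) 5 (-5) 4);
  (mk4 (-6) 5 1 (-1));
  (mk4 (-6) 5 7 (-6));
  (mk4 (-6) 7 (-7) 8);
  (mk4 (-6) 7 (-1) 1);
  (mk4 (-6) 7 5 (-6));
  (mk4 (-5) (-8) (-3) (-5));
  (mk4 (-5) (-8) 2 3);
  (mk4 (-5) (-7) (-2) (-3));
  (mk4 (-5) (-7) 3 4);
  (mk4 (-5) (-6) (-4) (-5));
  (mk4 (-5) (-6) 1 1);
  (mk4 (-5) (-6) 6 7);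
  (mk4 (-5) (-4) (-6) (-5));
  (mk4 (-5) (-4) (-1) (-1));
  (mk4 (-5) (-4) 4 3);
  (mk4 (-5) (-3) (-8) (-5));
  (mk4 (-5) (-3) (-3) (-2));
  (mk4 (-5) (-3) 2 1);
  (mk4 (-5) (-3) 7 4);
  (mk4 (-5) (-2) (-7) (-3));
  (mk4 (-5) (-2) (-2) (-1));
  (mk4 (-5) (-2) 3 1);
  (mk4 (-5) (-2) 8 3);
  (mk4 (-5) (-1) (-4) (-1));
  (mk4 (-5) (-1) 1 0);
  (mk4 (-5) (-1) 6 1);
  (mk4 (-5) 1 (-6) 1);
  (mk4 (-5) 1 (-1) 0);
  (mk4 (-5) 1 4 (-1));
  (mk4 (-5) 2 (-8) 3);
  (mk4 (-5) 2 (-3) 1);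
  (mk4 (-5) 2 2 (-1));
  (mk4 (-5) 2 7 (-3));
  (mk4 (-5) 3 (-7) 4);
  (mk4 (-5) 3 (-2) 1);
  (mk4 (-5) 3 3 (-2));
  (mk4 (-5) 3 8 (-5));
  (mk4 (-5) 4 (-4) 3);
  (mk4 (-5) 4 1 (-1));
  (mk4 (-5) 4 6 (-5));
  (mk4 (-5) 6 (-6) 7);
  (mk4 (-5) 6 (-1) 1);
  (mk4 (-5) 6 4 (-5));
  (mk4 (-5) 7 (-3) 4);
  (mk4 (-5) 7 2 (-3));
  (mk4 (-5) 8 (-2) 3);
  (mk4 (-5) 8 3 (-5));
  (mk4 (-4) (-7) (-1) (-2));
  (mk4 (-4) (-7) 3 5);
  (mk4 (-4) (-5) (-3) (-4));
  (mk4 (-4) (-5) 1 1);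
  (mk4 (-4) (-5) 5 6);
  (mk4 (-4) (-3) (-5) (-4));
  (mk4 (-4) (-3) (-1) (-1));
  (mk4 (-4) (-3) 3 2);
  (mk4 (-4) (-3) 7 5);
  (mk4 (-4) (-1) (-7) (-2));
  (mk4 (-4) (-1) (-3) (-1));
  (mk4 (-4) (-1) 1 0);
  (mk4 (-4) (-1) 5 1);
  (mk4 (-4) 1 (-5) 1);
  (mk4 (-4) 1 (-1) 0);
  (mk4 (-4) 1 3 (-1));
  (mk4 (-4) 1 7 (-2));
  (mk4 (-4) 3 (-7) 5);
  (mk4 (-4) 3 (-3) 2);
  (mk4 (-4) 3 1 (-1));
  (mk4 (-4) 3 5 (-4));
  (mk4 (-4) 5 (-5) 6);
  (mk4 (-4) 5 (-1) 1);
  (mk4 (-4) 5 3 (-4));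
  (mk4 (-4) 7 (-3) 5);
  (mk4 (-4) 7 1 (-2));
  (mk4 (-3) (-8) (-1) (-3));
  (mk4 (-3) (-8) 2 5);
  (mk4 (-3) (-7) (-2) (-5));
  (mk4 (-3) (-7) 1 2);
  (mk4 (-3) (-5) (-4) (-7));
  (mk4 (-3) (-5) (-1) (-2));
  (mk4 (-3) (-5) 2 3);
  (mk4 (-3) (-5) 5 8);
  (mk4 (-3) (-4) (-5) (-7));
  (mk4 (-3) (-4) (-2) (-3));
  (mk4 (-3) (-4) 1 1);
  (mk4 (-3) (-4) 4 5);
  (mk4 (-3) (-2) (-7) (-5));
  (mk4 (-3) (-2) (-4) (-3));
  (mk4 (-3) (-2) (-1) (-1));
  (mk4 (-3) (-2) 2 1);
  (mk4 (-3) (-2) 5 3);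
  (mk4 (-3) (-2) 8 5);
  (mk4 (-3) (-1) (-8) (-3));
  (mk4 (-3) (-1) (-5) (-2));
  (mk4 (-3) (-1) (-2) (-1));
  (mk4 (-3) (-1) 1 0);
  (mk4 (-3) (-1) 4 1);
  (mk4 (-3) (-1) 7 2);
  (mk4 (-3) 1 (-7) 2);
  (mk4 (-3) 1 (-4) 1);
  (mk4 (-3) 1 (-1) 0);
  (mk4 (-3) 1 2 (-1));
  (mk4 (-3) 1 5 (-2));
  (mk4 (-3) 1 8 (-3));
  (mk4 (-3) 2 (-8) 5);
  (mk4 (-3) 2 (-5) 3);
  (mk4 (-3) 2 (-2) 1);
  (mk4 (-3) 2 1 (-1));
  (mk4 (-3) 2 4 (-3));
  (mk4 (-3) 2 7 (-5));
  (mk4 (-3) 4 (-4) 5);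
  (mk4 (-3) 4 (-1) 1);
  (mk4 (-3) 4 2 (-3));
  (mk4 (-3) 4 5 (-7));
  (mk4 (-3) 5 (-5) 8);
  (mk4 (-3) 5 (-2) 3);
  (mk4 (-3) 5 1 (-2));
  (mk4 (-3) 5 4 (-7));
  (mk4 (-3) 7 (-1) 2);
  (mk4 (-3) 7 2 (-5));
  (mk4 (-3) 8 (-2) 5);
  (mk4 (-3) 8 1 (-3));
  (mk4 (-2) (-7) (-1) (-4));
  (mk4 (-2) (-7) 1 3);
  (mk4 (-2) (-5) (-3) (-8));
  (mk4 (-2) (-5) (-1) (-3));
  (mk4 (-2) (-5) 1 2);
  (mk4 (-2) (-5) 3 7);
  (mk4 (-2) (-3) (-5) (-8));
  (mk4 (-2) (-3) (-3) (-5));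
  (mk4 (-2) (-3) (-1) (-2));
  (mk4 (-2) (-3) 1 1);
  (mk4 (-2) (-3) 3 4);
  (mk4 (-2) (-3) 5 7);
  (mk4 (-2) (-1) (-7) (-4));
  (mk4 (-2) (-1) (-5) (-3));
  (mk4 (-2) (-1) (-3) (-2));
  (mk4 (-2) (-1) (-1) (-1));
  (mk4 (-2) (-1) 1 0);
  (mk4 (-2) (-1) 3 1);
  (mk4 (-2) (-1) 5 2);
  (mk4 (-2) (-1) 7 3);
  (mk4 (-2) 1 (-7) 3);
  (mk4 (-2) 1 (-5) 2);
  (mk4 (-2) 1 (-3) 1);
  (mk4 (-2) 1 (-1) 0);
  (mk4 (-2) 1 1 (-1));
  (mk4 (-2) 1 3 (-2));
  (mk4 (-2) 1 5 (-3));
  (mk4 (-2) 1 7 (-4));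
  (mk4 (-2) 3 (-5) 7);
  (mk4 (-2) 3 (-3) 4);
  (mk4 (-2) 3 (-1) 1);
  (mk4 (-2) 3 1 (-2));
  (mk4 (-2) 3 3 (-5));
  (mk4 (-2) 3 5 (-8));
  (mk4 (-2) 5 (-3) 7);
  (mk4 (-2) 5 (-1) 2);
  (mk4 (-2) 5 1 (-3));
  (mk4 (-2) 5 3 (-8));
  (mk4 (-2) 7 (-1) 3);
  (mk4 (-2) 7 1 (-4));
  (mk4 (-1) (-8) 0 (-1));
  (mk4 (-1) (-8) 1 7);
  (mk4 (-1) (-7) (-1) (-8));
  (mk4 (-1) (-7) 0 (-1));
  (mk4 (-1) (-7) 1 6);
  (mk4 (-1) (-6) (-1) (-7));
  (mk4 (-1) (-6) 0 (-1));
  (mk4 (-1) (-6) 1 5);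
  (mk4 (-1) (-5) (-1) (-6));
  (mk4 (-1) (-5) 0 (-1));
  (mk4 (-1) (-5) 1 4);
  (mk4 (-1) (-4) (-1) (-5));
  (mk4 (-1) (-4) 0 (-1));
  (mk4 (-1) (-4) 1 3);
  (mk4 (-1) (-4) 2 7);
  (mk4 (-1) (-3) (-2) (-7));
  (mk4 (-1) (-3) (-1) (-4));
  (mk4 (-1) (-3) 0 (-1));
  (mk4 (-1) (-3) 1 2);
  (mk4 (-1) (-3) 2 5);
  (mk4 (-1) (-3) 3 8);
  (mk4 (-1) (-2) (-3) (-7));
  (mk4 (-1) (-2) (-2) (-5));
  (mk4 (-1) (-2) (-1) (-3));
  (mk4 (-1) (-2) 0 (-1));
  (mk4 (-1) (-2) 1 1);
  (mk4 (-1) (-2) 2 3);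
  (mk4 (-1) (-2) 3 5);
  (mk4 (-1) (-2) 4 7);
  (mk4 (-1) (-1) (-7) (-8));
  (mk4 (-1) (-1) (-6) (-7));
  (mk4 (-1) (-1) (-5) (-6));
  (mk4 (-1) (-1) (-4) (-5));
  (mk4 (-1) (-1) (-3) (-4));
  (mk4 (-1) (-1) (-2) (-3));
  (mk4 (-1) (-1) (-1) (-2));
  (mk4 (-1) (-1) 0 (-1));
  (mk4 (-1) (-1) 1 0);
  (mk4 (-1) (-1) 2 1);
  (mk4 (-1) (-1) 3 2);
  (mk4 (-1) (-1) 4 3);
  (mk4 (-1) (-1) 5 4);
  (mk4 (-1) (-1) 6 5);
  (mk4 (-1) (-1) 7 6);
  (mk4 (-1) (-1) 8 7);
  (mk4 (-1) 0 (-8) (-1));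
  (mk4 (-1) 0 (-7) (-1));
  (mk4 (-1) 0 (-6) (-1));
  (mk4 (-1) 0 (-5) (-1));
  (mk4 (-1) 0 (-4) (-1));
  (mk4 (-1) 0 (-3) (-1));
  (mk4 (-1) 0 (-2) (-1));
  (mk4 (-1) 0 (-1) (-1));
  (mk4 (-1) 0 0 (-1));
  (mk4 (-1) 0 1 (-1));
  (mk4 (-1) 0 2 (-1));
  (mk4 (-1) 0 3 (-1));
  (mk4 (-1) 0 4 (-1));
  (mk4 (-1) 0 5 (-1));
  (mk4 (-1) 0 6 (-1));
  (mk4 (-1) 0 7 (-1));
  (mk4 (-1) 0 8 (-1));
  (mk4 (-1) 1 (-8) 7);
  (mk4 (-1) 1 (-7) 6);
  (mk4 (-1) 1 (-6) 5);
  (mk4 (-1) 1 (-5) 4);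
  (mk4 (-1) 1 (-4) 3);
  (mk4 (-1) 1 (-3) 2);
  (mk4 (-1) 1 (-2) 1);
  (mk4 (-1) 1 (-1) 0);
  (mk4 (-1) 1 0 (-1));
  (mk4 (-1) 1 1 (-2));
  (mk4 (-1) 1 2 (-3));
  (mk4 (-1) 1 3 (-4));
  (mk4 (-1) 1 4 (-5));
  (mk4 (-1) 1 5 (-6));
  (mk4 (-1) 1 6 (-7));
  (mk4 (-1) 1 7 (-8));
  (mk4 (-1) 2 (-4) 7);
  (mk4 (-1) 2 (-3) 5);
  (mk4 (-1) 2 (-2) 3);
  (mk4 (-1) 2 (-1) 1);
  (mk4 (-1) 2 0 (-1));
  (mk4 (-1) 2 1 (-3));
  (mk4 (-1) 2 2 (-5));
  (mk4 (-1) 2 3 (-7));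
  (mk4 (-1) 3 (-3) 8);
  (mk4 (-1) 3 (-2) 5);
  (mk4 (-1) 3 (-1) 2);
  (mk4 (-1) 3 0 (-1));
  (mk4 (-1) 3 1 (-4));
  (mk4 (-1) 3 2 (-7));
  (mk4 (-1) 4 (-2) 7);
  (mk4 (-1) 4 (-1) 3);
  (mk4 (-1) 4 0 (-1));
  (mk4 (-1) 4 1 (-5));
  (mk4 (-1) 5 (-1) 4);
  (mk4 (-1) 5 0 (-1));
  (mk4 (-1) 5 1 (-6));
  (mk4 (-1) 6 (-1) 5);
  (mk4 (-1) 6 0 (-1));
  (mk4 (-1) 6 1 (-7));
  (mk4 (-1) 7 (-1) 6);
  (mk4 (-1) 7 0 (-1));
  (mk4 (-1) 7 1 (-8));
  (mk4 (-1) 8 (-1) 7);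
  (mk4 (-1) 8 0 (-1));
  (mk4 0 (-1) 1 (-8));
  (mk4 0 (-1) 1 (-7));
  (mk4 0 (-1) 1 (-6));
  (mk4 0 (-1) 1 (-5));
  (mk4 0 (-1) 1 (-4));
  (mk4 0 (-1) 1 (-3));
  (mk4 0 (-1) 1 (-2));
  (mk4 0 (-1) 1 (-1));
  (mk4 0 (-1) 1 0);
  (mk4 0 (-1) 1 1);
  (mk4 0 (-1) 1 2);
  (mk4 0 (-1) 1 3);
  (mk4 0 (-1) 1 4);
  (mk4 0 (-1) 1 5);
  (mk4 0 (-1) 1 6);
  (mk4 0 (-1) 1 7);
  (mk4 0 (-1) 1 8);
  (mk4 0 1 (-1) (-8));
  (mk4 0 1 (-1) (-7));
  (mk4 0 1 (-1) (-6));
  (mk4 0 1 (-1) (-5));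
  (mk4 0 1 (-1) (-4));
  (mk4 0 1 (-1) (-3));
  (mk4 0 1 (-1) (-2));
  (mk4 0 1 (-1) (-1));
  (mk4 0 1 (-1) 0);
  (mk4 0 1 (-1) 1);
  (mk4 0 1 (-1) 2);
  (mk4 0 1 (-1) 3);
  (mk4 0 1 (-1) 4);
  (mk4 0 1 (-1) 5);
  (mk4 0 1 (-1) 6);
  (mk4 0 1 (-1) 7);
  (mk4 0 1 (-1) 8);
  (mk4 1 (-8) 0 1);
  (mk4 1 (-8) 1 (-7));
  (mk4 1 (-7) (-1) 8);
  (mk4 1 (-7) 0 1);
  (mk4 1 (-7) 1 (-6));
  (mk4 1 (-6) (-1) 7);
  (mk4 1 (-6) 0 1);
  (mk4 1 (-6) 1 (-5));
  (mk4 1 (-5) (-1) 6);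
  (mk4 1 (-5) 0 1);
  (mk4 1 (-5) 1 (-4));
  (mk4 1 (-4) (-1) 5);
  (mk4 1 (-4) 0 1);
  (mk4 1 (-4) 1 (-3));
  (mk4 1 (-4) 2 (-7));
  (mk4 1 (-3) (-2) 7);
  (mk4 1 (-3) (-1) 4);
  (mk4 1 (-3) 0 1);
  (mk4 1 (-3) 1 (-2));
  (mk4 1 (-3) 2 (-5));
  (mk4 1 (-3) 3 (-8));
  (mk4 1 (-2) (-3) 7);
  (mk4 1 (-2) (-2) 5);
  (mk4 1 (-2) (-1) 3);
  (mk4 1 (-2) 0 1);
  (mk4 1 (-2) 1 (-1));
  (mk4 1 (-2) 2 (-3));
  (mk4 1 (-2) 3 (-5));
  (mk4 1 (-2) 4 (-7));
  (mk4 1 (-1) (-7) 8);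
  (mk4 1 (-1) (-6) 7);
  (mk4 1 (-1) (-5) 6);
  (mk4 1 (-1) (-4) 5);
  (mk4 1 (-1) (-3) 4);
  (mk4 1 (-1) (-2) 3);
  (mk4 1 (-1) (-1) 2);
  (mk4 1 (-1) 0 1);
  (mk4 1 (-1) 1 0);
  (mk4 1 (-1) 2 (-1));
  (mk4 1 (-1) 3 (-2));
  (mk4 1 (-1) 4 (-3));
  (mk4 1 (-1) 5 (-4));
  (mk4 1 (-1) 6 (-5));
  (mk4 1 (-1) 7 (-6));
  (mk4 1 (-1) 8 (-7));
  (mk4 1 0 (-8) 1);
  (mk4 1 0 (-7) 1);
  (mk4 1 0 (-6) 1);
  (mk4 1 0 (-5) 1);
  (mk4 1 0 (-4) 1);
  (mk4 1 0 (-3) 1);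
  (mk4 1 0 (-2) 1);
  (mk4 1 0 (-1) 1);
  (mk4 1 0 0 1);
  (mk4 1 0 1 1);
  (mk4 1 0 2 1);
  (mk4 1 0 3 1);
  (mk4 1 0 4 1);
  (mk4 1 0 5 1);
  (mk4 1 0 6 1);
  (mk4 1 0 7 1);
  (mk4 1 0 8 1);
  (mk4 1 1 (-8) (-7));
  (mk4 1 1 (-7) (-6));
  (mk4 1 1 (-6) (-5));
  (mk4 1 1 (-5) (-4));
  (mk4 1 1 (-4) (-3));
  (mk4 1 1 (-3) (-2));
  (mk4 1 1 (-2) (-1));
  (mk4 1 1 (-1) 0);
  (mk4 1 1 0 1);
  (mk4 1 1 1 2);
  (mk4 1 1 2 3);
  (mk4 1 1 3 4);
  (mk4 1 1 4 5);
  (mk4 1 1 5 6);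
  (mk4 1 1 6 7);
  (mk4 1 1 7 8);
  (mk4 1 2 (-4) (-7));
  (mk4 1 2 (-3) (-5));
  (mk4 1 2 (-2) (-3));
  (mk4 1 2 (-1) (-1));
  (mk4 1 2 0 1);
  (mk4 1 2 1 3);
  (mk4 1 2 2 5);
  (mk4 1 2 3 7);
  (mk4 1 3 (-3) (-8));
  (mk4 1 3 (-2) (-5));
  (mk4 1 3 (-1) (-2));
  (mk4 1 3 0 1);
  (mk4 1 3 1 4);
  (mk4 1 3 2 7);
  (mk4 1 4 (-2) (-7));
  (mk4 1 4 (-1) (-3));
  (mk4 1 4 0 1);
  (mk4 1 4 1 5);
  (mk4 1 5 (-1) (-4));
  (mk4 1 5 0 1);
  (mk4 1 5 1 6);
  (mk4 1 6 (-1) (-5));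
  (mk4 1 6 0 1);
  (mk4 1 6 1 7);
  (mk4 1 7 (-1) (-6));
  (mk4 1 7 0 1);
  (mk4 1 7 1 8);
  (mk4 1 8 (-1) (-7));
  (mk4 1 8 0 1);
  (mk4 2 (-7) (-1) 4);
  (mk4 2 (-7) 1 (-3));
  (mk4 2 (-5) (-3) 8);
  (mk4 2 (-5) (-1) 3);
  (mk4 2 (-5) 1 (-2));
  (mk4 2 (-5) 3 (-7));
  (mk4 2 (-3) (-5) 8);
  (mk4 2 (-3) (-3) 5);
  (mk4 2 (-3) (-1) 2);
  (mk4 2 (-3) 1 (-1));
  (mk4 2 (-3) 3 (-4));
  (mk4 2 (-3) 5 (-7));
  (mk4 2 (-1) (-7) 4);
  (mk4 2 (-1) (-5) 3);
  (mk4 2 (-1) (-3) 2);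
  (mk4 2 (-1) (-1) 1);
  (mk4 2 (-1) 1 0);
  (mk4 2 (-1) 3 (-1));
  (mk4 2 (-1) 5 (-2));
  (mk4 2 (-1) 7 (-3));
  (mk4 2 1 (-7) (-3));
  (mk4 2 1 (-5) (-2));
  (mk4 2 1 (-3) (-1));
  (mk4 2 1 (-1) 0);
  (mk4 2 1 1 1);
  (mk4 2 1 3 2);
  (mk4 2 1 5 3);
  (mk4 2 1 7 4);
  (mk4 2 3 (-5) (-7));
  (mk4 2 3 (-3) (-4));
  (mk4 2 3 (-1) (-1));
  (mk4 2 3 1 2);
  (mk4 2 3 3 5);
  (mk4 2 3 5 8);
  (mk4 2 5 (-3) (-7));
  (mk4 2 5 (-1) (-2));
  (mk4 2 5 1 3);
  (mk4 2 5 3 8);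
  (mk4 2 7 (-1) (-3));
  (mk4 2 7 1 4);
  (mk4 3 (-8) (-1) 3);
  (mk4 3 (-8) 2 (-5));
  (mk4 3 (-7) (-2) 5);
  (mk4 3 (-7) 1 (-2));
  (mk4 3 (-5) (-4) 7);
  (mk4 3 (-5) (-1) 2);
  (mk4 3 (-5) 2 (-3));
  (mk4 3 (-5) 5 (-8));
  (mk4 3 (-4) (-5) 7);
  (mk4 3 (-4) (-2) 3);
  (mk4 3 (-4) 1 (-1));
  (mk4 3 (-4) 4 (-5));
  (mk4 3 (-2) (-7) 5);
  (mk4 3 (-2) (-4) 3);
  (mk4 3 (-2) (-1) 1);
  (mk4 3 (-2) 2 (-1));
  (mk4 3 (-2) 5 (-3));
  (mk4 3 (-2) 8 (-5));
  (mk4 3 (-1) (-8) 3);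
  (mk4 3 (-1) (-5) 2);
  (mk4 3 (-1) (-2) 1);
  (mk4 3 (-1) 1 0);
  (mk4 3 (-1) 4 (-1));
  (mk4 3 (-1) 7 (-2));
  (mk4 3 1 (-7) (-2));
  (mk4 3 1 (-4) (-1));
  (mk4 3 1 (-1) 0);
  (mk4 3 1 2 1);
  (mk4 3 1 5 2);
  (mk4 3 1 8 3);
  (mk4 3 2 (-8) (-5));
  (mk4 3 2 (-5) (-3));
  (mk4 3 2 (-2) (-1));
  (mk4 3 2 1 1);
  (mk4 3 2 4 3);
  (mk4 3 2 7 5);
  (mk4 3 4 (-4) (-5));
  (mk4 3 4 (-1) (-1));
  (mk4 3 4 2 3);
  (mk4 3 4 5 7);
  (mk4 3 5 (-5) (-8));
  (mk4 3 5 (-2) (-3));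
  (mk4 3 5 1 2);
  (mk4 3 5 4 7);
  (mk4 3 7 (-1) (-2));
  (mk4 3 7 2 5);
  (mk4 3 8 (-2) (-5));
  (mk4 3 8 1 3);
  (mk4 4 (-7) (-1) 2);
  (mk4 4 (-7) 3 (-5));
  (mk4 4 (-5) (-3) 4);
  (mk4 4 (-5) 1 (-1));
  (mk4 4 (-5) 5 (-6));
  (mk4 4 (-3) (-5) 4);
  (mk4 4 (-3) (-1) 1);
  (mk4 4 (-3) 3 (-2));
  (mk4 4 (-3) 7 (-5));
  (mk4 4 (-1) (-7) 2);
  (mk4 4 (-1) (-3) 1);
  (mk4 4 (-1) 1 0);
  (mk4 4 (-1) 5 (-1));
  (mk4 4 1 (-5) (-1));
  (mk4 4 1 (-1) 0);
  (mk4 4 1 3 1);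
  (mk4 4 1 7 2);
  (mk4 4 3 (-7) (-5));
  (mk4 4 3 (-3) (-2));
  (mk4 4 3 1 1);
  (mk4 4 3 5 4);
  (mk4 4 5 (-5) (-6));
  (mk4 4 5 (-1) (-1));
  (mk4 4 5 3 4);
  (mk4 4 7 (-3) (-5));
  (mk4 4 7 1 2);
  (mk4 5 (-8) (-3) 5);
  (mk4 5 (-8) 2 (-3));
  (mk4 5 (-7) (-2) 3);
  (mk4 5 (-7) 3 (-4));
  (mk4 5 (-6) (-4) 5);
  (mk4 5 (-6) 1 (-1));
  (mk4 5 (-6) 6 (-7));
  (mk4 5 (-4) (-6) 5);
  (mk4 5 (-4) (-1) 1);
  (mk4 5 (-4) 4 (-3));
  (mk4 5 (-3) (-8) 5);
  (mk4 5 (-3) (-3) 2);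
  (mk4 5 (-3) 2 (-1));
  (mk4 5 (-3) 7 (-4));
  (mk4 5 (-2) (-7) 3);
  (mk4 5 (-2) (-2) 1);
  (mk4 5 (-2) 3 (-1));
  (mk4 5 (-2) 8 (-3));
  (mk4 5 (-1) (-4) 1);
  (mk4 5 (-1) 1 0);
  (mk4 5 (-1) 6 (-1));
  (mk4 5 1 (-6) (-1));
  (mk4 5 1 (-1) 0);
  (mk4 5 1 4 1);
  (mk4 5 2 (-8) (-3));
  (mk4 5 2 (-3) (-1));
  (mk4 5 2 2 1);
  (mk4 5 2 7 3);
  (mk4 5 3 (-7) (-4));
  (mk4 5 3 (-2) (-1));
  (mk4 5 3 3 2);
  (mk4 5 3 8 5);
  (mk4 5 4 (-4) (-3));
  (mk4 5 4 1 1);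
  (mk4 5 4 6 5);
  (mk4 5 6 (-6) (-7));
  (mk4 5 6 (-1) (-1));
  (mk4 5 6 4 5);
  (mk4 5 7 (-3) (-4));
  (mk4 5 7 2 3);
  (mk4 5 8 (-2) (-3));
  (mk4 5 8 3 5);
  (mk4 6 (-7) (-5) 6);
  (mk4 6 (-7) 1 (-1));
  (mk4 6 (-7) 7 (-8));
  (mk4 6 (-5) (-7) 6);
  (mk4 6 (-5) (-1) 1);
  (mk4 6 (-5) 5 (-4));
  (mk4 6 (-1) (-5) 1);
  (mk4 6 (-1) 1 0);
  (mk4 6 (-1) 7 (-1));
  (mk4 6 1 (-7) (-1));
  (mk4 6 1 (-1) 0);
  (mk4 6 1 5 1);
  (mk4 6 5 (-5) (-4));
  (mk4 6 5 1 1);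
  (mk4 6 5 7 6);
  (mk4 6 7 (-7) (-8));
  (mk4 6 7 (-1) (-1));
  (mk4 6 7 5 6);
  (mk4 7 (-8) (-6) 7);
  (mk4 7 (-8) 1 (-1));
  (mk4 7 (-6) (-8) 7);
  (mk4 7 (-6) (-1) 1);
  (mk4 7 (-6) 6 (-5));
  (mk4 7 (-5) (-4) 3);
  (mk4 7 (-5) 3 (-2));
  (mk4 7 (-4) (-5) 3);
  (mk4 7 (-4) 2 (-1));
  (mk4 7 (-3) (-2) 1);
  (mk4 7 (-3) 5 (-2));
  (mk4 7 (-2) (-3) 1);
  (mk4 7 (-2) 4 (-1));
  (mk4 7 (-1) (-6) 1);
  (mk4 7 (-1) 1 0);
  (mk4 7 (-1) 8 (-1));
  (mk4 7 1 (-8) (-1));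
  (mk4 7 1 (-1) 0);
  (mk4 7 1 6 1);
  (mk4 7 2 (-4) (-1));
  (mk4 7 2 3 1);
  (mk4 7 3 (-5) (-2));
  (mk4 7 3 2 1);
  (mk4 7 4 (-2) (-1));
  (mk4 7 4 5 3);
  (mk4 7 5 (-3) (-2));
  (mk4 7 5 4 3);
  (mk4 7 6 (-6) (-5));
  (mk4 7 6 1 1);
  (mk4 7 6 8 7);
  (mk4 7 8 (-1) (-1));
  (mk4 7 8 6 7);
  (mk4 8 (-7) (-1) 1);
  (mk4 8 (-7) 7 (-6));
  (mk4 8 (-5) (-3) 2);
  (mk4 8 (-5) 5 (-3));
  (mk4 8 (-3) (-5) 2);
  (mk4 8 (-3) 3 (-1));
  (mk4 8 (-1) (-7) 1);
  (mk4 8 (-1) 1 0);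
  (mk4 8 1 (-1) 0);
  (mk4 8 1 7 1);
  (mk4 8 3 (-3) (-1));
  (mk4 8 3 5 2);
  (mk4 8 5 (-5) (-3));
  (mk4 8 5 3 2);
  (mk4 8 7 (-7) (-6));
  (mk4 8 7 1 1)].
Definition St_5 : list step4 := [:: ((mk4 (-12) (-7) (-5) (-3)), (mk4 2 (-1) 1 0), (mk4 (-5) (-3) 2 1));
  ((mk4 (-12) (-7) 7 4), (mk4 2 1 (-1) 0), (mk4 (-7) (-4) 2 1));
  ((mk4 (-12) (-5) (-7) (-3)), (mk4 2 (-1) 1 0), (mk4 3 2 (-2) (-1)));
  ((mk4 (-12) (-5) 5 2), (mk4 2 1 (-1) 0), (mk4 5 3 (-2) (-1)));
  ((mk4 (-12) 5 (-5) 2), (mk4 2 (-1) 1 0), (mk4 (-5) 2 2 (-1)));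
  ((mk4 (-12) 5 7 (-3)), (mk4 2 1 (-1) 0), (mk4 (-7) 3 2 (-1)));
  ((mk4 (-12) 7 (-7) 4), (mk4 2 (-1) 1 0), (mk4 3 (-1) (-2) 1));
  ((mk4 (-12) 7 5 (-3)), (mk4 2 1 (-1) 0), (mk4 5 (-2) (-2) 1));
  ((mk4 (-11) (-8) (-4) (-3)), (mk4 3 (-1) 1 0), (mk4 1 2 (-1) (-1)));
  ((mk4 (-11) (-8) 7 5), (mk4 3 2 (-2) (-1)), (mk4 2 3 (-1) (-1)));
  ((mk4 (-11) (-7) (-3) (-2)), (mk4 1 0 0 1), (mk4 4 3 (-3) (-2)));
  ((mk4 (-11) (-7) 8 5), (mk4 1 1 (-1) 0), (mk4 7 5 (-3) (-2)));
  ((mk4 (-11) (-4) (-8) (-3)), (mk4 1 (-1) 1 0), (mk4 (-8) (-3) 3 1));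
  ((mk4 (-11) (-4) 3 1), (mk4 1 0 0 1), (mk4 (-11) (-4) 3 1));
  ((mk4 (-11) (-3) (-7) (-2)), (mk4 3 1 2 1), (mk4 (-4) (-1) 1 0));
  ((mk4 (-11) (-3) 4 1), (mk4 3 1 (-1) 0), (mk4 (-4) (-1) 1 0));
  ((mk4 (-11) 3 (-4) 1), (mk4 3 (-1) 1 0), (mk4 1 1 (-1) 0));
  ((mk4 (-11) 3 7 (-2)), (mk4 3 2 (-2) (-1)), (mk4 2 1 (-1) 0));
  ((mk4 (-11) 4 (-3) 1), (mk4 1 0 0 1), (mk4 4 (-1) (-3) 1));
  ((mk4 (-11) 4 8 (-3)), (mk4 1 1 (-1) 0), (mk4 7 (-2) (-3) 1));
  ((mk4 (-11) 7 (-8) 5), (mk4 1 (-1) 1 0), (mk4 (-8) 5 3 (-2)));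
  ((mk4 (-11) 7 3 (-2)), (mk4 1 0 0 1), (mk4 (-11) 7 3 (-2)));
  ((mk4 (-11) 8 (-7) 5), (mk4 3 1 2 1), (mk4 (-4) 3 1 (-1)));
  ((mk4 (-11) 8 4 (-3)), (mk4 3 1 (-1) 0), (mk4 (-4) 3 1 (-1)));
  ((mk4 (-10) (-7) (-7) (-5)), (mk4 1 (-1) 1 0), (mk4 (-7) (-5) 3 2));
  ((mk4 (-10) (-7) 3 2), (mk4 3 1 (-1) 0), (mk4 2 3 (-1) (-1)));
  ((mk4 (-10) (-3) (-3) (-1)), (mk4 1 0 0 1), (mk4 5 2 (-3) (-1)));
  ((mk4 (-10) (-3) 7 2), (mk4 3 2 (-2) (-1)), (mk4 (-4) (-1) 1 0));
  ((mk4 (-10) 3 (-7) 2), (mk4 1 (-1) 1 0), (mk4 (-7) 2 3 (-1)));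
  ((mk4 (-10) 3 3 (-1)), (mk4 3 1 (-1) 0), (mk4 2 1 (-1) 0));
  ((mk4 (-10) 7 (-3) 2), (mk4 1 0 0 1), (mk4 5 (-3) (-3) 2));
  ((mk4 (-10) 7 7 (-5)), (mk4 3 2 (-2) (-1)), (mk4 (-4) 3 1 (-1)));
  ((mk4 (-9) (-8) (-1) (-1)), (mk4 1 0 0 1), (mk4 (-4) (-3) (-1) (-1)));
  ((mk4 (-9) (-8) 8 7), (mk4 1 1 (-1) 0), (mk4 (-3) (-2) (-1) (-1)));
  ((mk4 (-9) (-7) (-5) (-4)), (mk4 2 (-1) 1 0), (mk4 0 1 (-1) (-1)));
  ((mk4 (-9) (-7) 4 3), (mk4 2 1 (-1) 0), (mk4 1 2 (-1) (-1)));
  ((mk4 (-9) (-5) (-7) (-4)), (mk4 1 (-1) 1 0), (mk4 (-7) (-4) 2 1));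
  ((mk4 (-9) (-5) 2 1), (mk4 1 0 0 1), (mk4 (-9) (-5) 2 1));
  ((mk4 (-9) (-4) (-2) (-1)), (mk4 1 0 0 1), (mk4 1 1 (-2) (-1)));
  ((mk4 (-9) (-4) 7 3), (mk4 1 1 (-1) 0), (mk4 3 2 (-2) (-1)));
  ((mk4 (-9) (-2) (-4) (-1)), (mk4 2 (-1) 1 0), (mk4 (-4) (-1) 1 0));
  ((mk4 (-9) (-2) 5 1), (mk4 2 1 (-1) 0), (mk4 (-5) (-1) 1 0));
  ((mk4 (-9) (-1) (-8) (-1)), (mk4 1 (-1) 1 0), (mk4 (-8) (-1) 1 0));
  ((mk4 (-9) (-1) 1 0), (mk4 1 0 0 1), (mk4 (-9) (-1) 1 0));
  ((mk4 (-9) 1 (-1) 0), (mk4 1 0 0 1), (mk4 (-4) 1 (-1) 0));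
  ((mk4 (-9) 1 8 (-1)), (mk4 1 1 (-1) 0), (mk4 (-3) 1 (-1) 0));
  ((mk4 (-9) 2 (-5) 1), (mk4 2 (-1) 1 0), (mk4 0 1 (-1) 0));
  ((mk4 (-9) 2 4 (-1)), (mk4 2 1 (-1) 0), (mk4 1 1 (-1) 0));
  ((mk4 (-9) 4 (-7) 3), (mk4 1 (-1) 1 0), (mk4 (-7) 3 2 (-1)));
  ((mk4 (-9) 4 2 (-1)), (mk4 1 0 0 1), (mk4 (-9) 4 2 (-1)));
  ((mk4 (-9) 5 (-2) 1), (mk4 1 0 0 1), (mk4 1 0 (-2) 1));
  ((mk4 (-9) 5 7 (-4)), (mk4 1 1 (-1) 0), (mk4 3 (-1) (-2) 1));
  ((mk4 (-9) 7 (-4) 3), (mk4 2 (-1) 1 0), (mk4 (-4) 3 1 (-1)));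
  ((mk4 (-9) 7 5 (-4)), (mk4 2 1 (-1) 0), (mk4 (-5) 4 1 (-1)));
  ((mk4 (-9) 8 (-8) 7), (mk4 1 (-1) 1 0), (mk4 (-8) 7 1 (-1)));
  ((mk4 (-9) 8 1 (-1)), (mk4 1 0 0 1), (mk4 (-9) 8 1 (-1)));
  ((mk4 (-8) (-11) (-5) (-7)), (mk4 3 1 2 1), (mk4 (-3) (-4) 1 1));
  ((mk4 (-8) (-11) 3 4), (mk4 3 1 (-1) 0), (mk4 (-3) (-4) 1 1));
  ((mk4 (-8) (-9) (-7) (-8)), (mk4 1 (-1) 1 0), (mk4 (-7) (-8) 1 1));
  ((mk4 (-8) (-9) 1 1), (mk4 1 0 0 1), (mk4 (-8) (-9) 1 1));
  ((mk4 (-8) (-5) (-11) (-7)), (mk4 1 (-1) 1 0), (mk4 4 3 (-3) (-2)));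
  ((mk4 (-8) (-3) 11 4), (mk4 1 1 (-1) 0), (mk4 (-11) (-4) 3 1));
  ((mk4 (-8) 5 11 (-7)), (mk4 1 1 (-1) 0), (mk4 (-11) 7 3 (-2)));
  ((mk4 (-8) 9 (-1) 1), (mk4 1 0 0 1), (mk4 (-3) 4 (-1) 1));
  ((mk4 (-8) 9 7 (-8)), (mk4 1 1 (-1) 0), (mk4 (-2) 3 (-1) 1));
  ((mk4 (-8) 11 (-3) 4), (mk4 3 (-1) 1 0), (mk4 2 (-1) (-1) 1));
  ((mk4 (-8) 11 5 (-7)), (mk4 3 2 (-2) (-1)), (mk4 3 (-2) (-1) 1));
  ((mk4 (-7) (-12) (-4) (-7)), (mk4 2 (-1) 1 0), (mk4 1 3 (-1) (-2)));
  ((mk4 (-7) (-12) 3 5), (mk4 2 1 (-1) 0), (mk4 2 5 (-1) (-2)));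
  ((mk4 (-7) (-11) (-5) (-8)), (mk4 1 (-1) 1 0), (mk4 (-5) (-8) 2 3));
  ((mk4 (-7) (-11) 2 3), (mk4 1 0 0 1), (mk4 (-7) (-11) 2 3));
  ((mk4 (-7) (-10) (-2) (-3)), (mk4 1 0 0 1), (mk4 3 5 (-2) (-3)));
  ((mk4 (-7) (-10) 5 7), (mk4 3 2 (-2) (-1)), (mk4 (-3) (-4) 1 1));
  ((mk4 (-7) (-9) (-3) (-4)), (mk4 2 (-1) 1 0), (mk4 (-3) (-4) 1 1));
  ((mk4 (-7) (-9) 4 5), (mk4 2 1 (-1) 0), (mk4 (-4) (-5) 1 1));
  ((mk4 (-7) (-4) (-12) (-7)), (mk4 1 0 2 1), (mk4 (-7) (-4) 2 1));
  ((mk4 (-7) (-4) 9 5), (mk4 1 1 (-1) 0), (mk4 (-9) (-5) 2 1));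
  ((mk4 (-7) 3 (-12) 5), (mk4 1 0 2 1), (mk4 (-7) 3 2 (-1)));
  ((mk4 (-7) 3 9 (-4)), (mk4 1 1 (-1) 0), (mk4 (-9) 4 2 (-1)));
  ((mk4 (-7) 9 (-4) 5), (mk4 2 (-1) 1 0), (mk4 1 0 (-1) 1));
  ((mk4 (-7) 9 3 (-4)), (mk4 2 1 (-1) 0), (mk4 2 (-1) (-1) 1));
  ((mk4 (-7) 10 (-5) 7), (mk4 1 (-1) 1 0), (mk4 (-5) 7 2 (-3)));
  ((mk4 (-7) 10 2 (-3)), (mk4 3 1 (-1) 0), (mk4 3 (-2) (-1) 1));
  ((mk4 (-7) 11 (-2) 3), (mk4 1 0 0 1), (mk4 3 (-4) (-2) 3));
  ((mk4 (-7) 11 5 (-8)), (mk4 1 1 (-1) 0), (mk4 5 (-7) (-2) 3));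
  ((mk4 (-7) 12 (-3) 5), (mk4 2 (-1) 1 0), (mk4 (-3) 5 1 (-2)));
  ((mk4 (-7) 12 4 (-7)), (mk4 2 1 (-1) 0), (mk4 (-4) 7 1 (-2)));
  ((mk4 (-5) (-12) (-2) (-5)), (mk4 2 (-1) 1 0), (mk4 (-2) (-5) 1 2));
  ((mk4 (-5) (-12) 3 7), (mk4 2 1 (-1) 0), (mk4 (-3) (-7) 1 2));
  ((mk4 (-5) (-9) (-1) (-2)), (mk4 1 0 0 1), (mk4 0 1 (-1) (-2)));
  ((mk4 (-5) (-9) 4 7), (mk4 1 1 (-1) 0), (mk4 1 3 (-1) (-2)));
  ((mk4 (-5) (-8) 7 11), (mk4 1 1 (-1) 0), (mk4 (-7) (-11) 2 3));
  ((mk4 (-5) (-2) (-12) (-5)), (mk4 1 0 2 1), (mk4 5 3 (-2) (-1)));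
  ((mk4 (-5) (-2) 13 5), (mk4 0 (-1) 1 0), (mk4 (-12) (-5) 5 2));
  ((mk4 (-5) (-2) 18 7), (mk4 0 (-1) 1 0), (mk4 (-7) (-3) 5 2));
  ((mk4 (-5) (-2) 23 9), (mk4 0 (-1) 1 0), (mk4 (-2) (-1) 5 2));
  ((mk4 (-5) 2 12 (-5)), (mk4 1 1 (-2) (-1)), (mk4 (-7) 3 2 (-1)));
  ((mk4 (-5) 2 17 (-7)), (mk4 0 (-1) 1 0), (mk4 (-8) 3 5 (-2)));
  ((mk4 (-5) 8 (-7) 11), (mk4 1 (-1) 1 0), (mk4 3 (-4) (-2) 3));
  ((mk4 (-5) 9 (-4) 7), (mk4 1 (-1) 1 0), (mk4 (-4) 7 1 (-2)));
  ((mk4 (-5) 9 1 (-2)), (mk4 1 0 0 1), (mk4 (-5) 9 1 (-2)));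
  ((mk4 (-5) 12 (-3) 7), (mk4 2 (-1) 1 0), (mk4 2 (-3) (-1) 2));
  ((mk4 (-5) 12 2 (-5)), (mk4 2 1 (-1) 0), (mk4 3 (-5) (-1) 2));
  ((mk4 (-5) 13 (-2) 5), (mk4 5 2 2 1), (mk4 (-1) 3 0 (-1)));
  ((mk4 (-5) 13 3 (-8)), (mk4 5 2 (-3) (-1)), (mk4 (-1) 3 0 (-1)));
  ((mk4 (-5) 17 2 (-7)), (mk4 5 3 (-2) (-1)), (mk4 (-1) 4 0 (-1)));
  ((mk4 (-5) 18 3 (-11)), (mk4 5 2 (-3) (-1)), (mk4 (-1) 4 0 (-1)));
  ((mk4 (-5) 22 2 (-9)), (mk4 5 3 (-2) (-1)), (mk4 (-1) 5 0 (-1)));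
  ((mk4 (-5) 23 3 (-14)), (mk4 5 2 (-3) (-1)), (mk4 (-1) 5 0 (-1)));
  ((mk4 (-5) 28 3 (-17)), (mk4 5 2 (-3) (-1)), (mk4 (-1) 6 0 (-1)));
  ((mk4 (-5) 33 3 (-20)), (mk4 5 2 (-3) (-1)), (mk4 (-1) 7 0 (-1)));
  ((mk4 (-4) (-11) (-1) (-3)), (mk4 1 0 0 1), (mk4 1 4 (-1) (-3)));
  ((mk4 (-4) (-11) 3 8), (mk4 1 1 (-1) 0), (mk4 2 7 (-1) (-3)));
  ((mk4 (-4) (-9) (-3) (-7)), (mk4 1 (-1) 1 0), (mk4 (-3) (-7) 1 2));
  ((mk4 (-4) (-9) 1 2), (mk4 1 0 0 1), (mk4 (-4) (-9) 1 2));
  ((mk4 (-4) (-3) 11 8), (mk4 1 0 (-3) 1), (mk4 1 2 (-1) (-1)));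
  ((mk4 (-4) (-3) 15 11), (mk4 0 (-1) 1 0), (mk4 (-5) (-4) 4 3));
  ((mk4 (-4) (-1) 9 2), (mk4 1 1 (-2) (-1)), (mk4 (-5) (-1) 1 0));
  ((mk4 (-4) (-1) 13 3), (mk4 0 (-1) 1 0), (mk4 (-7) (-2) 4 1));
  ((mk4 (-4) (-1) 17 4), (mk4 0 (-1) 1 0), (mk4 (-3) (-1) 4 1));
  ((mk4 (-4) (-1) 21 5), (mk4 0 (-1) 1 0), (mk4 1 0 4 1));
  ((mk4 (-4) (-1) 25 6), (mk4 0 (-1) 1 0), (mk4 5 1 4 1));
  ((mk4 (-4) (-1) 29 7), (mk4 0 (-1) 1 0), (mk4 9 2 4 1));
  ((mk4 (-4) (-1) 33 8), (mk4 0 (-1) 1 0), (mk4 13 3 4 1));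
  ((mk4 (-4) (-1) 37 9), (mk4 0 (-1) 1 0), (mk4 17 4 4 1));
  ((mk4 (-4) 1 11 (-3)), (mk4 1 0 (-3) 1), (mk4 1 1 (-1) 0));
  ((mk4 (-4) 1 15 (-4)), (mk4 0 (-1) 1 0), (mk4 (-5) 1 4 (-1)));
  ((mk4 (-4) 1 19 (-5)), (mk4 0 (-1) 1 0), (mk4 (-1) 0 4 (-1)));
  ((mk4 (-4) 1 23 (-6)), (mk4 0 (-1) 1 0), (mk4 3 (-1) 4 (-1)));
  ((mk4 (-4) 1 27 (-7)), (mk4 0 (-1) 1 0), (mk4 7 (-2) 4 (-1)));
  ((mk4 (-4) 1 31 (-8)), (mk4 0 (-1) 1 0), (mk4 11 (-3) 4 (-1)));
  ((mk4 (-4) 3 9 (-7)), (mk4 1 1 (-2) (-1)), (mk4 (-5) 4 1 (-1)));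
  ((mk4 (-4) 3 13 (-10)), (mk4 0 (-1) 1 0), (mk4 (-7) 5 4 (-3)));
  ((mk4 (-4) 3 17 (-13)), (mk4 0 (-1) 1 0), (mk4 (-3) 2 4 (-3)));
  ((mk4 (-4) 3 21 (-16)), (mk4 0 (-1) 1 0), (mk4 1 (-1) 4 (-3)));
  ((mk4 (-4) 3 25 (-19)), (mk4 0 (-1) 1 0), (mk4 5 (-4) 4 (-3)));
  ((mk4 (-4) 7 (-7) 12), (mk4 1 0 2 1), (mk4 (-4) 7 1 (-2)));
  ((mk4 (-4) 7 5 (-9)), (mk4 1 1 (-1) 0), (mk4 (-5) 9 1 (-2)));
  ((mk4 (-4) 9 (-1) 2), (mk4 1 0 0 1), (mk4 1 (-1) (-1) 2));
  ((mk4 (-4) 9 3 (-7)), (mk4 4 (-1) (-3) 1), (mk4 (-1) 2 0 (-1)));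
  ((mk4 (-4) 11 (-3) 8), (mk4 1 (-1) 1 0), (mk4 (-3) 8 1 (-3)));
  ((mk4 (-4) 11 1 (-3)), (mk4 4 1 (-1) 0), (mk4 (-1) 3 0 (-1)));
  ((mk4 (-4) 13 3 (-10)), (mk4 4 (-1) (-3) 1), (mk4 (-1) 3 0 (-1)));
  ((mk4 (-4) 15 1 (-4)), (mk4 4 1 (-1) 0), (mk4 (-1) 4 0 (-1)));
  ((mk4 (-4) 17 3 (-13)), (mk4 4 (-1) (-3) 1), (mk4 (-1) 4 0 (-1)));
  ((mk4 (-4) 19 1 (-5)), (mk4 4 1 (-1) 0), (mk4 (-1) 5 0 (-1)));
  ((mk4 (-4) 21 3 (-16)), (mk4 4 (-1) (-3) 1), (mk4 (-1) 5 0 (-1)));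
  ((mk4 (-4) 23 1 (-6)), (mk4 4 1 (-1) 0), (mk4 (-1) 6 0 (-1)));
  ((mk4 (-4) 25 3 (-19)), (mk4 4 (-1) (-3) 1), (mk4 (-1) 6 0 (-1)));
  ((mk4 (-4) 27 1 (-7)), (mk4 4 1 (-1) 0), (mk4 (-1) 7 0 (-1)));
  ((mk4 (-4) 29 3 (-22)), (mk4 4 (-1) (-3) 1), (mk4 (-1) 7 0 (-1)));
  ((mk4 (-4) 31 1 (-8)), (mk4 4 1 (-1) 0), (mk4 (-1) 8 0 (-1)));
  ((mk4 (-4) 33 3 (-25)), (mk4 4 (-1) (-3) 1), (mk4 (-1) 8 0 (-1)));
  ((mk4 (-4) 37 3 (-28)), (mk4 4 (-1) (-3) 1), (mk4 (-1) 9 0 (-1)));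
  ((mk4 (-3) (-11) (-1) (-4)), (mk4 3 (-1) 1 0), (mk4 (-1) 1 0 (-1)));
  ((mk4 (-3) (-11) 2 7), (mk4 3 2 (-2) (-1)), (mk4 (-1) 2 0 (-1)));
  ((mk4 (-3) (-10) (-2) (-7)), (mk4 1 (-1) 1 0), (mk4 (-2) (-7) 1 3));
  ((mk4 (-3) (-10) 1 3), (mk4 3 1 (-1) 0), (mk4 (-1) 2 0 (-1)));
  ((mk4 (-3) (-7) (-5) (-12)), (mk4 1 0 2 1), (mk4 (-3) (-7) 1 2));
  ((mk4 (-3) (-7) 4 9), (mk4 1 1 (-1) 0), (mk4 (-4) (-9) 1 2));
  ((mk4 (-3) (-5) (-7) (-12)), (mk4 1 0 2 1), (mk4 2 5 (-1) (-2)));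
  ((mk4 (-3) (-5) 8 13), (mk4 0 (-1) 1 0), (mk4 (-7) (-12) 3 5));
  ((mk4 (-3) (-5) 11 18), (mk4 0 (-1) 1 0), (mk4 (-4) (-7) 3 5));
  ((mk4 (-3) (-5) 14 23), (mk4 0 (-1) 1 0), (mk4 (-1) (-2) 3 5));
  ((mk4 (-3) (-2) 11 7), (mk4 0 (-1) 1 0), (mk4 (-4) (-3) 3 2));
  ((mk4 (-3) (-2) 14 9), (mk4 0 (-1) 1 0), (mk4 (-1) (-1) 3 2));
  ((mk4 (-3) (-1) 10 3), (mk4 1 0 (-3) 1), (mk4 (-3) (-1) 1 0));
  ((mk4 (-3) (-1) 13 4), (mk4 0 (-1) 1 0), (mk4 (-2) (-1) 3 1));
  ((mk4 (-3) (-1) 16 5), (mk4 0 (-1) 1 0), (mk4 1 0 3 1));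
  ((mk4 (-3) (-1) 19 6), (mk4 0 (-1) 1 0), (mk4 4 1 3 1));
  ((mk4 (-3) (-1) 22 7), (mk4 0 (-1) 1 0), (mk4 7 2 3 1));
  ((mk4 (-3) (-1) 25 8), (mk4 0 (-1) 1 0), (mk4 10 3 3 1));
  ((mk4 (-3) (-1) 28 9), (mk4 0 (-1) 1 0), (mk4 13 4 3 1));
  ((mk4 (-3) 1 11 (-4)), (mk4 0 (-1) 1 0), (mk4 (-4) 1 3 (-1)));
  ((mk4 (-3) 1 14 (-5)), (mk4 0 (-1) 1 0), (mk4 (-1) 0 3 (-1)));
  ((mk4 (-3) 1 17 (-6)), (mk4 0 (-1) 1 0), (mk4 2 (-1) 3 (-1)));
  ((mk4 (-3) 1 20 (-7)), (mk4 0 (-1) 1 0), (mk4 5 (-2) 3 (-1)));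
  ((mk4 (-3) 1 23 (-8)), (mk4 0 (-1) 1 0), (mk4 8 (-3) 3 (-1)));
  ((mk4 (-3) 2 10 (-7)), (mk4 1 0 (-3) 1), (mk4 (-3) 2 1 (-1)));
  ((mk4 (-3) 2 13 (-9)), (mk4 0 (-1) 1 0), (mk4 (-2) 1 3 (-2)));
  ((mk4 (-3) 2 16 (-11)), (mk4 0 (-1) 1 0), (mk4 1 (-1) 3 (-2)));
  ((mk4 (-3) 2 19 (-13)), (mk4 0 (-1) 1 0), (mk4 4 (-3) 3 (-2)));
  ((mk4 (-3) 4 8 (-11)), (mk4 1 0 (-3) 1), (mk4 2 (-1) (-1) 1));
  ((mk4 (-3) 4 11 (-15)), (mk4 0 (-1) 1 0), (mk4 (-4) 5 3 (-4)));
  ((mk4 (-3) 5 7 (-12)), (mk4 1 1 (-2) (-1)), (mk4 (-4) 7 1 (-2)));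
  ((mk4 (-3) 5 10 (-17)), (mk4 0 (-1) 1 0), (mk4 (-5) 8 3 (-5)));
  ((mk4 (-3) 5 13 (-22)), (mk4 0 (-1) 1 0), (mk4 (-2) 3 3 (-5)));
  ((mk4 (-3) 7 5 (-12)), (mk4 1 1 (-2) (-1)), (mk4 3 (-5) (-1) 2));
  ((mk4 (-3) 8 (-5) 13), (mk4 3 1 5 2), (mk4 (-1) 3 0 (-1)));
  ((mk4 (-3) 8 4 (-11)), (mk4 3 1 (-4) (-1)), (mk4 (-1) 3 0 (-1)));
  ((mk4 (-3) 10 (-1) 3), (mk4 1 0 0 1), (mk4 2 (-5) (-1) 3));
  ((mk4 (-3) 10 2 (-7)), (mk4 3 2 (-2) (-1)), (mk4 (-1) 4 0 (-1)));
  ((mk4 (-3) 10 5 (-17)), (mk4 3 (-1) (-5) 2), (mk4 (-1) 3 0 (-1)));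
  ((mk4 (-3) 11 (-2) 7), (mk4 3 1 2 1), (mk4 (-1) 4 0 (-1)));
  ((mk4 (-3) 11 1 (-4)), (mk4 3 1 (-1) 0), (mk4 (-1) 4 0 (-1)));
  ((mk4 (-3) 11 4 (-15)), (mk4 3 1 (-4) (-1)), (mk4 (-1) 4 0 (-1)));
  ((mk4 (-3) 13 2 (-9)), (mk4 3 2 (-2) (-1)), (mk4 (-1) 5 0 (-1)));
  ((mk4 (-3) 13 5 (-22)), (mk4 3 (-1) (-5) 2), (mk4 (-1) 4 0 (-1)));
  ((mk4 (-3) 14 (-2) 9), (mk4 3 1 2 1), (mk4 (-1) 5 0 (-1)));
  ((mk4 (-3) 14 1 (-5)), (mk4 3 1 (-1) 0), (mk4 (-1) 5 0 (-1)));
  ((mk4 (-3) 14 4 (-19)), (mk4 3 1 (-4) (-1)), (mk4 (-1) 5 0 (-1)));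
  ((mk4 (-3) 16 2 (-11)), (mk4 3 2 (-2) (-1)), (mk4 (-1) 6 0 (-1)));
  ((mk4 (-3) 17 1 (-6)), (mk4 3 1 (-1) 0), (mk4 (-1) 6 0 (-1)));
  ((mk4 (-3) 17 4 (-23)), (mk4 3 1 (-4) (-1)), (mk4 (-1) 6 0 (-1)));
  ((mk4 (-3) 19 2 (-13)), (mk4 3 2 (-2) (-1)), (mk4 (-1) 7 0 (-1)));
  ((mk4 (-3) 20 1 (-7)), (mk4 3 1 (-1) 0), (mk4 (-1) 7 0 (-1)));
  ((mk4 (-3) 20 4 (-27)), (mk4 3 1 (-4) (-1)), (mk4 (-1) 7 0 (-1)));
  ((mk4 (-3) 22 2 (-15)), (mk4 3 2 (-2) (-1)), (mk4 (-1) 8 0 (-1)));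
  ((mk4 (-3) 23 1 (-8)), (mk4 3 1 (-1) 0), (mk4 (-1) 8 0 (-1)));
  ((mk4 (-3) 23 4 (-31)), (mk4 3 1 (-4) (-1)), (mk4 (-1) 8 0 (-1)));
  ((mk4 (-3) 25 2 (-17)), (mk4 3 2 (-2) (-1)), (mk4 (-1) 9 0 (-1)));
  ((mk4 (-3) 28 2 (-19)), (mk4 3 2 (-2) (-1)), (mk4 (-1) 10 0 (-1)));
  ((mk4 (-2) (-9) (-1) (-5)), (mk4 2 (-1) 1 0), (mk4 (-1) 0 0 (-1)));
  ((mk4 (-2) (-9) 1 4), (mk4 2 1 (-1) 0), (mk4 (-1) 1 0 (-1)));
  ((mk4 (-2) (-5) 5 12), (mk4 1 1 (-2) (-1)), (mk4 (-3) (-7) 1 2));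
  ((mk4 (-2) (-5) 7 17), (mk4 0 (-1) 1 0), (mk4 (-3) (-8) 2 5));
  ((mk4 (-2) (-3) 7 10), (mk4 1 0 (-3) 1), (mk4 (-2) (-3) 1 1));
  ((mk4 (-2) (-3) 9 13), (mk4 0 (-1) 1 0), (mk4 (-1) (-2) 2 3));
  ((mk4 (-2) (-3) 11 16), (mk4 0 (-1) 1 0), (mk4 1 1 2 3));
  ((mk4 (-2) (-1) 9 4), (mk4 0 (-1) 1 0), (mk4 (-1) (-1) 2 1));
  ((mk4 (-2) (-1) 11 5), (mk4 0 (-1) 1 0), (mk4 1 0 2 1));
  ((mk4 (-2) (-1) 13 6), (mk4 0 (-1) 1 0), (mk4 3 1 2 1));
  ((mk4 (-2) (-1) 15 7), (mk4 0 (-1) 1 0), (mk4 5 2 2 1));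
  ((mk4 (-2) (-1) 17 8), (mk4 0 (-1) 1 0), (mk4 7 3 2 1));
  ((mk4 (-2) (-1) 19 9), (mk4 0 (-1) 1 0), (mk4 9 4 2 1));
  ((mk4 (-2) 1 9 (-5)), (mk4 0 (-1) 1 0), (mk4 (-1) 0 2 (-1)));
  ((mk4 (-2) 1 11 (-6)), (mk4 0 (-1) 1 0), (mk4 1 (-1) 2 (-1)));
  ((mk4 (-2) 1 13 (-7)), (mk4 0 (-1) 1 0), (mk4 3 (-2) 2 (-1)));
  ((mk4 (-2) 1 15 (-8)), (mk4 0 (-1) 1 0), (mk4 5 (-3) 2 (-1)));
  ((mk4 (-2) 3 7 (-11)), (mk4 0 (-1) 1 0), (mk4 (-3) 4 2 (-3)));
  ((mk4 (-2) 3 9 (-14)), (mk4 0 (-1) 1 0), (mk4 (-1) 1 2 (-3)));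
  ((mk4 (-2) 5 5 (-13)), (mk4 2 1 (-5) (-2)), (mk4 (-1) 3 0 (-1)));
  ((mk4 (-2) 5 7 (-18)), (mk4 2 1 (-7) (-3)), (mk4 (-1) 3 0 (-1)));
  ((mk4 (-2) 7 (-3) 10), (mk4 1 (-1) 1 0), (mk4 2 (-5) (-1) 3));
  ((mk4 (-2) 7 3 (-11)), (mk4 2 1 (-3) (-1)), (mk4 (-1) 4 0 (-1)));
  ((mk4 (-2) 7 5 (-18)), (mk4 2 1 (-5) (-2)), (mk4 (-1) 4 0 (-1)));
  ((mk4 (-2) 9 (-3) 13), (mk4 2 (-1) 3 (-1)), (mk4 (-1) 4 0 (-1)));
  ((mk4 (-2) 9 (-1) 4), (mk4 2 (-1) 1 0), (mk4 (-1) 4 0 (-1)));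
  ((mk4 (-2) 9 1 (-5)), (mk4 2 1 (-1) 0), (mk4 (-1) 5 0 (-1)));
  ((mk4 (-2) 9 3 (-14)), (mk4 2 1 (-3) (-1)), (mk4 (-1) 5 0 (-1)));
  ((mk4 (-2) 9 5 (-23)), (mk4 2 1 (-5) (-2)), (mk4 (-1) 5 0 (-1)));
  ((mk4 (-2) 11 (-1) 5), (mk4 2 (-1) 1 0), (mk4 (-1) 5 0 (-1)));
  ((mk4 (-2) 11 1 (-6)), (mk4 2 1 (-1) 0), (mk4 (-1) 6 0 (-1)));
  ((mk4 (-2) 11 3 (-17)), (mk4 2 1 (-3) (-1)), (mk4 (-1) 6 0 (-1)));
  ((mk4 (-2) 11 5 (-28)), (mk4 2 1 (-5) (-2)), (mk4 (-1) 6 0 (-1)));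
  ((mk4 (-2) 13 (-1) 6), (mk4 2 (-1) 1 0), (mk4 (-1) 6 0 (-1)));
  ((mk4 (-2) 13 1 (-7)), (mk4 2 1 (-1) 0), (mk4 (-1) 7 0 (-1)));
  ((mk4 (-2) 13 3 (-20)), (mk4 2 1 (-3) (-1)), (mk4 (-1) 7 0 (-1)));
  ((mk4 (-2) 13 5 (-33)), (mk4 2 1 (-5) (-2)), (mk4 (-1) 7 0 (-1)));
  ((mk4 (-2) 15 (-1) 7), (mk4 2 (-1) 1 0), (mk4 (-1) 7 0 (-1)));
  ((mk4 (-2) 15 1 (-8)), (mk4 2 1 (-1) 0), (mk4 (-1) 8 0 (-1)));
  ((mk4 (-2) 15 3 (-23)), (mk4 2 1 (-3) (-1)), (mk4 (-1) 8 0 (-1)));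
  ((mk4 (-2) 17 (-1) 8), (mk4 2 (-1) 1 0), (mk4 (-1) 8 0 (-1)));
  ((mk4 (-2) 17 1 (-9)), (mk4 2 1 (-1) 0), (mk4 (-1) 9 0 (-1)));
  ((mk4 (-2) 19 (-1) 9), (mk4 2 (-1) 1 0), (mk4 (-1) 9 0 (-1)));
  ((mk4 (-2) 19 1 (-10)), (mk4 2 1 (-1) 0), (mk4 (-1) 10 0 (-1)));
  ((mk4 (-1) (-9) 0 (-1)), (mk4 1 0 0 1), (mk4 (-1) (-4) 0 (-1)));
  ((mk4 (-1) (-9) 1 8), (mk4 1 1 (-1) 0), (mk4 (-1) (-3) 0 (-1)));
  ((mk4 (-1) (-3) 4 11), (mk4 0 (-1) 1 0), (mk4 (-1) (-4) 1 3));
  ((mk4 (-1) (-3) 5 14), (mk4 0 (-1) 1 0), (mk4 0 (-1) 1 3));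
  ((mk4 (-1) (-2) 5 9), (mk4 0 (-1) 1 0), (mk4 0 (-1) 1 2));
  ((mk4 (-1) (-2) 6 11), (mk4 0 (-1) 1 0), (mk4 1 1 1 2));
  ((mk4 (-1) (-1) 9 8), (mk4 0 (-1) 1 0), (mk4 4 3 1 1));
  ((mk4 (-1) (-1) 10 9), (mk4 0 (-1) 1 0), (mk4 5 4 1 1));
  ((mk4 (-1) 3 3 (-10)), (mk4 1 0 (-3) 1), (mk4 (-1) 3 0 (-1)));
  ((mk4 (-1) 4 2 (-9)), (mk4 1 1 (-2) (-1)), (mk4 (-1) 5 0 (-1)));
  ((mk4 (-1) 4 3 (-13)), (mk4 1 0 (-3) 1), (mk4 (-1) 4 0 (-1)));
  ((mk4 (-1) 5 (-2) 9), (mk4 1 0 2 1), (mk4 (-1) 5 0 (-1)));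
  ((mk4 (-1) 5 2 (-11)), (mk4 1 1 (-2) (-1)), (mk4 (-1) 6 0 (-1)));
  ((mk4 (-1) 5 3 (-16)), (mk4 1 0 (-3) 1), (mk4 (-1) 5 0 (-1)));
  ((mk4 (-1) 6 2 (-13)), (mk4 1 1 (-2) (-1)), (mk4 (-1) 7 0 (-1)));
  ((mk4 (-1) 6 3 (-19)), (mk4 1 0 (-3) 1), (mk4 (-1) 6 0 (-1)));
  ((mk4 (-1) 7 2 (-15)), (mk4 1 1 (-2) (-1)), (mk4 (-1) 8 0 (-1)));
  ((mk4 (-1) 9 (-1) 8), (mk4 1 (-1) 1 0), (mk4 (-1) 8 0 (-1)));
  ((mk4 (-1) 9 0 (-1)), (mk4 1 0 0 1), (mk4 (-1) 9 0 (-1)));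
  ((mk4 (-1) 10 (-1) 9), (mk4 1 (-1) 1 0), (mk4 (-1) 9 0 (-1)));
  ((mk4 (-1) 10 0 (-1)), (mk4 1 0 0 1), (mk4 (-1) 10 0 (-1)));
  ((mk4 0 (-1) 1 9), (mk4 0 (-1) 1 0), (mk4 1 4 0 1));
  ((mk4 0 1 (-1) (-9)), (mk4 0 (-1) 1 0), (mk4 (-1) (-4) 0 (-1)));
  ((mk4 0 1 (-1) 9), (mk4 0 (-1) 1 0), (mk4 (-1) 9 0 (-1)));
  ((mk4 1 (-9) 0 1), (mk4 1 0 0 1), (mk4 1 (-9) 0 1));
  ((mk4 1 (-9) 1 (-8)), (mk4 1 0 0 1), (mk4 (-4) 31 1 (-8)));
  ((mk4 1 (-8) (-2) 17), (mk4 1 1 (-1) 0), (mk4 2 (-17) (-1) 9));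
  ((mk4 1 (-8) (-1) 9), (mk4 1 1 (-1) 0), (mk4 1 (-9) 0 1));
  ((mk4 1 (-7) (-2) 15), (mk4 1 1 (-1) 0), (mk4 2 (-15) (-1) 8));
  ((mk4 1 (-6) (-2) 13), (mk4 1 1 (-1) 0), (mk4 2 (-13) (-1) 7));
  ((mk4 1 (-5) (-2) 11), (mk4 1 1 (-1) 0), (mk4 2 (-11) (-1) 6));
  ((mk4 1 (-4) (-2) 9), (mk4 1 1 (-1) 0), (mk4 2 (-9) (-1) 5));
  ((mk4 1 (-3) (-3) 10), (mk4 1 0 (-3) 1), (mk4 1 (-3) 0 1));
  ((mk4 1 (-2) (-5) 11), (mk4 1 0 (-6) 1), (mk4 (-4) 3 1 (-1)));
  ((mk4 1 (-2) (-4) 9), (mk4 1 0 (-5) 1), (mk4 (-4) 3 1 (-1)));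
  ((mk4 1 (-1) (-8) 9), (mk4 1 0 (-9) 1), (mk4 (-4) (-1) 1 0));
  ((mk4 1 0 (-9) 1), (mk4 0 (-1) 1 0), (mk4 (-4) 1 (-1) 0));
  ((mk4 1 1 (-9) (-8)), (mk4 1 0 (-8) 1), (mk4 1 1 (-1) 0));
  ((mk4 1 2 (-5) (-9)), (mk4 1 0 (-4) 1), (mk4 1 2 (-1) (-1)));
  ((mk4 1 3 (-5) (-14)), (mk4 1 0 (-5) 1), (mk4 1 (-2) 0 1));
  ((mk4 1 3 (-4) (-11)), (mk4 1 0 (-4) 1), (mk4 1 (-2) 0 1));
  ((mk4 1 5 (-2) (-9)), (mk4 1 1 (-2) (-1)), (mk4 1 (-1) 0 1));
  ((mk4 1 6 (-2) (-11)), (mk4 1 1 (-2) (-1)), (mk4 1 0 0 1));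
  ((mk4 1 7 (-2) (-13)), (mk4 1 1 (-2) (-1)), (mk4 1 1 0 1));
  ((mk4 1 8 (-2) (-15)), (mk4 1 1 (-2) (-1)), (mk4 1 2 0 1));
  ((mk4 1 9 (-2) (-17)), (mk4 1 1 (-2) (-1)), (mk4 1 3 0 1));
  ((mk4 1 9 (-1) (-8)), (mk4 1 1 (-1) 0), (mk4 1 3 0 1));
  ((mk4 1 9 0 1), (mk4 1 0 0 1), (mk4 1 4 0 1));
  ((mk4 2 (-17) (-3) 26), (mk4 1 1 (-1) 0), (mk4 3 (-26) (-1) 9));
  ((mk4 2 (-17) (-1) 9), (mk4 1 1 (-1) 0), (mk4 (-4) 31 1 (-8)));
  ((mk4 2 (-15) (-3) 23), (mk4 1 1 (-1) 0), (mk4 3 (-23) (-1) 8));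
  ((mk4 2 (-15) (-1) 8), (mk4 1 1 (-1) 0), (mk4 (-4) 27 1 (-7)));
  ((mk4 2 (-15) 1 (-7)), (mk4 1 0 0 1), (mk4 (-3) 20 1 (-7)));
  ((mk4 2 (-13) (-3) 20), (mk4 1 1 (-1) 0), (mk4 3 (-20) (-1) 7));
  ((mk4 2 (-13) (-1) 7), (mk4 1 1 (-1) 0), (mk4 (-4) 23 1 (-6)));
  ((mk4 2 (-13) 1 (-6)), (mk4 1 0 0 1), (mk4 (-3) 17 1 (-6)));
  ((mk4 2 (-11) (-3) 17), (mk4 1 1 (-1) 0), (mk4 3 (-17) (-1) 6));
  ((mk4 2 (-11) (-1) 6), (mk4 1 1 (-1) 0), (mk4 (-4) 19 1 (-5)));
  ((mk4 2 (-11) 1 (-5)), (mk4 1 0 0 1), (mk4 (-3) 14 1 (-5)));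
  ((mk4 2 (-9) (-3) 14), (mk4 1 1 (-1) 0), (mk4 3 (-14) (-1) 5));
  ((mk4 2 (-9) (-1) 5), (mk4 2 1 (-1) 0), (mk4 1 (-5) 0 1));
  ((mk4 2 (-9) 1 (-4)), (mk4 1 0 0 1), (mk4 (-3) 11 1 (-4)));
  ((mk4 2 (-7) (-5) 18), (mk4 1 1 (-2) (-1)), (mk4 3 (-11) (-1) 4));
  ((mk4 2 (-7) (-3) 11), (mk4 2 1 (-3) (-1)), (mk4 1 (-4) 0 1));
  ((mk4 2 (-5) (-7) 18), (mk4 1 0 (-4) 1), (mk4 (-3) 5 1 (-2)));
  ((mk4 2 (-5) (-5) 13), (mk4 1 1 (-2) (-1)), (mk4 3 (-8) (-1) 3));
  ((mk4 2 (-3) (-9) 14), (mk4 1 0 (-5) 1), (mk4 (-3) 2 1 (-1)));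
  ((mk4 2 (-3) (-7) 11), (mk4 1 0 (-4) 1), (mk4 (-3) 2 1 (-1)));
  ((mk4 2 (-1) (-9) 5), (mk4 1 0 (-4) 1), (mk4 2 (-1) (-1) 1));
  ((mk4 2 1 (-9) (-4)), (mk4 1 0 (-4) 1), (mk4 2 1 (-1) 0));
  ((mk4 2 3 (-9) (-13)), (mk4 1 0 (-4) 1), (mk4 2 3 (-1) (-1)));
  ((mk4 2 3 (-7) (-10)), (mk4 1 0 (-3) 1), (mk4 2 3 (-1) (-1)));
  ((mk4 2 5 (-9) (-22)), (mk4 1 0 (-4) 1), (mk4 2 5 (-1) (-2)));
  ((mk4 2 5 (-7) (-17)), (mk4 2 1 (-7) (-3)), (mk4 1 (-3) 0 1));
  ((mk4 2 5 (-5) (-12)), (mk4 2 1 (-5) (-2)), (mk4 1 (-3) 0 1));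
  ((mk4 2 7 (-9) (-31)), (mk4 2 1 (-9) (-4)), (mk4 1 (-2) 0 1));
  ((mk4 2 7 (-7) (-24)), (mk4 2 1 (-7) (-3)), (mk4 1 (-2) 0 1));
  ((mk4 2 7 (-5) (-17)), (mk4 2 1 (-5) (-2)), (mk4 1 (-2) 0 1));
  ((mk4 2 7 (-3) (-10)), (mk4 2 1 (-3) (-1)), (mk4 1 (-2) 0 1));
  ((mk4 2 9 (-9) (-40)), (mk4 2 1 (-9) (-4)), (mk4 1 (-1) 0 1));
  ((mk4 2 9 (-7) (-31)), (mk4 2 1 (-7) (-3)), (mk4 1 (-1) 0 1));
  ((mk4 2 9 (-5) (-22)), (mk4 2 1 (-5) (-2)), (mk4 1 (-1) 0 1));
  ((mk4 2 9 (-3) (-13)), (mk4 2 1 (-3) (-1)), (mk4 1 (-1) 0 1));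
  ((mk4 2 9 (-1) (-4)), (mk4 2 1 (-1) 0), (mk4 1 (-1) 0 1));
  ((mk4 2 9 1 5), (mk4 0 (-1) 1 0), (mk4 1 5 (-2) (-9)));
  ((mk4 2 11 (-3) (-16)), (mk4 2 1 (-3) (-1)), (mk4 1 0 0 1));
  ((mk4 2 11 (-1) (-5)), (mk4 2 1 (-1) 0), (mk4 1 0 0 1));
  ((mk4 2 11 1 6), (mk4 2 (-1) 1 0), (mk4 1 1 0 1));
  ((mk4 2 13 (-3) (-19)), (mk4 2 1 (-3) (-1)), (mk4 1 1 0 1));
  ((mk4 2 13 (-1) (-6)), (mk4 2 1 (-1) 0), (mk4 1 1 0 1));
  ((mk4 2 13 1 7), (mk4 2 (-1) 1 0), (mk4 1 2 0 1));
  ((mk4 2 15 (-3) (-22)), (mk4 2 1 (-3) (-1)), (mk4 1 2 0 1));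
  ((mk4 2 15 (-1) (-7)), (mk4 2 1 (-1) 0), (mk4 1 2 0 1));
  ((mk4 2 15 1 8), (mk4 2 (-1) 1 0), (mk4 1 3 0 1));
  ((mk4 2 17 (-3) (-25)), (mk4 2 1 (-3) (-1)), (mk4 1 3 0 1));
  ((mk4 2 17 (-1) (-8)), (mk4 2 1 (-1) 0), (mk4 1 3 0 1));
  ((mk4 3 (-26) (-4) 35), (mk4 1 1 (-1) 0), (mk4 4 (-35) (-1) 9));
  ((mk4 3 (-26) (-1) 9), (mk4 1 0 0 1), (mk4 3 (-26) (-1) 9));
  ((mk4 3 (-25) (-2) 17), (mk4 1 1 (-1) 0), (mk4 (-3) 23 1 (-8)));
  ((mk4 3 (-23) (-4) 31), (mk4 1 1 (-1) 0), (mk4 4 (-31) (-1) 8));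
  ((mk4 3 (-23) (-1) 8), (mk4 1 0 0 1), (mk4 3 (-23) (-1) 8));
  ((mk4 3 (-22) (-5) 37), (mk4 1 1 (-2) (-1)), (mk4 (-3) 20 1 (-7)));
  ((mk4 3 (-22) (-2) 15), (mk4 1 1 (-1) 0), (mk4 (-3) 20 1 (-7)));
  ((mk4 3 (-20) (-4) 27), (mk4 1 1 (-1) 0), (mk4 4 (-27) (-1) 7));
  ((mk4 3 (-20) (-1) 7), (mk4 1 0 0 1), (mk4 3 (-20) (-1) 7));
  ((mk4 3 (-19) (-5) 32), (mk4 1 1 (-2) (-1)), (mk4 (-3) 17 1 (-6)));
  ((mk4 3 (-19) (-2) 13), (mk4 1 1 (-1) 0), (mk4 (-3) 17 1 (-6)));
  ((mk4 3 (-17) (-4) 23), (mk4 1 1 (-1) 0), (mk4 4 (-23) (-1) 6));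
  ((mk4 3 (-17) (-1) 6), (mk4 1 0 0 1), (mk4 3 (-17) (-1) 6));
  ((mk4 3 (-16) (-5) 27), (mk4 1 1 (-2) (-1)), (mk4 (-3) 14 1 (-5)));
  ((mk4 3 (-16) (-2) 11), (mk4 1 1 (-1) 0), (mk4 (-3) 14 1 (-5)));
  ((mk4 3 (-14) (-4) 19), (mk4 1 1 (-1) 0), (mk4 4 (-19) (-1) 5));
  ((mk4 3 (-14) (-1) 5), (mk4 1 0 0 1), (mk4 3 (-14) (-1) 5));
  ((mk4 3 (-13) (-5) 22), (mk4 1 1 (-2) (-1)), (mk4 (-3) 11 1 (-4)));
  ((mk4 3 (-13) (-2) 9), (mk4 1 1 (-1) 0), (mk4 (-3) 11 1 (-4)));
  ((mk4 3 (-11) (-7) 26), (mk4 1 1 (-2) (-1)), (mk4 4 (-15) (-1) 4));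
  ((mk4 3 (-11) (-4) 15), (mk4 3 1 (-4) (-1)), (mk4 1 (-9) 0 1));
  ((mk4 3 (-11) (-1) 4), (mk4 3 1 (-1) 0), (mk4 1 (-4) 0 1));
  ((mk4 3 (-11) 2 (-7)), (mk4 1 (-1) 1 0), (mk4 2 (-7) (-1) 4));
  ((mk4 3 (-10) (-5) 17), (mk4 1 1 (-2) (-1)), (mk4 (-3) 8 1 (-3)));
  ((mk4 3 (-10) (-2) 7), (mk4 3 2 (-2) (-1)), (mk4 1 (-4) 0 1));
  ((mk4 3 (-10) 1 (-3)), (mk4 1 0 0 1), (mk4 (-2) 5 1 (-3)));
  ((mk4 3 (-8) (-10) 27), (mk4 1 0 (-3) 1), (mk4 3 (-8) (-1) 3));
  ((mk4 3 (-8) (-7) 19), (mk4 1 1 (-2) (-1)), (mk4 4 (-11) (-1) 3));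
  ((mk4 3 (-8) (-4) 11), (mk4 3 1 (-4) (-1)), (mk4 1 (-8) 0 1));
  ((mk4 3 (-8) 5 (-13)), (mk4 0 (-1) 1 0), (mk4 5 (-13) (-3) 8));
  ((mk4 3 (-7) (-5) 12), (mk4 3 (-1) (-5) 2), (mk4 1 (-7) 0 1));
  ((mk4 3 (-5) (-13) 22), (mk4 1 0 (-4) 1), (mk4 3 (-5) (-1) 2));
  ((mk4 3 (-5) (-10) 17), (mk4 1 0 (-3) 1), (mk4 3 (-5) (-1) 2));
  ((mk4 3 (-5) (-7) 12), (mk4 1 1 (-2) (-1)), (mk4 4 (-7) (-1) 2));
  ((mk4 3 (-2) (-13) 9), (mk4 1 0 (-4) 1), (mk4 3 (-2) (-1) 1));
  ((mk4 3 (-2) (-10) 7), (mk4 1 0 (-3) 1), (mk4 3 (-2) (-1) 1));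
  ((mk4 3 (-1) (-14) 5), (mk4 1 0 (-5) 1), (mk4 (-2) (-1) 1 0));
  ((mk4 3 (-1) (-11) 4), (mk4 1 0 (-4) 1), (mk4 (-2) (-1) 1 0));
  ((mk4 3 1 (-13) (-4)), (mk4 1 0 (-4) 1), (mk4 3 1 (-1) 0));
  ((mk4 3 1 (-10) (-3)), (mk4 1 0 (-3) 1), (mk4 3 1 (-1) 0));
  ((mk4 3 2 (-14) (-9)), (mk4 1 0 (-5) 1), (mk4 (-2) (-3) 1 1));
  ((mk4 3 2 (-11) (-7)), (mk4 1 0 (-4) 1), (mk4 (-2) (-3) 1 1));
  ((mk4 3 4 (-13) (-17)), (mk4 1 0 (-4) 1), (mk4 3 4 (-1) (-1)));
  ((mk4 3 4 (-10) (-13)), (mk4 1 0 (-3) 1), (mk4 3 4 (-1) (-1)));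
  ((mk4 3 4 (-7) (-9)), (mk4 3 1 (-7) (-2)), (mk4 1 (-4) 0 1));
  ((mk4 3 7 (-13) (-30)), (mk4 1 0 (-4) 1), (mk4 3 7 (-1) (-2)));
  ((mk4 3 7 (-10) (-23)), (mk4 3 1 (-10) (-3)), (mk4 1 (-3) 0 1));
  ((mk4 3 7 (-4) (-9)), (mk4 3 1 (-4) (-1)), (mk4 1 (-3) 0 1));
  ((mk4 3 8 (-5) (-13)), (mk4 3 (-1) (-5) 2), (mk4 1 (-2) 0 1));
  ((mk4 3 10 (-4) (-13)), (mk4 3 1 (-4) (-1)), (mk4 1 (-2) 0 1));
  ((mk4 3 10 (-1) (-3)), (mk4 3 1 (-1) 0), (mk4 1 (-2) 0 1));
  ((mk4 3 10 2 7), (mk4 1 (-1) 1 0), (mk4 2 7 (-1) (-3)));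
  ((mk4 3 11 (-2) (-7)), (mk4 3 2 (-2) (-1)), (mk4 1 (-2) 0 1));
  ((mk4 3 11 1 4), (mk4 1 0 0 1), (mk4 (-2) (-9) 1 4));
  ((mk4 3 13 (-4) (-17)), (mk4 3 1 (-4) (-1)), (mk4 1 (-1) 0 1));
  ((mk4 3 13 (-1) (-4)), (mk4 3 1 (-1) 0), (mk4 1 (-1) 0 1));
  ((mk4 3 16 (-4) (-21)), (mk4 3 1 (-4) (-1)), (mk4 1 0 0 1));
  ((mk4 3 16 (-1) (-5)), (mk4 3 1 (-1) 0), (mk4 1 0 0 1));
  ((mk4 3 19 (-4) (-25)), (mk4 3 1 (-4) (-1)), (mk4 1 1 0 1));
  ((mk4 3 19 (-1) (-6)), (mk4 3 1 (-1) 0), (mk4 1 1 0 1));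
  ((mk4 3 22 (-4) (-29)), (mk4 3 1 (-4) (-1)), (mk4 1 2 0 1));
  ((mk4 3 22 (-1) (-7)), (mk4 3 1 (-1) 0), (mk4 1 2 0 1));
  ((mk4 3 25 (-4) (-33)), (mk4 3 1 (-4) (-1)), (mk4 1 3 0 1));
  ((mk4 3 25 (-1) (-8)), (mk4 3 1 (-1) 0), (mk4 1 3 0 1));
  ((mk4 4 (-35) (-1) 9), (mk4 1 0 0 1), (mk4 4 (-35) (-1) 9));
  ((mk4 4 (-33) (-3) 25), (mk4 1 1 (-1) 0), (mk4 (-2) 15 1 (-8)));
  ((mk4 4 (-31) (-5) 39), (mk4 1 1 (-1) 0), (mk4 5 (-39) (-1) 8));
  ((mk4 4 (-31) (-1) 8), (mk4 1 0 0 1), (mk4 4 (-31) (-1) 8));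
  ((mk4 4 (-29) (-3) 22), (mk4 1 1 (-1) 0), (mk4 (-2) 13 1 (-7)));
  ((mk4 4 (-27) (-5) 34), (mk4 1 1 (-1) 0), (mk4 5 (-34) (-1) 7));
  ((mk4 4 (-27) (-1) 7), (mk4 1 0 0 1), (mk4 4 (-27) (-1) 7));
  ((mk4 4 (-25) (-3) 19), (mk4 1 1 (-1) 0), (mk4 (-2) 11 1 (-6)));
  ((mk4 4 (-23) (-5) 29), (mk4 1 1 (-1) 0), (mk4 5 (-29) (-1) 6));
  ((mk4 4 (-23) (-1) 6), (mk4 1 0 0 1), (mk4 4 (-23) (-1) 6));
  ((mk4 4 (-21) (-3) 16), (mk4 1 1 (-1) 0), (mk4 (-2) 9 1 (-5)));
  ((mk4 4 (-19) (-5) 24), (mk4 1 1 (-1) 0), (mk4 5 (-24) (-1) 5));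
  ((mk4 4 (-19) (-1) 5), (mk4 1 0 0 1), (mk4 4 (-19) (-1) 5));
  ((mk4 4 (-17) (-7) 30), (mk4 1 1 (-2) (-1)), (mk4 (-2) 7 1 (-4)));
  ((mk4 4 (-17) (-3) 13), (mk4 1 1 (-1) 0), (mk4 (-2) 7 1 (-4)));
  ((mk4 4 (-15) (-9) 34), (mk4 1 1 (-2) (-1)), (mk4 5 (-19) (-1) 4));
  ((mk4 4 (-15) (-5) 19), (mk4 1 1 (-1) 0), (mk4 5 (-19) (-1) 4));
  ((mk4 4 (-15) (-1) 4), (mk4 4 1 (-1) 0), (mk4 1 (-9) 0 1));
  ((mk4 4 (-13) (-7) 23), (mk4 1 1 (-2) (-1)), (mk4 (-2) 5 1 (-3)));
  ((mk4 4 (-13) (-3) 10), (mk4 4 (-1) (-3) 1), (mk4 1 (-8) 0 1));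
  ((mk4 4 (-11) (-9) 25), (mk4 1 1 (-2) (-1)), (mk4 5 (-14) (-1) 3));
  ((mk4 4 (-11) (-5) 14), (mk4 4 1 (-5) (-1)), (mk4 1 (-8) 0 1));
  ((mk4 4 (-11) (-1) 3), (mk4 4 1 (-1) 0), (mk4 1 (-8) 0 1));
  ((mk4 4 (-11) 3 (-8)), (mk4 1 (-1) 1 0), (mk4 3 (-8) (-1) 3));
  ((mk4 4 (-9) (-7) 16), (mk4 1 1 (-2) (-1)), (mk4 (-2) 3 1 (-2)));
  ((mk4 4 (-9) (-3) 7), (mk4 4 (-1) (-3) 1), (mk4 1 (-7) 0 1));
  ((mk4 4 (-9) 1 (-2)), (mk4 1 0 0 1), (mk4 (-1) 1 1 (-2)));
  ((mk4 4 (-7) (-17) 30), (mk4 1 0 (-4) 1), (mk4 4 (-7) (-1) 2));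
  ((mk4 4 (-7) (-13) 23), (mk4 1 0 (-3) 1), (mk4 4 (-7) (-1) 2));
  ((mk4 4 (-7) (-9) 16), (mk4 1 1 (-2) (-1)), (mk4 5 (-9) (-1) 2));
  ((mk4 4 (-7) (-5) 9), (mk4 4 1 (-5) (-1)), (mk4 1 (-7) 0 1));
  ((mk4 4 (-7) 7 (-12)), (mk4 0 (-1) 1 0), (mk4 7 (-12) (-4) 7));
  ((mk4 4 (-5) (-7) 9), (mk4 1 1 (-2) (-1)), (mk4 (-2) 1 1 (-1)));
  ((mk4 4 (-3) (-17) 13), (mk4 1 0 (-4) 1), (mk4 4 (-3) (-1) 1));
  ((mk4 4 (-3) (-13) 10), (mk4 1 0 (-3) 1), (mk4 4 (-3) (-1) 1));
  ((mk4 4 (-3) (-9) 7), (mk4 1 1 (-2) (-1)), (mk4 5 (-4) (-1) 1));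
  ((mk4 4 1 (-17) (-4)), (mk4 1 0 (-4) 1), (mk4 4 1 (-1) 0));
  ((mk4 4 1 (-13) (-3)), (mk4 1 0 (-3) 1), (mk4 4 1 (-1) 0));
  ((mk4 4 1 (-9) (-2)), (mk4 1 1 (-2) (-1)), (mk4 5 1 (-1) 0));
  ((mk4 4 1 11 3), (mk4 0 (-1) 1 0), (mk4 11 3 (-4) (-1)));
  ((mk4 4 5 (-17) (-21)), (mk4 1 0 (-4) 1), (mk4 4 5 (-1) (-1)));
  ((mk4 4 5 (-13) (-16)), (mk4 1 0 (-3) 1), (mk4 4 5 (-1) (-1)));
  ((mk4 4 5 (-9) (-11)), (mk4 4 1 (-9) (-2)), (mk4 1 (-4) 0 1));
  ((mk4 4 9 (-17) (-38)), (mk4 1 0 (-4) 1), (mk4 4 9 (-1) (-2)));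
  ((mk4 4 9 (-13) (-29)), (mk4 1 0 (-3) 1), (mk4 4 9 (-1) (-2)));
  ((mk4 4 9 (-9) (-20)), (mk4 4 1 (-9) (-2)), (mk4 1 (-3) 0 1));
  ((mk4 4 9 (-5) (-11)), (mk4 4 1 (-5) (-1)), (mk4 1 (-3) 0 1));
  ((mk4 4 9 (-1) (-2)), (mk4 4 1 (-1) 0), (mk4 1 (-3) 0 1));
  ((mk4 4 9 3 7), (mk4 0 (-1) 1 0), (mk4 3 7 (-4) (-9)));
  ((mk4 4 11 (-3) (-8)), (mk4 4 (-1) (-3) 1), (mk4 1 (-2) 0 1));
  ((mk4 4 11 1 3), (mk4 1 0 0 1), (mk4 (-1) (-4) 1 3));
  ((mk4 5 (-39) (-1) 8), (mk4 1 0 0 1), (mk4 5 (-39) (-1) 8));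
  ((mk4 5 (-37) (-2) 15), (mk4 2 1 (-1) 0), (mk4 (-3) 20 1 (-7)));
  ((mk4 5 (-36) (-4) 29), (mk4 1 1 (-1) 0), (mk4 (-1) 6 1 (-7)));
  ((mk4 5 (-34) (-1) 7), (mk4 1 0 0 1), (mk4 5 (-34) (-1) 7));
  ((mk4 5 (-32) (-2) 13), (mk4 2 1 (-1) 0), (mk4 (-3) 17 1 (-6)));
  ((mk4 5 (-31) (-4) 25), (mk4 1 1 (-1) 0), (mk4 (-1) 5 1 (-6)));
  ((mk4 5 (-29) (-1) 6), (mk4 1 0 0 1), (mk4 5 (-29) (-1) 6));
  ((mk4 5 (-27) (-2) 11), (mk4 2 1 (-1) 0), (mk4 (-3) 14 1 (-5)));
  ((mk4 5 (-26) (-4) 21), (mk4 1 1 (-1) 0), (mk4 (-1) 4 1 (-5)));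
  ((mk4 5 (-24) (-1) 5), (mk4 1 0 0 1), (mk4 5 (-24) (-1) 5));
  ((mk4 5 (-22) (-2) 9), (mk4 2 1 (-1) 0), (mk4 (-3) 11 1 (-4)));
  ((mk4 5 (-21) (-9) 38), (mk4 1 1 (-2) (-1)), (mk4 (-1) 3 1 (-4)));
  ((mk4 5 (-21) (-4) 17), (mk4 1 1 (-1) 0), (mk4 (-1) 3 1 (-4)));
  ((mk4 5 (-19) (-6) 23), (mk4 1 1 (-1) 0), (mk4 6 (-23) (-1) 4));
  ((mk4 5 (-19) (-1) 4), (mk4 1 0 0 1), (mk4 5 (-19) (-1) 4));
  ((mk4 5 (-18) (-3) 11), (mk4 2 1 (-1) 0), (mk4 3 (-11) (-1) 4));
  ((mk4 5 (-17) (-7) 24), (mk4 1 1 (-1) 0), (mk4 7 (-24) (-2) 7));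
  ((mk4 5 (-17) (-2) 7), (mk4 2 1 (-1) 0), (mk4 (-3) 8 1 (-3)));
  ((mk4 5 (-16) (-9) 29), (mk4 1 1 (-2) (-1)), (mk4 (-1) 2 1 (-3)));
  ((mk4 5 (-16) (-4) 13), (mk4 1 1 (-1) 0), (mk4 (-1) 2 1 (-3)));
  ((mk4 5 (-14) (-6) 17), (mk4 1 1 (-1) 0), (mk4 6 (-17) (-1) 3));
  ((mk4 5 (-14) (-1) 3), (mk4 5 1 (-1) 0), (mk4 1 (-8) 0 1));
  ((mk4 5 (-13) (-3) 8), (mk4 2 1 (-1) 0), (mk4 3 (-8) (-1) 3));
  ((mk4 5 (-13) 2 (-5)), (mk4 1 0 0 1), (mk4 (-5) 12 2 (-5)));
  ((mk4 5 (-12) (-7) 17), (mk4 1 1 (-1) 0), (mk4 7 (-17) (-2) 5));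
  ((mk4 5 (-12) (-2) 5), (mk4 5 3 (-2) (-1)), (mk4 1 (-8) 0 1));
  ((mk4 5 (-12) 3 (-7)), (mk4 2 (-1) 1 0), (mk4 (-2) 3 1 (-2)));
  ((mk4 5 (-11) (-9) 20), (mk4 1 1 (-2) (-1)), (mk4 (-1) 1 1 (-2)));
  ((mk4 5 (-11) (-4) 9), (mk4 5 (-1) (-4) 1), (mk4 1 (-7) 0 1));
  ((mk4 5 (-9) (-21) 38), (mk4 1 0 (-4) 1), (mk4 5 (-9) (-1) 2));
  ((mk4 5 (-9) (-16) 29), (mk4 1 0 (-3) 1), (mk4 5 (-9) (-1) 2));
  ((mk4 5 (-9) (-11) 20), (mk4 1 1 (-2) (-1)), (mk4 6 (-11) (-1) 2));
  ((mk4 5 (-9) (-6) 11), (mk4 1 1 (-1) 0), (mk4 6 (-11) (-1) 2));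
  ((mk4 5 (-9) (-1) 2), (mk4 5 1 (-1) 0), (mk4 1 (-7) 0 1));
  ((mk4 5 (-9) 4 (-7)), (mk4 0 (-1) 1 0), (mk4 4 (-7) (-5) 9));
  ((mk4 5 (-8) 7 (-11)), (mk4 1 (-1) 1 0), (mk4 (-3) 4 2 (-3)));
  ((mk4 5 (-7) (-7) 10), (mk4 2 1 (-3) (-1)), (mk4 (-3) 2 1 (-1)));
  ((mk4 5 (-6) (-9) 11), (mk4 1 1 (-2) (-1)), (mk4 (-1) 0 1 (-1)));
  ((mk4 5 (-4) (-21) 17), (mk4 1 0 (-4) 1), (mk4 5 (-4) (-1) 1));
  ((mk4 5 (-4) (-16) 13), (mk4 1 0 (-3) 1), (mk4 5 (-4) (-1) 1));
  ((mk4 5 (-4) (-11) 9), (mk4 1 1 (-2) (-1)), (mk4 6 (-5) (-1) 1));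
  ((mk4 5 (-2) (-22) 9), (mk4 2 1 (-9) (-4)), (mk4 (-3) (-1) 1 0));
  ((mk4 5 (-2) (-17) 7), (mk4 2 1 (-7) (-3)), (mk4 (-3) (-1) 1 0));
  ((mk4 5 (-2) (-12) 5), (mk4 2 1 (-5) (-2)), (mk4 (-3) (-1) 1 0));
  ((mk4 5 (-1) (-9) 2), (mk4 1 1 (-2) (-1)), (mk4 (-1) (-1) 1 0));
  ((mk4 5 1 (-21) (-4)), (mk4 1 0 (-4) 1), (mk4 5 1 (-1) 0));
  ((mk4 5 1 (-16) (-3)), (mk4 1 0 (-3) 1), (mk4 5 1 (-1) 0));
  ((mk4 5 1 (-11) (-2)), (mk4 1 1 (-2) (-1)), (mk4 6 1 (-1) 0));
  ((mk4 5 2 (-18) (-7)), (mk4 2 1 (-7) (-3)), (mk4 3 1 (-1) 0));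
  ((mk4 5 2 (-13) (-5)), (mk4 2 1 (-5) (-2)), (mk4 3 1 (-1) 0));
  ((mk4 5 3 (-22) (-13)), (mk4 1 0 (-4) 1), (mk4 5 3 (-2) (-1)));
  ((mk4 5 3 (-17) (-10)), (mk4 1 0 (-3) 1), (mk4 5 3 (-2) (-1)));
  ((mk4 5 3 (-12) (-7)), (mk4 1 1 (-2) (-1)), (mk4 7 4 (-2) (-1)));
  ((mk4 5 4 (-9) (-7)), (mk4 5 (-1) (-9) 2), (mk4 1 (-4) 0 1));
  ((mk4 5 6 (-21) (-25)), (mk4 1 0 (-4) 1), (mk4 5 6 (-1) (-1)));
  ((mk4 5 6 (-16) (-19)), (mk4 1 0 (-3) 1), (mk4 5 6 (-1) (-1)));
  ((mk4 5 6 (-11) (-13)), (mk4 1 1 (-2) (-1)), (mk4 6 7 (-1) (-1)));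
  ((mk4 5 7 (-8) (-11)), (mk4 2 1 (-3) (-1)), (mk4 3 4 (-1) (-1)));
  ((mk4 5 8 (-7) (-11)), (mk4 5 (-2) (-7) 3), (mk4 1 (-3) 0 1));
  ((mk4 5 9 (-4) (-7)), (mk4 5 (-1) (-4) 1), (mk4 1 (-3) 0 1));
  ((mk4 5 9 1 2), (mk4 1 0 0 1), (mk4 0 (-1) 1 2));
  ((mk4 5 12 (-3) (-7)), (mk4 5 2 (-3) (-1)), (mk4 1 (-3) 0 1));
  ((mk4 5 12 2 5), (mk4 2 (-1) 1 0), (mk4 2 5 (-1) (-2)));
  ((mk4 5 13 (-2) (-5)), (mk4 5 3 (-2) (-1)), (mk4 1 (-3) 0 1));
  ((mk4 5 13 3 8), (mk4 5 (-2) 3 (-1)), (mk4 1 (-2) 0 1));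
  ((mk4 6 (-25) (-5) 21), (mk4 1 1 (-1) 0), (mk4 0 (-1) 1 (-4)));
  ((mk4 6 (-23) (-7) 27), (mk4 1 1 (-1) 0), (mk4 7 (-27) (-1) 4));
  ((mk4 6 (-23) (-1) 4), (mk4 1 0 0 1), (mk4 6 (-23) (-1) 4));
  ((mk4 6 (-19) (-5) 16), (mk4 1 1 (-1) 0), (mk4 0 (-1) 1 (-3)));
  ((mk4 6 (-17) (-7) 20), (mk4 1 1 (-1) 0), (mk4 7 (-20) (-1) 3));
  ((mk4 6 (-17) (-1) 3), (mk4 1 0 0 1), (mk4 6 (-17) (-1) 3));
  ((mk4 6 (-13) (-5) 11), (mk4 1 1 (-1) 0), (mk4 0 (-1) 1 (-2)));
  ((mk4 6 (-11) (-7) 13), (mk4 1 1 (-1) 0), (mk4 7 (-13) (-1) 2));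
  ((mk4 6 (-11) (-1) 2), (mk4 1 0 0 1), (mk4 6 (-11) (-1) 2));
  ((mk4 6 (-7) (-11) 13), (mk4 1 1 (-2) (-1)), (mk4 0 (-1) 1 (-1)));
  ((mk4 6 (-5) (-25) 21), (mk4 1 0 (-4) 1), (mk4 6 (-5) (-1) 1));
  ((mk4 6 (-5) (-19) 16), (mk4 1 0 (-3) 1), (mk4 6 (-5) (-1) 1));
  ((mk4 6 (-5) (-13) 11), (mk4 1 1 (-2) (-1)), (mk4 7 (-6) (-1) 1));
  ((mk4 6 (-1) (-11) 2), (mk4 1 1 (-2) (-1)), (mk4 0 (-1) 1 0));
  ((mk4 6 1 (-25) (-4)), (mk4 1 0 (-4) 1), (mk4 6 1 (-1) 0));
  ((mk4 6 1 (-19) (-3)), (mk4 1 0 (-3) 1), (mk4 6 1 (-1) 0));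
  ((mk4 6 1 (-13) (-2)), (mk4 1 1 (-2) (-1)), (mk4 7 1 (-1) 0));
  ((mk4 6 5 (-11) (-9)), (mk4 1 1 (-2) (-1)), (mk4 0 (-1) 1 1));
  ((mk4 6 7 (-25) (-29)), (mk4 1 0 (-4) 1), (mk4 6 7 (-1) (-1)));
  ((mk4 6 7 (-19) (-22)), (mk4 1 0 (-3) 1), (mk4 6 7 (-1) (-1)));
  ((mk4 6 7 (-13) (-15)), (mk4 1 1 (-2) (-1)), (mk4 7 8 (-1) (-1)));
  ((mk4 7 (-31) (-2) 9), (mk4 1 0 0 1), (mk4 7 (-31) (-2) 9));
  ((mk4 7 (-30) (-3) 13), (mk4 2 1 (-1) 0), (mk4 (-2) 7 1 (-4)));
  ((mk4 7 (-29) (-6) 25), (mk4 1 1 (-1) 0), (mk4 1 (-5) 1 (-4)));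
  ((mk4 7 (-27) (-8) 31), (mk4 1 1 (-1) 0), (mk4 8 (-31) (-1) 4));
  ((mk4 7 (-27) (-1) 4), (mk4 1 0 0 1), (mk4 7 (-27) (-1) 4));
  ((mk4 7 (-26) (-4) 15), (mk4 2 1 (-1) 0), (mk4 4 (-15) (-1) 4));
  ((mk4 7 (-25) (-5) 18), (mk4 1 1 (-1) 0), (mk4 (-5) 17 2 (-7)));
  ((mk4 7 (-24) (-2) 7), (mk4 1 0 0 1), (mk4 7 (-24) (-2) 7));
  ((mk4 7 (-23) (-3) 10), (mk4 2 1 (-1) 0), (mk4 (-2) 5 1 (-3)));
  ((mk4 7 (-22) (-6) 19), (mk4 1 1 (-1) 0), (mk4 1 (-4) 1 (-3)));
  ((mk4 7 (-20) (-8) 23), (mk4 1 1 (-1) 0), (mk4 8 (-23) (-1) 3));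
  ((mk4 7 (-20) (-1) 3), (mk4 1 0 0 1), (mk4 7 (-20) (-1) 3));
  ((mk4 7 (-19) (-4) 11), (mk4 2 1 (-1) 0), (mk4 4 (-11) (-1) 3));
  ((mk4 7 (-18) (-5) 13), (mk4 1 1 (-1) 0), (mk4 (-5) 12 2 (-5)));
  ((mk4 7 (-17) (-2) 5), (mk4 1 0 0 1), (mk4 7 (-17) (-2) 5));
  ((mk4 7 (-16) (-3) 7), (mk4 2 1 (-1) 0), (mk4 (-2) 3 1 (-2)));
  ((mk4 7 (-15) (-6) 13), (mk4 1 1 (-1) 0), (mk4 1 (-3) 1 (-2)));
  ((mk4 7 (-13) (-8) 15), (mk4 1 1 (-1) 0), (mk4 8 (-15) (-1) 2));
  ((mk4 7 (-13) (-1) 2), (mk4 1 0 0 1), (mk4 7 (-13) (-1) 2));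
  ((mk4 7 (-12) (-4) 7), (mk4 2 1 (-1) 0), (mk4 4 (-7) (-1) 2));
  ((mk4 7 (-12) 3 (-5)), (mk4 2 (-1) 1 0), (mk4 3 (-5) (-1) 2));
  ((mk4 7 (-12) 10 (-17)), (mk4 2 (-1) 3 (-1)), (mk4 3 (-5) (-1) 2));
  ((mk4 7 (-11) (-5) 8), (mk4 1 1 (-1) 0), (mk4 (-5) 7 2 (-3)));
  ((mk4 7 (-11) 2 (-3)), (mk4 1 0 0 1), (mk4 (-3) 4 2 (-3)));
  ((mk4 7 (-10) (-9) 13), (mk4 3 1 (-4) (-1)), (mk4 (-3) 2 1 (-1)));
  ((mk4 7 (-10) (-2) 3), (mk4 3 1 (-1) 0), (mk4 (-3) 2 1 (-1)));
  ((mk4 7 (-10) 5 (-7)), (mk4 1 (-1) 1 0), (mk4 5 (-7) (-2) 3));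
  ((mk4 7 (-9) (-10) 13), (mk4 2 1 (-3) (-1)), (mk4 (-2) 1 1 (-1)));
  ((mk4 7 (-9) (-3) 4), (mk4 2 1 (-1) 0), (mk4 (-2) 1 1 (-1)));
  ((mk4 7 (-9) 4 (-5)), (mk4 2 (-1) 1 0), (mk4 (-1) 0 1 (-1)));
  ((mk4 7 (-8) (-13) 15), (mk4 1 1 (-2) (-1)), (mk4 1 (-2) 1 (-1)));
  ((mk4 7 (-6) (-29) 25), (mk4 1 0 (-4) 1), (mk4 7 (-6) (-1) 1));
  ((mk4 7 (-6) (-22) 19), (mk4 1 0 (-3) 1), (mk4 7 (-6) (-1) 1));
  ((mk4 7 (-6) (-15) 13), (mk4 1 1 (-2) (-1)), (mk4 8 (-7) (-1) 1));
  ((mk4 7 (-5) (-11) 8), (mk4 2 1 (-3) (-1)), (mk4 4 (-3) (-1) 1));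
  ((mk4 7 (-3) (-30) 13), (mk4 1 0 (-4) 1), (mk4 7 (-3) (-2) 1));
  ((mk4 7 (-3) (-23) 10), (mk4 1 0 (-3) 1), (mk4 7 (-3) (-2) 1));
  ((mk4 7 (-3) (-16) 7), (mk4 1 1 (-2) (-1)), (mk4 9 (-4) (-2) 1));
  ((mk4 7 (-3) (-9) 4), (mk4 3 1 (-4) (-1)), (mk4 (-3) (-1) 1 0));
  ((mk4 7 (-2) (-31) 9), (mk4 2 1 (-9) (-4)), (mk4 (-2) (-1) 1 0));
  ((mk4 7 (-2) (-24) 7), (mk4 2 1 (-7) (-3)), (mk4 (-2) (-1) 1 0));
  ((mk4 7 (-2) (-17) 5), (mk4 2 1 (-5) (-2)), (mk4 (-2) (-1) 1 0));
  ((mk4 7 (-2) (-10) 3), (mk4 2 1 (-3) (-1)), (mk4 (-2) (-1) 1 0));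
  ((mk4 7 (-1) (-13) 2), (mk4 1 1 (-2) (-1)), (mk4 1 (-1) 1 0));
  ((mk4 7 1 (-29) (-4)), (mk4 1 0 (-4) 1), (mk4 7 1 (-1) 0));
  ((mk4 7 1 (-22) (-3)), (mk4 1 0 (-3) 1), (mk4 7 1 (-1) 0));
  ((mk4 7 1 (-15) (-2)), (mk4 1 1 (-2) (-1)), (mk4 8 1 (-1) 0));
  ((mk4 7 2 (-25) (-7)), (mk4 2 1 (-7) (-3)), (mk4 4 1 (-1) 0));
  ((mk4 7 2 (-18) (-5)), (mk4 2 1 (-5) (-2)), (mk4 4 1 (-1) 0));
  ((mk4 7 2 (-11) (-3)), (mk4 2 1 (-3) (-1)), (mk4 4 1 (-1) 0));
  ((mk4 7 2 10 3), (mk4 0 (-1) 1 0), (mk4 10 3 (-7) (-2)));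
  ((mk4 7 2 17 5), (mk4 0 (-1) 1 0), (mk4 17 5 (-7) (-2)));
  ((mk4 7 4 (-30) (-17)), (mk4 1 0 (-4) 1), (mk4 7 4 (-2) (-1)));
  ((mk4 7 4 (-23) (-13)), (mk4 1 0 (-3) 1), (mk4 7 4 (-2) (-1)));
  ((mk4 7 4 (-16) (-9)), (mk4 1 1 (-2) (-1)), (mk4 9 5 (-2) (-1)));
  ((mk4 7 4 (-9) (-5)), (mk4 1 1 (-1) 0), (mk4 9 5 (-2) (-1)));
  ((mk4 7 4 12 7), (mk4 0 (-1) 1 0), (mk4 12 7 (-7) (-4)));
  ((mk4 7 5 (-31) (-22)), (mk4 2 1 (-9) (-4)), (mk4 (-2) (-3) 1 1));
  ((mk4 7 5 (-24) (-17)), (mk4 2 1 (-7) (-3)), (mk4 (-2) (-3) 1 1));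
  ((mk4 7 5 (-17) (-12)), (mk4 2 1 (-5) (-2)), (mk4 (-2) (-3) 1 1));
  ((mk4 7 5 (-10) (-7)), (mk4 2 1 (-3) (-1)), (mk4 (-2) (-3) 1 1));
  ((mk4 7 6 (-13) (-11)), (mk4 1 1 (-2) (-1)), (mk4 1 0 1 1));
  ((mk4 7 8 (-29) (-33)), (mk4 1 0 (-4) 1), (mk4 7 8 (-1) (-1)));
  ((mk4 7 8 (-22) (-25)), (mk4 1 0 (-3) 1), (mk4 7 8 (-1) (-1)));
  ((mk4 7 8 (-15) (-17)), (mk4 1 1 (-2) (-1)), (mk4 8 9 (-1) (-1)));
  ((mk4 7 9 (-11) (-14)), (mk4 2 1 (-3) (-1)), (mk4 4 5 (-1) (-1)));
  ((mk4 7 9 (-4) (-5)), (mk4 7 2 (-4) (-1)), (mk4 1 (-4) 0 1));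
  ((mk4 7 9 3 4), (mk4 1 0 0 1), (mk4 (-8) (-11) 3 4));
  ((mk4 7 10 (-5) (-7)), (mk4 7 3 (-5) (-2)), (mk4 1 (-4) 0 1));
  ((mk4 7 10 2 3), (mk4 1 0 0 1), (mk4 (-3) (-5) 2 3));
  ((mk4 7 11 (-2) (-3)), (mk4 7 4 (-2) (-1)), (mk4 1 (-4) 0 1));
  ((mk4 7 11 5 8), (mk4 1 (-1) 1 0), (mk4 5 8 (-2) (-3)));
  ((mk4 7 12 (-3) (-5)), (mk4 7 (-2) (-3) 1), (mk4 1 (-3) 0 1));
  ((mk4 7 12 4 7), (mk4 2 (-1) 1 0), (mk4 (-1) (-3) 1 2));
  ((mk4 7 17 (-5) (-12)), (mk4 7 3 (-5) (-2)), (mk4 1 (-3) 0 1));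
  ((mk4 7 19 (-3) (-8)), (mk4 7 (-2) (-3) 1), (mk4 1 (-2) 0 1));
  ((mk4 8 (-33) (-7) 29), (mk4 1 1 (-1) 0), (mk4 2 (-9) 1 (-4)));
  ((mk4 8 (-31) (-9) 35), (mk4 1 1 (-1) 0), (mk4 9 (-35) (-1) 4));
  ((mk4 8 (-31) (-1) 4), (mk4 1 0 0 1), (mk4 8 (-31) (-1) 4));
  ((mk4 8 (-25) (-7) 22), (mk4 1 1 (-1) 0), (mk4 2 (-7) 1 (-3)));
  ((mk4 8 (-23) (-9) 26), (mk4 1 1 (-1) 0), (mk4 9 (-26) (-1) 3));
  ((mk4 8 (-23) (-1) 3), (mk4 1 0 0 1), (mk4 8 (-23) (-1) 3));
  ((mk4 8 (-19) (-5) 12), (mk4 3 2 (-2) (-1)), (mk4 (-3) 5 1 (-2)));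
  ((mk4 8 (-17) (-7) 15), (mk4 1 1 (-1) 0), (mk4 2 (-5) 1 (-2)));
  ((mk4 8 (-15) (-9) 17), (mk4 1 1 (-1) 0), (mk4 9 (-17) (-1) 2));
  ((mk4 8 (-15) (-1) 2), (mk4 1 0 0 1), (mk4 8 (-15) (-1) 2));
  ((mk4 8 (-13) (-3) 5), (mk4 1 0 0 1), (mk4 8 (-13) (-3) 5));
  ((mk4 8 (-11) (-5) 7), (mk4 3 2 (-2) (-1)), (mk4 (-3) 2 1 (-1)));
  ((mk4 8 (-11) 3 (-4)), (mk4 1 0 0 1), (mk4 (-7) 9 3 (-4)));
  ((mk4 8 (-9) (-15) 17), (mk4 1 1 (-2) (-1)), (mk4 2 (-3) 1 (-1)));
  ((mk4 8 (-9) (-7) 8), (mk4 1 1 (-1) 0), (mk4 2 (-3) 1 (-1)));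
  ((mk4 8 (-9) 1 (-1)), (mk4 1 0 0 1), (mk4 3 (-4) 1 (-1)));
  ((mk4 8 (-7) (-33) 29), (mk4 1 0 (-4) 1), (mk4 8 (-7) (-1) 1));
  ((mk4 8 (-7) (-25) 22), (mk4 1 0 (-3) 1), (mk4 8 (-7) (-1) 1));
  ((mk4 8 (-7) (-17) 15), (mk4 1 1 (-2) (-1)), (mk4 9 (-8) (-1) 1));
  ((mk4 8 (-7) (-9) 8), (mk4 1 1 (-1) 0), (mk4 9 (-8) (-1) 1));
  ((mk4 8 (-5) (-11) 7), (mk4 1 1 (-1) 0), (mk4 11 (-7) (-3) 2));
  ((mk4 8 (-1) (-15) 2), (mk4 1 1 (-2) (-1)), (mk4 2 (-1) 1 0));
  ((mk4 8 1 (-33) (-4)), (mk4 1 0 (-4) 1), (mk4 8 1 (-1) 0));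
  ((mk4 8 1 (-25) (-3)), (mk4 1 0 (-3) 1), (mk4 8 1 (-1) 0));
  ((mk4 8 1 (-17) (-2)), (mk4 1 1 (-2) (-1)), (mk4 9 1 (-1) 0));
  ((mk4 8 1 (-9) (-1)), (mk4 1 1 (-1) 0), (mk4 9 1 (-1) 0));
  ((mk4 8 3 (-11) (-4)), (mk4 3 1 (-4) (-1)), (mk4 3 1 (-1) 0));
  ((mk4 8 3 13 5), (mk4 3 1 5 2), (mk4 3 1 (-1) 0));
  ((mk4 8 5 11 7), (mk4 1 (-1) 1 0), (mk4 (-4) (-3) 3 2));
  ((mk4 8 7 (-15) (-13)), (mk4 1 1 (-2) (-1)), (mk4 2 1 1 1));
  ((mk4 8 9 (-33) (-37)), (mk4 1 0 (-4) 1), (mk4 8 9 (-1) (-1)));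
  ((mk4 8 9 (-25) (-28)), (mk4 1 0 (-3) 1), (mk4 8 9 (-1) (-1)));
  ((mk4 8 9 (-17) (-19)), (mk4 1 1 (-2) (-1)), (mk4 9 10 (-1) (-1)));
  ((mk4 8 9 (-9) (-10)), (mk4 8 1 (-9) (-1)), (mk4 1 (-4) 0 1));
  ((mk4 8 9 (-1) (-1)), (mk4 8 1 (-1) 0), (mk4 1 (-4) 0 1));
  ((mk4 8 9 7 8), (mk4 0 (-1) 1 0), (mk4 7 8 (-8) (-9)));
  ((mk4 8 11 (-11) (-15)), (mk4 3 1 (-4) (-1)), (mk4 3 4 (-1) (-1)));
  ((mk4 8 11 (-3) (-4)), (mk4 3 1 (-1) 0), (mk4 3 4 (-1) (-1)));
  ((mk4 8 11 5 7), (mk4 3 1 2 1), (mk4 3 4 (-1) (-1)));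
  ((mk4 8 13 3 5), (mk4 1 0 0 1), (mk4 (-7) (-12) 3 5));
  ((mk4 9 (-40) (-2) 9), (mk4 1 0 0 1), (mk4 9 (-40) (-2) 9));
  ((mk4 9 (-38) (-4) 17), (mk4 2 1 (-1) 0), (mk4 (-1) 3 1 (-4)));
  ((mk4 9 (-37) (-8) 33), (mk4 1 1 (-1) 0), (mk4 3 (-13) 1 (-4)));
  ((mk4 9 (-34) (-5) 19), (mk4 2 1 (-1) 0), (mk4 5 (-19) (-1) 4));
  ((mk4 9 (-31) (-2) 7), (mk4 1 0 0 1), (mk4 9 (-31) (-2) 7));
  ((mk4 9 (-29) (-4) 13), (mk4 2 1 (-1) 0), (mk4 (-1) 2 1 (-3)));
  ((mk4 9 (-28) (-8) 25), (mk4 1 1 (-1) 0), (mk4 3 (-10) 1 (-3)));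
  ((mk4 9 (-25) (-5) 14), (mk4 2 1 (-1) 0), (mk4 5 (-14) (-1) 3));
  ((mk4 9 (-22) (-2) 5), (mk4 1 0 0 1), (mk4 9 (-22) (-2) 5));
  ((mk4 9 (-20) (-4) 9), (mk4 2 1 (-1) 0), (mk4 (-1) 1 1 (-2)));
  ((mk4 9 (-19) (-8) 17), (mk4 1 1 (-1) 0), (mk4 3 (-7) 1 (-2)));
  ((mk4 9 (-16) (-5) 9), (mk4 2 1 (-1) 0), (mk4 5 (-9) (-1) 2));
  ((mk4 9 (-13) (-2) 3), (mk4 4 1 (-1) 0), (mk4 (-3) 2 1 (-1)));
  ((mk4 9 (-11) (-13) 16), (mk4 2 1 (-3) (-1)), (mk4 (-1) 0 1 (-1)));
  ((mk4 9 (-11) (-4) 5), (mk4 2 1 (-1) 0), (mk4 (-1) 0 1 (-1)));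
  ((mk4 9 (-11) 5 (-6)), (mk4 2 (-1) 1 0), (mk4 0 (-1) 1 (-1)));
  ((mk4 9 (-10) (-8) 9), (mk4 1 1 (-1) 0), (mk4 3 (-4) 1 (-1)));
  ((mk4 9 (-8) (-37) 33), (mk4 1 0 (-4) 1), (mk4 9 (-8) (-1) 1));
  ((mk4 9 (-8) (-28) 25), (mk4 1 0 (-3) 1), (mk4 9 (-8) (-1) 1));
  ((mk4 9 (-8) (-19) 17), (mk4 1 1 (-2) (-1)), (mk4 10 (-9) (-1) 1));
  ((mk4 9 (-8) (-10) 9), (mk4 1 1 (-1) 0), (mk4 10 (-9) (-1) 1));
  ((mk4 9 (-8) (-1) 1), (mk4 1 0 0 1), (mk4 9 (-8) (-1) 1));
  ((mk4 9 (-8) 8 (-7)), (mk4 0 (-1) 1 0), (mk4 8 (-7) (-9) 8));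
  ((mk4 9 (-7) (-14) 11), (mk4 2 1 (-3) (-1)), (mk4 5 (-4) (-1) 1));
  ((mk4 9 (-7) (-5) 4), (mk4 2 1 (-1) 0), (mk4 5 (-4) (-1) 1));
  ((mk4 9 (-7) 4 (-3)), (mk4 1 0 0 1), (mk4 (-11) 8 4 (-3)));
  ((mk4 9 (-5) (-7) 4), (mk4 1 1 (-1) 0), (mk4 (-3) 1 2 (-1)));
  ((mk4 9 (-5) 2 (-1)), (mk4 1 0 0 1), (mk4 (-1) 0 2 (-1)));
  ((mk4 9 (-4) (-38) 17), (mk4 1 0 (-4) 1), (mk4 9 (-4) (-2) 1));
  ((mk4 9 (-4) (-29) 13), (mk4 1 0 (-3) 1), (mk4 9 (-4) (-2) 1));
  ((mk4 9 (-4) (-20) 9), (mk4 1 1 (-2) (-1)), (mk4 11 (-5) (-2) 1));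
  ((mk4 9 (-4) (-11) 5), (mk4 1 1 (-1) 0), (mk4 11 (-5) (-2) 1));
  ((mk4 9 (-4) (-2) 1), (mk4 4 1 (-1) 0), (mk4 (-3) (-1) 1 0));
  ((mk4 9 (-4) 7 (-3)), (mk4 0 (-1) 1 0), (mk4 7 (-3) (-9) 4));
  ((mk4 9 (-2) (-40) 9), (mk4 2 1 (-9) (-4)), (mk4 (-1) (-1) 1 0));
  ((mk4 9 (-2) (-31) 7), (mk4 2 1 (-7) (-3)), (mk4 (-1) (-1) 1 0));
  ((mk4 9 (-2) (-22) 5), (mk4 2 1 (-5) (-2)), (mk4 (-1) (-1) 1 0));
  ((mk4 9 (-2) (-13) 3), (mk4 2 1 (-3) (-1)), (mk4 (-1) (-1) 1 0));
  ((mk4 9 (-2) (-4) 1), (mk4 2 1 (-1) 0), (mk4 (-1) (-1) 1 0));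
  ((mk4 9 (-2) 5 (-1)), (mk4 0 (-1) 1 0), (mk4 5 (-1) (-9) 2));
  ((mk4 9 (-1) (-17) 2), (mk4 1 1 (-2) (-1)), (mk4 3 (-1) 1 0));
  ((mk4 9 (-1) (-8) 1), (mk4 1 1 (-1) 0), (mk4 3 (-1) 1 0));
  ((mk4 9 (-1) 1 0), (mk4 1 0 0 1), (mk4 4 (-1) 1 0));
  ((mk4 9 1 (-37) (-4)), (mk4 1 0 (-4) 1), (mk4 9 1 (-1) 0));
  ((mk4 9 1 (-28) (-3)), (mk4 1 0 (-3) 1), (mk4 9 1 (-1) 0));
  ((mk4 9 1 (-19) (-2)), (mk4 1 1 (-2) (-1)), (mk4 10 1 (-1) 0));
  ((mk4 9 1 (-10) (-1)), (mk4 1 1 (-1) 0), (mk4 10 1 (-1) 0));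
  ((mk4 9 1 (-1) 0), (mk4 1 0 0 1), (mk4 9 1 (-1) 0));
  ((mk4 9 1 8 1), (mk4 0 (-1) 1 0), (mk4 8 1 (-9) (-1)));
  ((mk4 9 2 (-14) (-3)), (mk4 2 1 (-3) (-1)), (mk4 5 1 (-1) 0));
  ((mk4 9 2 (-5) (-1)), (mk4 2 1 (-1) 0), (mk4 5 1 (-1) 0));
  ((mk4 9 2 4 1), (mk4 1 0 0 1), (mk4 (-11) (-3) 4 1));
  ((mk4 9 4 (-7) (-3)), (mk4 4 (-1) (-3) 1), (mk4 2 1 (-1) 0));
  ((mk4 9 4 2 1), (mk4 1 0 0 1), (mk4 (-1) (-1) 2 1));
  ((mk4 9 5 (-38) (-21)), (mk4 1 0 (-4) 1), (mk4 9 5 (-2) (-1)));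
  ((mk4 9 5 (-29) (-16)), (mk4 1 0 (-3) 1), (mk4 9 5 (-2) (-1)));
  ((mk4 9 5 (-20) (-11)), (mk4 1 1 (-2) (-1)), (mk4 11 6 (-2) (-1)));
  ((mk4 9 5 (-11) (-6)), (mk4 1 1 (-1) 0), (mk4 11 6 (-2) (-1)));
  ((mk4 9 5 (-2) (-1)), (mk4 9 5 (-2) (-1)), (mk4 1 (-5) 0 1));
  ((mk4 9 5 7 4), (mk4 0 (-1) 1 0), (mk4 7 4 (-9) (-5)));
  ((mk4 9 7 (-40) (-31)), (mk4 2 1 (-9) (-4)), (mk4 (-1) (-2) 1 1));
  ((mk4 9 7 (-31) (-24)), (mk4 2 1 (-7) (-3)), (mk4 (-1) (-2) 1 1));
  ((mk4 9 7 (-22) (-17)), (mk4 2 1 (-5) (-2)), (mk4 (-1) (-2) 1 1));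
  ((mk4 9 7 (-13) (-10)), (mk4 2 1 (-3) (-1)), (mk4 (-1) (-2) 1 1));
  ((mk4 9 7 (-4) (-3)), (mk4 9 (-2) (-4) 1), (mk4 1 (-4) 0 1));
  ((mk4 9 7 5 4), (mk4 0 (-1) 1 0), (mk4 5 4 (-9) (-7)));
  ((mk4 9 8 (-17) (-15)), (mk4 1 1 (-2) (-1)), (mk4 3 2 1 1));
  ((mk4 9 8 (-8) (-7)), (mk4 9 (-1) (-8) 1), (mk4 1 (-4) 0 1));
  ((mk4 9 8 1 1), (mk4 1 0 0 1), (mk4 4 3 1 1));
  ((mk4 9 11 (-14) (-17)), (mk4 2 1 (-3) (-1)), (mk4 5 6 (-1) (-1)));
  ((mk4 9 11 (-5) (-6)), (mk4 9 2 (-5) (-1)), (mk4 1 (-4) 0 1));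
  ((mk4 9 11 4 5), (mk4 2 (-1) 1 0), (mk4 4 5 (-1) (-1)));
  ((mk4 10 (-33) (-3) 10), (mk4 3 1 (-1) 0), (mk4 (-2) 5 1 (-3)));
  ((mk4 10 (-23) (-3) 7), (mk4 3 1 (-1) 0), (mk4 (-2) 3 1 (-2)));
  ((mk4 10 (-13) (-13) 17), (mk4 3 1 (-4) (-1)), (mk4 (-2) 1 1 (-1)));
  ((mk4 10 (-13) (-3) 4), (mk4 3 1 (-1) 0), (mk4 (-2) 1 1 (-1)));
  ((mk4 10 (-7) (-7) 5), (mk4 3 2 (-2) (-1)), (mk4 4 (-3) (-1) 1));
  ((mk4 10 (-7) 3 (-2)), (mk4 1 0 0 1), (mk4 (-5) 3 3 (-2)));
  ((mk4 10 (-3) (-13) 4), (mk4 3 1 (-4) (-1)), (mk4 (-2) (-1) 1 0));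
  ((mk4 10 (-3) (-3) 1), (mk4 3 1 (-1) 0), (mk4 (-2) (-1) 1 0));
  ((mk4 10 (-3) 7 (-2)), (mk4 1 (-1) 1 0), (mk4 7 (-2) (-3) 1));
  ((mk4 10 3 (-7) (-2)), (mk4 3 2 (-2) (-1)), (mk4 4 1 (-1) 0));
  ((mk4 10 3 3 1), (mk4 1 0 0 1), (mk4 (-5) (-2) 3 1));
  ((mk4 10 7 (-13) (-9)), (mk4 3 1 (-4) (-1)), (mk4 (-2) (-3) 1 1));
  ((mk4 10 7 (-3) (-2)), (mk4 3 1 (-1) 0), (mk4 (-2) (-3) 1 1));
  ((mk4 10 7 7 5), (mk4 1 (-1) 1 0), (mk4 7 5 (-3) (-2)));
  ((mk4 10 17 (-3) (-5)), (mk4 10 (-3) (-3) 1), (mk4 1 (-3) 0 1));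
  ((mk4 10 27 (-3) (-8)), (mk4 10 (-3) (-3) 1), (mk4 1 (-2) 0 1));
  ((mk4 11 (-13) (-16) 19), (mk4 2 1 (-3) (-1)), (mk4 0 (-1) 1 (-1)));
  ((mk4 11 (-13) (-5) 6), (mk4 2 1 (-1) 0), (mk4 0 (-1) 1 (-1)));
  ((mk4 11 (-13) 6 (-7)), (mk4 2 (-1) 1 0), (mk4 1 (-2) 1 (-1)));
  ((mk4 11 (-9) (-17) 14), (mk4 2 1 (-3) (-1)), (mk4 6 (-5) (-1) 1));
  ((mk4 11 (-9) (-6) 5), (mk4 2 1 (-1) 0), (mk4 6 (-5) (-1) 1));
  ((mk4 11 (-9) 5 (-4)), (mk4 2 (-1) 1 0), (mk4 5 (-4) (-1) 1));
  ((mk4 11 (-8) (-15) 11), (mk4 3 1 (-4) (-1)), (mk4 4 (-3) (-1) 1));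
  ((mk4 11 (-8) (-4) 3), (mk4 3 1 (-1) 0), (mk4 4 (-3) (-1) 1));
  ((mk4 11 (-8) 7 (-5)), (mk4 3 1 2 1), (mk4 4 (-3) (-1) 1));
  ((mk4 11 (-7) (-3) 2), (mk4 1 0 0 1), (mk4 11 (-7) (-3) 2));
  ((mk4 11 (-7) 8 (-5)), (mk4 1 (-1) 1 0), (mk4 8 (-5) (-3) 2));
  ((mk4 11 (-4) (-8) 3), (mk4 4 (-1) (-3) 1), (mk4 (-2) (-1) 1 0));
  ((mk4 11 (-4) 3 (-1)), (mk4 1 0 0 1), (mk4 (-4) 1 3 (-1)));
  ((mk4 11 (-3) (-7) 2), (mk4 3 2 (-2) (-1)), (mk4 (-2) (-1) 1 0));
  ((mk4 11 (-3) 4 (-1)), (mk4 1 0 0 1), (mk4 (-9) 2 4 (-1)));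
  ((mk4 11 (-2) (-16) 3), (mk4 2 1 (-3) (-1)), (mk4 0 (-1) 1 0));
  ((mk4 11 (-2) (-5) 1), (mk4 2 1 (-1) 0), (mk4 0 (-1) 1 0));
  ((mk4 11 (-2) 6 (-1)), (mk4 2 (-1) 1 0), (mk4 1 (-1) 1 0));
  ((mk4 11 2 (-17) (-3)), (mk4 2 1 (-3) (-1)), (mk4 6 1 (-1) 0));
  ((mk4 11 2 (-6) (-1)), (mk4 2 1 (-1) 0), (mk4 6 1 (-1) 0));
  ((mk4 11 2 5 1), (mk4 2 (-1) 1 0), (mk4 5 1 (-1) 0));
  ((mk4 11 3 (-15) (-4)), (mk4 3 1 (-4) (-1)), (mk4 4 1 (-1) 0));
  ((mk4 11 3 (-4) (-1)), (mk4 3 1 (-1) 0), (mk4 4 1 (-1) 0));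
  ((mk4 11 3 7 2), (mk4 3 1 2 1), (mk4 4 1 (-1) 0));
  ((mk4 11 4 (-3) (-1)), (mk4 4 1 (-1) 0), (mk4 3 1 (-1) 0));
  ((mk4 11 4 8 3), (mk4 1 (-1) 1 0), (mk4 8 3 (-3) (-1)));
  ((mk4 11 7 (-8) (-5)), (mk4 1 1 (-1) 0), (mk4 (-7) (-5) 3 2));
  ((mk4 11 7 3 2), (mk4 1 0 0 1), (mk4 (-4) (-3) 3 2));
  ((mk4 11 8 (-7) (-5)), (mk4 3 2 (-2) (-1)), (mk4 (-2) (-3) 1 1));
  ((mk4 11 8 4 3), (mk4 1 0 0 1), (mk4 (-9) (-7) 4 3));
  ((mk4 11 9 (-16) (-13)), (mk4 2 1 (-3) (-1)), (mk4 0 (-1) 1 1));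
  ((mk4 11 9 (-5) (-4)), (mk4 2 1 (-1) 0), (mk4 0 (-1) 1 1));
  ((mk4 11 9 6 5), (mk4 2 (-1) 1 0), (mk4 1 0 1 1));
  ((mk4 11 13 (-17) (-20)), (mk4 2 1 (-3) (-1)), (mk4 6 7 (-1) (-1)));
  ((mk4 11 13 (-6) (-7)), (mk4 2 1 (-1) 0), (mk4 6 7 (-1) (-1)));
  ((mk4 11 13 5 6), (mk4 2 (-1) 1 0), (mk4 5 6 (-1) (-1)));
  ((mk4 11 14 (-15) (-19)), (mk4 3 1 (-4) (-1)), (mk4 4 5 (-1) (-1)));
  ((mk4 11 14 (-4) (-5)), (mk4 3 1 (-1) 0), (mk4 4 5 (-1) (-1)));
  ((mk4 12 (-7) (-5) 3), (mk4 2 1 (-1) 0), (mk4 (-5) 2 2 (-1)));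
  ((mk4 12 (-7) 7 (-4)), (mk4 2 (-1) 1 0), (mk4 (-3) 1 2 (-1)));
  ((mk4 12 (-5) (-7) 3), (mk4 2 1 (-1) 0), (mk4 7 (-3) (-2) 1));
  ((mk4 12 (-5) 5 (-2)), (mk4 2 (-1) 1 0), (mk4 5 (-2) (-2) 1));
  ((mk4 12 5 (-5) (-2)), (mk4 2 1 (-1) 0), (mk4 (-5) (-3) 2 1));
  ((mk4 12 5 7 3), (mk4 2 (-1) 1 0), (mk4 (-3) (-2) 2 1));
  ((mk4 12 7 (-7) (-4)), (mk4 2 1 (-1) 0), (mk4 7 4 (-2) (-1)));
  ((mk4 12 7 5 3), (mk4 2 (-1) 1 0), (mk4 5 3 (-2) (-1)));
  ((mk4 13 (-16) (-17) 21), (mk4 3 1 (-4) (-1)), (mk4 (-1) 0 1 (-1)));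
  ((mk4 13 (-16) (-4) 5), (mk4 3 1 (-1) 0), (mk4 (-1) 0 1 (-1)));
  ((mk4 13 (-15) (-19) 22), (mk4 2 1 (-3) (-1)), (mk4 1 (-2) 1 (-1)));
  ((mk4 13 (-15) (-6) 7), (mk4 2 1 (-1) 0), (mk4 1 (-2) 1 (-1)));
  ((mk4 13 (-15) 7 (-8)), (mk4 2 (-1) 1 0), (mk4 2 (-3) 1 (-1)));
  ((mk4 13 (-11) (-20) 17), (mk4 2 1 (-3) (-1)), (mk4 7 (-6) (-1) 1));
  ((mk4 13 (-11) (-7) 6), (mk4 2 1 (-1) 0), (mk4 7 (-6) (-1) 1));
  ((mk4 13 (-11) 6 (-5)), (mk4 2 (-1) 1 0), (mk4 6 (-5) (-1) 1));
  ((mk4 13 (-8) 5 (-3)), (mk4 1 0 0 1), (mk4 (-12) 7 5 (-3)));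
  ((mk4 13 (-5) (-5) 2), (mk4 5 3 (-2) (-1)), (mk4 (-3) (-1) 1 0));
  ((mk4 13 (-5) 8 (-3)), (mk4 5 (-2) 3 (-1)), (mk4 (-2) (-1) 1 0));
  ((mk4 13 (-3) (-17) 4), (mk4 3 1 (-4) (-1)), (mk4 (-1) (-1) 1 0));
  ((mk4 13 (-3) (-4) 1), (mk4 3 1 (-1) 0), (mk4 (-1) (-1) 1 0));
  ((mk4 13 (-2) (-19) 3), (mk4 2 1 (-3) (-1)), (mk4 1 (-1) 1 0));
  ((mk4 13 (-2) (-6) 1), (mk4 2 1 (-1) 0), (mk4 1 (-1) 1 0));
  ((mk4 13 (-2) 7 (-1)), (mk4 2 (-1) 1 0), (mk4 2 (-1) 1 0));
  ((mk4 13 2 (-20) (-3)), (mk4 2 1 (-3) (-1)), (mk4 7 1 (-1) 0));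
  ((mk4 13 2 (-7) (-1)), (mk4 2 1 (-1) 0), (mk4 7 1 (-1) 0));
  ((mk4 13 2 6 1), (mk4 2 (-1) 1 0), (mk4 6 1 (-1) 0));
  ((mk4 13 5 (-8) (-3)), (mk4 5 2 (-3) (-1)), (mk4 3 1 (-1) 0));
  ((mk4 13 5 5 2), (mk4 1 0 0 1), (mk4 (-12) (-5) 5 2));
  ((mk4 13 8 (-5) (-3)), (mk4 1 0 0 1), (mk4 13 8 (-5) (-3)));
  ((mk4 13 10 (-17) (-13)), (mk4 3 1 (-4) (-1)), (mk4 (-1) (-2) 1 1));
  ((mk4 13 10 (-4) (-3)), (mk4 3 1 (-1) 0), (mk4 (-1) (-2) 1 1));
  ((mk4 13 11 (-19) (-16)), (mk4 2 1 (-3) (-1)), (mk4 1 0 1 1));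
  ((mk4 13 11 (-6) (-5)), (mk4 2 1 (-1) 0), (mk4 1 0 1 1));
  ((mk4 13 11 7 6), (mk4 2 (-1) 1 0), (mk4 2 1 1 1));
  ((mk4 13 15 (-7) (-8)), (mk4 2 1 (-1) 0), (mk4 7 8 (-1) (-1)));
  ((mk4 13 15 6 7), (mk4 2 (-1) 1 0), (mk4 6 7 (-1) (-1)));
  ((mk4 14 (-11) (-19) 15), (mk4 3 1 (-4) (-1)), (mk4 5 (-4) (-1) 1));
  ((mk4 14 (-11) (-5) 4), (mk4 3 1 (-1) 0), (mk4 5 (-4) (-1) 1));
  ((mk4 14 3 (-19) (-4)), (mk4 3 1 (-4) (-1)), (mk4 5 1 (-1) 0));
  ((mk4 14 3 (-5) (-1)), (mk4 3 1 (-1) 0), (mk4 5 1 (-1) 0));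
  ((mk4 14 17 (-19) (-23)), (mk4 3 1 (-4) (-1)), (mk4 5 6 (-1) (-1)));
  ((mk4 14 17 (-5) (-6)), (mk4 3 1 (-1) 0), (mk4 5 6 (-1) (-1)));
  ((mk4 15 (-17) (-22) 25), (mk4 2 1 (-3) (-1)), (mk4 2 (-3) 1 (-1)));
  ((mk4 15 (-17) (-7) 8), (mk4 2 1 (-1) 0), (mk4 2 (-3) 1 (-1)));
  ((mk4 15 (-13) (-8) 7), (mk4 2 1 (-1) 0), (mk4 8 (-7) (-1) 1));
  ((mk4 15 (-13) 7 (-6)), (mk4 2 (-1) 1 0), (mk4 7 (-6) (-1) 1));
  ((mk4 15 (-2) (-22) 3), (mk4 2 1 (-3) (-1)), (mk4 2 (-1) 1 0));
  ((mk4 15 (-2) (-7) 1), (mk4 2 1 (-1) 0), (mk4 2 (-1) 1 0));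
  ((mk4 15 (-2) 8 (-1)), (mk4 2 (-1) 1 0), (mk4 3 (-1) 1 0));
  ((mk4 15 2 (-8) (-1)), (mk4 2 1 (-1) 0), (mk4 8 1 (-1) 0));
  ((mk4 15 2 7 1), (mk4 2 (-1) 1 0), (mk4 7 1 (-1) 0));
  ((mk4 15 13 (-22) (-19)), (mk4 2 1 (-3) (-1)), (mk4 2 1 1 1));
  ((mk4 15 13 (-7) (-6)), (mk4 2 1 (-1) 0), (mk4 2 1 1 1));
  ((mk4 15 13 8 7), (mk4 2 (-1) 1 0), (mk4 3 2 1 1));
  ((mk4 16 (-19) (-21) 25), (mk4 3 1 (-4) (-1)), (mk4 0 (-1) 1 (-1)));
  ((mk4 16 (-19) (-5) 6), (mk4 3 1 (-1) 0), (mk4 0 (-1) 1 (-1)));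
  ((mk4 16 (-9) (-7) 4), (mk4 2 1 (-1) 0), (mk4 (-3) 1 2 (-1)));
  ((mk4 16 (-3) (-21) 4), (mk4 3 1 (-4) (-1)), (mk4 0 (-1) 1 0));
  ((mk4 16 (-3) (-5) 1), (mk4 3 1 (-1) 0), (mk4 0 (-1) 1 0));
  ((mk4 16 9 (-9) (-5)), (mk4 2 1 (-1) 0), (mk4 9 5 (-2) (-1)));
  ((mk4 16 13 (-21) (-17)), (mk4 3 1 (-4) (-1)), (mk4 0 (-1) 1 1));
  ((mk4 16 13 (-5) (-4)), (mk4 3 1 (-1) 0), (mk4 0 (-1) 1 1));
  ((mk4 17 (-14) (-23) 19), (mk4 3 1 (-4) (-1)), (mk4 6 (-5) (-1) 1));
  ((mk4 17 (-14) (-6) 5), (mk4 3 1 (-1) 0), (mk4 6 (-5) (-1) 1));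
  ((mk4 17 (-5) 7 (-2)), (mk4 5 2 2 1), (mk4 (-2) (-1) 1 0));
  ((mk4 17 (-2) (-25) 3), (mk4 2 1 (-3) (-1)), (mk4 3 (-1) 1 0));
  ((mk4 17 (-2) (-8) 1), (mk4 2 1 (-1) 0), (mk4 3 (-1) 1 0));
  ((mk4 17 3 (-23) (-4)), (mk4 3 1 (-4) (-1)), (mk4 6 1 (-1) 0));
  ((mk4 17 3 (-6) (-1)), (mk4 3 1 (-1) 0), (mk4 6 1 (-1) 0));
  ((mk4 17 7 (-5) (-2)), (mk4 1 0 0 1), (mk4 17 7 (-5) (-2)));
  ((mk4 17 15 (-25) (-22)), (mk4 2 1 (-3) (-1)), (mk4 3 2 1 1));
  ((mk4 17 15 (-8) (-7)), (mk4 2 1 (-1) 0), (mk4 3 2 1 1));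
  ((mk4 17 20 (-23) (-27)), (mk4 3 1 (-4) (-1)), (mk4 6 7 (-1) (-1)));
  ((mk4 17 20 (-6) (-7)), (mk4 3 1 (-1) 0), (mk4 6 7 (-1) (-1)));
  ((mk4 18 (-5) (-7) 2), (mk4 5 3 (-2) (-1)), (mk4 (-2) (-1) 1 0));
  ((mk4 18 5 (-11) (-3)), (mk4 5 2 (-3) (-1)), (mk4 4 1 (-1) 0));
  ((mk4 19 (-22) (-25) 29), (mk4 3 1 (-4) (-1)), (mk4 1 (-2) 1 (-1)));
  ((mk4 19 (-22) (-6) 7), (mk4 3 1 (-1) 0), (mk4 1 (-2) 1 (-1)));
  ((mk4 19 (-7) (-8) 3), (mk4 2 1 (-1) 0), (mk4 (-7) 2 3 (-1)));
  ((mk4 19 (-3) (-25) 4), (mk4 3 1 (-4) (-1)), (mk4 1 (-1) 1 0));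
  ((mk4 19 (-3) (-6) 1), (mk4 3 1 (-1) 0), (mk4 1 (-1) 1 0));
  ((mk4 19 7 (-11) (-4)), (mk4 2 1 (-1) 0), (mk4 11 4 (-3) (-1)));
  ((mk4 19 16 (-25) (-21)), (mk4 3 1 (-4) (-1)), (mk4 1 0 1 1));
  ((mk4 19 16 (-6) (-5)), (mk4 3 1 (-1) 0), (mk4 1 0 1 1));
  ((mk4 20 (-17) (-27) 23), (mk4 3 1 (-4) (-1)), (mk4 7 (-6) (-1) 1));
  ((mk4 20 (-17) (-7) 6), (mk4 3 1 (-1) 0), (mk4 7 (-6) (-1) 1));
  ((mk4 20 3 (-27) (-4)), (mk4 3 1 (-4) (-1)), (mk4 7 1 (-1) 0));
  ((mk4 20 3 (-7) (-1)), (mk4 3 1 (-1) 0), (mk4 7 1 (-1) 0));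
  ((mk4 22 (-25) (-29) 33), (mk4 3 1 (-4) (-1)), (mk4 2 (-3) 1 (-1)));
  ((mk4 22 (-25) (-7) 8), (mk4 3 1 (-1) 0), (mk4 2 (-3) 1 (-1)));
  ((mk4 22 (-3) (-29) 4), (mk4 3 1 (-4) (-1)), (mk4 2 (-1) 1 0));
  ((mk4 22 (-3) (-7) 1), (mk4 3 1 (-1) 0), (mk4 2 (-1) 1 0));
  ((mk4 22 19 (-29) (-25)), (mk4 3 1 (-4) (-1)), (mk4 2 1 1 1));
  ((mk4 22 19 (-7) (-6)), (mk4 3 1 (-1) 0), (mk4 2 1 1 1));
  ((mk4 25 (-9) (-11) 4), (mk4 2 1 (-1) 0), (mk4 (-4) 1 3 (-1)));
  ((mk4 25 (-3) (-33) 4), (mk4 3 1 (-4) (-1)), (mk4 3 (-1) 1 0));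
  ((mk4 25 (-3) (-8) 1), (mk4 3 1 (-1) 0), (mk4 3 (-1) 1 0));
  ((mk4 25 9 (-14) (-5)), (mk4 2 1 (-1) 0), (mk4 14 5 (-3) (-1)));
  ((mk4 25 22 (-33) (-29)), (mk4 3 1 (-4) (-1)), (mk4 3 2 1 1));
  ((mk4 25 22 (-8) (-7)), (mk4 3 1 (-1) 0), (mk4 3 2 1 1));
  ((mk4 26 (-7) (-11) 3), (mk4 7 (-2) (-3) 1), (mk4 (-1) (-1) 1 0));
  ((mk4 26 7 (-15) (-4)), (mk4 7 2 (-4) (-1)), (mk4 4 1 (-1) 0));
  ((mk4 34 (-9) (-15) 4), (mk4 2 1 (-1) 0), (mk4 (-5) 1 4 (-1)));
  ((mk4 34 9 (-19) (-5)), (mk4 2 1 (-1) 0), (mk4 19 5 (-4) (-1)));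
  ((mk4 (-15) (-13) (-8) (-7)), (mk4 1 0 0 1), (mk4 25 22 (-8) (-7)));
  ((mk4 (-15) (-13) 7 6), (mk4 1 1 (-1) 0), (mk4 33 29 (-8) (-7)));
  ((mk4 (-15) (-2) (-7) (-1)), (mk4 1 0 0 1), (mk4 20 3 (-7) (-1)));
  ((mk4 (-15) (-2) 8 1), (mk4 1 1 (-1) 0), (mk4 27 4 (-7) (-1)));
  ((mk4 (-15) 2 (-8) 1), (mk4 1 0 0 1), (mk4 25 (-3) (-8) 1));
  ((mk4 (-15) 2 7 (-1)), (mk4 1 1 (-1) 0), (mk4 33 (-4) (-8) 1));
  ((mk4 (-15) 13 (-7) 6), (mk4 1 0 0 1), (mk4 20 (-17) (-7) 6));
  ((mk4 (-15) 13 8 (-7)), (mk4 1 1 (-1) 0), (mk4 27 (-23) (-7) 6));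
  ((mk4 (-13) (-15) (-6) (-7)), (mk4 1 0 0 1), (mk4 17 20 (-6) (-7)));
  ((mk4 (-13) (-15) 7 8), (mk4 1 1 (-1) 0), (mk4 23 27 (-6) (-7)));
  ((mk4 (-13) (-11) (-7) (-6)), (mk4 1 0 0 1), (mk4 22 19 (-7) (-6)));
  ((mk4 (-13) (-11) 6 5), (mk4 1 1 (-1) 0), (mk4 29 25 (-7) (-6)));
  ((mk4 (-13) (-8) 5 3), (mk4 3 1 (-1) 0), (mk4 (-5) (-3) 2 1));
  ((mk4 (-13) (-5) (-5) (-2)), (mk4 1 0 0 1), (mk4 12 5 (-5) (-2)));
  ((mk4 (-13) (-5) 8 3), (mk4 5 2 (-3) (-1)), (mk4 (-3) (-1) 1 0));
  ((mk4 (-13) (-2) (-6) (-1)), (mk4 1 0 0 1), (mk4 17 3 (-6) (-1)));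
  ((mk4 (-13) (-2) 7 1), (mk4 1 1 (-1) 0), (mk4 23 4 (-6) (-1)));
  ((mk4 (-13) 2 (-7) 1), (mk4 1 0 0 1), (mk4 22 (-3) (-7) 1));
  ((mk4 (-13) 2 6 (-1)), (mk4 1 1 (-1) 0), (mk4 29 (-4) (-7) 1));
  ((mk4 (-13) 5 (-8) 3), (mk4 2 (-1) 1 0), (mk4 7 (-2) (-3) 1));
  ((mk4 (-13) 5 5 (-2)), (mk4 5 3 (-2) (-1)), (mk4 3 1 (-1) 0));
  ((mk4 (-13) 8 (-5) 3), (mk4 1 0 0 1), (mk4 12 (-7) (-5) 3));
  ((mk4 (-13) 11 (-6) 5), (mk4 1 0 0 1), (mk4 17 (-14) (-6) 5));
  ((mk4 (-13) 11 7 (-6)), (mk4 1 1 (-1) 0), (mk4 23 (-19) (-6) 5));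
  ((mk4 (-13) 15 (-7) 8), (mk4 1 0 0 1), (mk4 22 (-25) (-7) 8));
  ((mk4 (-13) 15 6 (-7)), (mk4 1 1 (-1) 0), (mk4 29 (-33) (-7) 8));
  ((mk4 (-12) (-7) (-17) (-10)), (mk4 2 (-1) 3 (-1)), (mk4 (-5) (-3) 2 1));
  ((mk4 (-12) 17 7 (-10)), (mk4 2 1 (-1) 0), (mk4 (-7) 10 2 (-3)));
  ((mk4 (-11) (-13) (-5) (-6)), (mk4 1 0 0 1), (mk4 14 17 (-5) (-6)));
  ((mk4 (-11) (-13) 6 7), (mk4 1 1 (-1) 0), (mk4 19 23 (-5) (-6)));
  ((mk4 (-11) (-9) (-6) (-5)), (mk4 1 0 0 1), (mk4 19 16 (-6) (-5)));
  ((mk4 (-11) (-9) 5 4), (mk4 9 (-2) (-4) 1), (mk4 (-1) (-1) 1 0));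
  ((mk4 (-11) (-2) (-5) (-1)), (mk4 1 0 0 1), (mk4 14 3 (-5) (-1)));
  ((mk4 (-11) (-2) 6 1), (mk4 2 1 (-1) 0), (mk4 (-6) (-1) 1 0));
  ((mk4 (-11) 2 (-6) 1), (mk4 1 0 0 1), (mk4 19 (-3) (-6) 1));
  ((mk4 (-11) 2 5 (-1)), (mk4 2 1 (-1) 0), (mk4 0 1 (-1) 0));
  ((mk4 (-11) 9 (-5) 4), (mk4 1 0 0 1), (mk4 14 (-11) (-5) 4));
  ((mk4 (-11) 9 6 (-5)), (mk4 9 2 (-5) (-1)), (mk4 4 1 (-1) 0));
  ((mk4 (-11) 13 (-6) 7), (mk4 1 0 0 1), (mk4 19 (-22) (-6) 7));
  ((mk4 (-11) 13 5 (-6)), (mk4 1 1 (-1) 0), (mk4 25 (-29) (-6) 7));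
  ((mk4 (-9) (-11) (-4) (-5)), (mk4 1 0 0 1), (mk4 11 14 (-4) (-5)));
  ((mk4 (-9) (-11) 5 6), (mk4 2 1 (-1) 0), (mk4 (-5) (-6) 1 1));
  ((mk4 (-9) 11 (-5) 6), (mk4 1 0 0 1), (mk4 16 (-19) (-5) 6));
  ((mk4 (-9) 11 4 (-5)), (mk4 2 1 (-1) 0), (mk4 1 0 (-1) 1));
  ((mk4 (-8) (-13) (-3) (-5)), (mk4 1 0 0 1), (mk4 7 12 (-3) (-5)));
  ((mk4 (-8) (-13) 5 8), (mk4 3 2 (-2) (-1)), (mk4 3 7 (-1) (-2)));
  ((mk4 (-8) (-3) (-13) (-5)), (mk4 1 0 2 1), (mk4 (-8) (-3) 3 1));
  ((mk4 (-8) 13 (-5) 8), (mk4 1 (-1) 1 0), (mk4 (-5) 8 3 (-5)));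
  ((mk4 (-8) 13 3 (-5)), (mk4 3 1 (-1) 0), (mk4 (-3) 5 1 (-2)));
  ((mk4 (-7) (-17) 5 12), (mk4 1 1 (-1) 0), (mk4 5 13 (-2) (-5)));
  ((mk4 (-7) 12 (-10) 17), (mk4 2 (-1) 3 (-1)), (mk4 (-3) 5 1 (-2)));
  ((mk4 (-7) 18 5 (-13)), (mk4 7 3 (-5) (-2)), (mk4 (-1) 3 0 (-1)));
  ((mk4 (-5) (-13) (-3) (-8)), (mk4 1 0 0 1), (mk4 10 27 (-3) (-8)));
  ((mk4 (-5) (-13) 2 5), (mk4 5 3 (-2) (-1)), (mk4 (-1) 3 0 (-1)));
  ((mk4 (-2) (-15) (-1) (-8)), (mk4 1 0 0 1), (mk4 3 25 (-1) (-8)));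
  ((mk4 (-2) (-15) 1 7), (mk4 1 1 (-1) 0), (mk4 4 33 (-1) (-8)));
  ((mk4 (-2) (-13) (-1) (-7)), (mk4 1 0 0 1), (mk4 3 22 (-1) (-7)));
  ((mk4 (-2) (-13) 1 6), (mk4 1 1 (-1) 0), (mk4 4 29 (-1) (-7)));
  ((mk4 (-2) (-11) (-1) (-6)), (mk4 1 0 0 1), (mk4 3 19 (-1) (-6)));
  ((mk4 (-2) (-11) 1 5), (mk4 2 1 (-1) 0), (mk4 (-1) 0 0 (-1)));
  ((mk4 8 (-27) (-5) 17), (mk4 3 2 (-2) (-1)), (mk4 (-3) 8 1 (-3)));
  ((mk4 8 (-13) 5 (-8)), (mk4 1 (-1) 1 0), (mk4 5 (-8) (-3) 5));
  ((mk4 8 13 (-5) (-8)), (mk4 8 (-3) (-5) 2), (mk4 1 (-3) 0 1));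
  ((mk4 12 (-17) (-7) 10), (mk4 2 1 (-1) 0), (mk4 7 (-10) (-2) 3));
  ((mk4 12 7 17 10), (mk4 2 (-1) 3 (-1)), (mk4 5 3 (-2) (-1)));
  ((mk4 13 (-8) (-8) 5), (mk4 5 2 (-3) (-1)), (mk4 3 (-2) (-1) 1));
  ((mk4 13 8 8 5), (mk4 1 (-1) 1 0), (mk4 8 5 (-5) (-3)));
  ((mk4 (-13) (-8) (-8) (-5)), (mk4 1 (-1) 1 0), (mk4 (-8) (-5) 5 3));
  ((mk4 (-13) 8 8 (-5)), (mk4 5 2 (-3) (-1)), (mk4 (-3) 2 1 (-1)))].

Lemma ck1 : check_all 1 W_1 St_1. Proof. by vm_compute. Qed.
Lemma ck2 : check_all 2 W_2 St_2. Proof. by vm_compute. Qed.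
Lemma ck3 : check_all 3 W_3 St_3. Proof. by vm_compute. Qed.
Lemma ck4 : check_all 4 W_4 St_4. Proof. by vm_compute. Qed.
Lemma ck5 : check_all 5 W_5 St_5. Proof. by vm_compute. Qed.
Lemma i1 : I4 \in W_1. Proof. by vm_compute. Qed.
Lemma i2 : I4 \in W_2. Proof. by vm_compute. Qed.
Lemma i3 : I4 \in W_3. Proof. by vm_compute. Qed.
Lemma i4 : I4 \in W_4. Proof. by vm_compute. Qed.
Lemma i5 : I4 \in W_5. Proof. by vm_compute. Qed.

Delimit Scope nat_scope with N.

Theorem proposition1 :
  forall n : nat, (1 <= n <= 5)%N -> quotient_fg (gr_pow n u_minus_1).
Proof.
move=> n /andP [H1 H5].
case: n H1 H5 => [|[|[|[|[|[|n]]]]]] //= _ _.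
- exact: (qfg ck1 i1).
- exact: (qfg ck2 i2).
- exact: (qfg ck3 i3).
- exact: (qfg ck4 i4).
- exact: (qfg ck5 i5).
Qed.
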